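(* Let $m\geq1$ be an odd integer and $n>1$ an integer such that $\mathcal{A}_{m,n}:=m2^n-1$ is prime. Let $t\in\mathbb{F}_{\mathcal{A}_{m,n}}$ be such that $t^2+1$ is not a square in $\mathbb{F}_{\mathcal{A}_{m,n}}$, and let $E_t/\mathbb{F}_{\mathcal{A}_{m,n}}$ be the elliptic curve $y^2=x^3-(t^2+1)x$. Then the point $m\cdot(-1,t)$ generates the $2$-Sylow subgroup of $E_t(\mathbb{F}_{\mathcal{A}_{m,n}})$. *)

(* Defs.v *)
From mathcomp Require Import all_boot all_algebra.
Set Implicit Arguments. Unset Strict Implicit. Unset Printing Implicit Defensive.
Import GRing.Theory.
Local Open Scope ring_scope.

(* points of the projective curve: None = point at infinity O *)
Definition ec_point (F : fieldType) := option (F * F)%type.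

Definition on_curve (F : fieldType) (a b : F) (P : ec_point F) : bool :=
  match P with
  | None => true
  | Some (x, y) => y ^+ 2 == x ^+ 3 + a * x + b
  end.

(* the usual chord-and-tangent group law (valid for char F <> 2,3) *)
Definition ec_add (F : fieldType) (a : F) (P Q : ec_point F) : ec_point F :=
  match P, Q with
  | None, _ => Q
  | _, None => P
  | Some (x1, y1), Some (x2, y2) =>
    if x1 == x2 then
      if y1 == - y2 then None
      else
        let l := (3%:R * x1 ^+ 2 + a) / (2%:R * y1) in
        let x3 := l ^+ 2 - x1 - x2 in
        Some (x3, l * (x1 - x3) - y1)
    else
      let l := (y2 - y1) / (x2 - x1) in
      let x3 := l ^+ 2 - x1 - x2 in
      Some (x3, l * (x1 - x3) - y1)
  end.

Definition ec_mul (F : fieldType) (a : F) (k : nat) (P : ec_point F) : ec_point F :=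
  iter k (ec_add a P) None.

(* membership in the 2-Sylow subgroup of E(F) for a finite field F: the points
   of E(F) of 2-power order (in a finite abelian group the Sylow 2-subgroup is
   exactly its 2-primary part) *)
Definition in_2sylow (F : fieldType) (a b : F) (P : ec_point F) : Prop :=
  on_curve a b P /\ exists k : nat, ec_mul a (2 ^ k) P = None.

Definition generates_2sylow (F : fieldType) (a b : F) (Q : ec_point F) : Prop :=
  in_2sylow a b Q /\ forall P, in_2sylow a b P -> exists j : nat, P = ec_mul a j Q.

(* Main.v *)
From HB Require Import structures.
Require Import Defs.
From mathcomp Require Import all_boot all_algebra all_fingroup all_solvable all_field.
From mathcomp Require Import ring zify.
Set Implicit Arguments. Unset Strict Implicit. Unset Printing Implicit Defensive.
Import GRing.Theory.
Local Open Scope ring_scope.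

(* Proof strategy: the Weierstrass group law of E_t is shown associative by
   transporting it (via an explicit injective homomorphism phi) to the complete
   Edwards curve x^2 + y^2 = 1 - x^2 y^2, whose addition law is associative by
   an explicit polynomial certificate. *)

Lemma ed_assoc_X (F : fieldType) (x1 y1 x2 y2 x3 y3 X12 Y12 X23 Y23 L R : F) :
  (L * (1 - (((X12 * x3) * Y12) * y3))) = ((X12 * y3) + (Y12 * x3)) ->
  (R * (1 - (((x1 * X23) * y1) * Y23))) = ((x1 * Y23) + (y1 * X23)) ->
  (X12 * (1 - (((x1 * x2) * y1) * y2))) = ((x1 * y2) + (y1 * x2)) ->
  (Y12 * (1 + (((x1 * x2) * y1) * y2))) = ((y1 * y2) - (x1 * x2)) ->
  (X23 * (1 - (((x2 * x3) * y2) * y3))) = ((x2 * y3) + (y2 * x3)) ->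
  (Y23 * (1 + (((x2 * x3) * y2) * y3))) = ((y2 * y3) - (x2 * x3)) ->
  ((x1 ^+ 2) + (y1 ^+ 2)) = (1 - ((x1 ^+ 2) * (y1 ^+ 2))) ->
  ((x2 ^+ 2) + (y2 ^+ 2)) = (1 - ((x2 ^+ 2) * (y2 ^+ 2))) ->
  ((x3 ^+ 2) + (y3 ^+ 2)) = (1 - ((x3 ^+ 2) * (y3 ^+ 2))) ->
  (1 - (((X12 * x3) * Y12) * y3)) != 0 ->
  (1 - (((x1 * X23) * y1) * Y23)) != 0 ->
  (1 - (((x1 * x2) * y1) * y2)) != 0 ->
  (1 + (((x1 * x2) * y1) * y2)) != 0 ->
  (1 - (((x2 * x3) * y2) * y3)) != 0 ->
  (1 + (((x2 * x3) * y2) * y3)) != 0 ->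
  (1 + (y1 ^+ 2)) != 0 ->
  (1 + (y2 ^+ 2)) != 0 ->
  (1 + (y3 ^+ 2)) != 0 ->
  L = R.
Proof.
move=> h0 h1 h2 h3 h4 h5 h6 h7 h8 n0 n1 n2 n3 n4 n5 n6 n7 n8.
have g0 : (L * (1 - (((X12 * x3) * Y12) * y3))) - ((X12 * y3) + (Y12 * x3)) = 0 by rewrite h0 subrr.
have g1 : (R * (1 - (((x1 * X23) * y1) * Y23))) - ((x1 * Y23) + (y1 * X23)) = 0 by rewrite h1 subrr.
have g2 : (X12 * (1 - (((x1 * x2) * y1) * y2))) - ((x1 * y2) + (y1 * x2)) = 0 by rewrite h2 subrr.
have g3 : (Y12 * (1 + (((x1 * x2) * y1) * y2))) - ((y1 * y2) - (x1 * x2)) = 0 by rewrite h3 subrr.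
have g4 : (X23 * (1 - (((x2 * x3) * y2) * y3))) - ((x2 * y3) + (y2 * x3)) = 0 by rewrite h4 subrr.
have g5 : (Y23 * (1 + (((x2 * x3) * y2) * y3))) - ((y2 * y3) - (x2 * x3)) = 0 by rewrite h5 subrr.
have g6 : ((x1 ^+ 2) + (y1 ^+ 2)) - (1 - ((x1 ^+ 2) * (y1 ^+ 2))) = 0 by rewrite h6 subrr.
have g7 : ((x2 ^+ 2) + (y2 ^+ 2)) - (1 - ((x2 ^+ 2) * (y2 ^+ 2))) = 0 by rewrite h7 subrr.
have g8 : ((x3 ^+ 2) + (y3 ^+ 2)) - (1 - ((x3 ^+ 2) * (y3 ^+ 2))) = 0 by rewrite h8 subrr.
apply/eqP; rewrite -subr_eq0; apply/eqP.
have E : ((1 - (((X12 * x3) * Y12) * y3)) ^+ 1 * (1 - (((x1 * X23) * y1) * Y23)) ^+ 1 * (1 - (((x1 * x2) * y1) * y2)) ^+ 1 * (1 + (((x1 * x2) * y1) * y2)) ^+ 1 * (1 - (((x2 * x3) * y2) * y3)) ^+ 1 * (1 + (((x2 * x3) * y2) * y3)) ^+ 1 * (1 + (y1 ^+ 2)) ^+ 2 * (1 + (y2 ^+ 2)) ^+ 3 * (1 + (y3 ^+ 2)) ^+ 2) * (L - R) =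
  ((1 - (((x1 * X23) * y1) * Y23)) ^+ 1 * (1 - (((x1 * x2) * y1) * y2)) ^+ 1 * (1 + (((x1 * x2) * y1) * y2)) ^+ 1 * (1 - (((x2 * x3) * y2) * y3)) ^+ 1 * (1 + (((x2 * x3) * y2) * y3)) ^+ 1 * (1 + (y1 ^+ 2)) ^+ 2 * (1 + (y2 ^+ 2)) ^+ 3 * (1 + (y3 ^+ 2)) ^+ 2 * (1)) * ((L * (1 - (((X12 * x3) * Y12) * y3))) - ((X12 * y3) + (Y12 * x3)))
  + ((1 - (((x1 * x2) * y1) * y2)) ^+ 1 * (1 + (((x1 * x2) * y1) * y2)) ^+ 1 * (1 - (((x2 * x3) * y2) * y3)) ^+ 1 * (1 + (((x2 * x3) * y2) * y3)) ^+ 1 * (1 + (y1 ^+ 2)) ^+ 2 * (1 + (y2 ^+ 2)) ^+ 3 * (1 + (y3 ^+ 2)) ^+ 2 * (- 1 + x3*y3*X12*Y12)) * ((R * (1 - (((x1 * X23) * y1) * Y23))) - ((x1 * Y23) + (y1 * X23)))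
  + ((1 + (((x1 * x2) * y1) * y2)) ^+ 1 * (1 - (((x2 * x3) * y2) * y3)) ^+ 1 * (1 + (((x2 * x3) * y2) * y3)) ^+ 1 * (1 + (y1 ^+ 2)) ^+ 2 * (1 + (y2 ^+ 2)) ^+ 3 * (1 + (y3 ^+ 2)) ^+ 2 * (y3 + y1*x3*y3*Y12*X23 + x1*x3*y3*Y12*Y23 - x1*y1*y3*X23*Y23)) * ((X12 * (1 - (((x1 * x2) * y1) * y2))) - ((x1 * y2) + (y1 * x2)))
  + ((1 - (((x2 * x3) * y2) * y3)) ^+ 1 * (1 + (((x2 * x3) * y2) * y3)) ^+ 1 * (1 + (y1 ^+ 2)) ^+ 2 * (1 + (y2 ^+ 2)) ^+ 3 * (1 + (y3 ^+ 2)) ^+ 2 * (x3 + y1^+2*x2*x3*y3*X23 - x1*y1*x3*X23*Y23 + x1*y1*y2*x3*y3*X23 + x1*y1*x2*x3*y3*Y23 - x1*y1*x2*y2*x3 + x1^+2*y2*x3*y3*Y23 + x1^+2*y1^+2*x2*y2*x3*X23*Y23)) * ((Y12 * (1 + (((x1 * x2) * y1) * y2))) - ((y1 * y2) - (x1 * x2)))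
  + ((1 + (((x2 * x3) * y2) * y3)) ^+ 1 * (1 + (y1 ^+ 2)) ^+ 2 * (1 + (y2 ^+ 2)) ^+ 3 * (1 + (y3 ^+ 2)) ^+ 2 * (- y1 + y1^+3*x2*y2*x3*y3 - x1*y1^+2*y2*x3*Y23 + x1*y1^+2*y2^+2*x3*y3 - x1*y1^+2*x2*y3*Y23 - x1*y1^+2*x2^+2*x3*y3 - x1^+2*y1*y2*y3*Y23 + x1^+2*y1*x2*x3*Y23 - x1^+2*y1*x2*y2*x3*y3 + x1^+2*y1^+3*x2*y2^+2*x3*Y23 - x1^+2*y1^+3*x2^+2*y2*y3*Y23 + x1^+2*y1^+3*x2^+2*y2^+2 - x1^+3*y1^+2*x2*y2^+2*y3*Y23 - x1^+3*y1^+2*x2^+2*y2*x3*Y23)) * ((X23 * (1 - (((x2 * x3) * y2) * y3))) - ((x2 * y3) + (y2 * x3)))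
  + ((1 + (y1 ^+ 2)) ^+ 2 * (1 + (y2 ^+ 2)) ^+ 3 * (1 + (y3 ^+ 2)) ^+ 2 * (- x1 + x1*x2*y2*x3*y3 - x1*y1^+2*y2^+2*x3^+2 - x1*y1^+2*x2*y2*x3*y3 - x1*y1^+2*x2^+2*y3^+2 - x1*y1^+2*x2^+2*y2^+2*x3^+2*y3^+2 - x1^+2*y1*x2*y2*y3^+2 + x1^+2*y1*x2*y2*x3^+2 - x1^+2*y1*x2*y2^+3*x3^+2*y3^+2 + x1^+2*y1*x2^+3*y2*x3^+2*y3^+2 + x1^+2*y1^+3*x2*y2^+3*x3^+2 - x1^+2*y1^+3*x2^+3*y2*y3^+2 - x1^+3*x2*y2*x3*y3 + x1^+3*x2^+2*y2^+2*x3^+2*y3^+2 - x1^+3*y1^+2*x2*y2^+3*x3*y3 + x1^+3*y1^+2*x2^+2*y2^+2 - x1^+3*y1^+2*x2^+2*y2^+2*y3^+2 - x1^+3*y1^+2*x2^+2*y2^+2*x3^+2 - x1^+3*y1^+2*x2^+3*y2*x3*y3 - x1^+3*y1^+2*x2^+3*y2^+3*x3*y3)) * ((Y23 * (1 + (((x2 * x3) * y2) * y3))) - ((y2 * y3) - (x2 * x3)))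
  + ((1 + (y2 ^+ 2)) ^+ 3 * (1 + (y3 ^+ 2)) ^+ 2 * (y1*x2*y2^+2*y3 - y1*x2*y2^+2*y3^+3 - y1*x2*y2^+4*x3^+2*y3^+3 + y1*x2^+2*y2*x3 - y1*x2^+2*y2*x3^+3 - y1*x2^+3*y2^+4*x3^+2*y3^+3 - y1*x2^+4*y2*x3^+3*y3^+2 - y1*x2^+4*y2^+3*x3^+3*y3^+2 + y1^+3*x2*y2^+2*y3 - y1^+3*x2*y2^+2*y3^+3 + y1^+3*x2*y2^+4*x3^+2*y3 - y1^+3*x2*y2^+4*x3^+2*y3^+3 + y1^+3*x2^+2*y2*x3 - y1^+3*x2^+2*y2*x3^+3 + y1^+3*x2^+2*y2^+3*x3 - y1^+3*x2^+2*y2^+3*x3^+3 + y1^+3*x2^+3*y2^+2*y3 - y1^+3*x2^+3*y2^+2*y3^+3 + y1^+3*x2^+3*y2^+4*x3^+2*y3 - y1^+3*x2^+3*y2^+4*x3^+2*y3^+3 + y1^+3*x2^+4*y2*x3*y3^+2 - y1^+3*x2^+4*y2*x3^+3*y3^+2 + y1^+3*x2^+4*y2^+3*x3*y3^+2 - y1^+3*x2^+4*y2^+3*x3^+3*y3^+2 + y1^+5*x2*y2^+4*x3^+2*y3 + y1^+5*x2^+2*y2^+3*x3 - y1^+5*x2^+2*y2^+3*x3^+3 + y1^+5*x2^+3*y2^+2*y3 - y1^+5*x2^+3*y2^+2*y3^+3 + y1^+5*x2^+3*y2^+4*x3^+2*y3 + y1^+5*x2^+4*y2*x3*y3^+2 +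 y1^+5*x2^+4*y2^+3*x3*y3^+2 - x1*x2*y2^+2*x3*y3^+2 + x1*x2^+2*y2*x3^+2*y3 + x1*x2^+2*y2^+3*x3^+2*y3^+3 - x1*x2^+3*y2^+2*x3^+3*y3^+2 - x1*y1^+2*x2*y2^+2*x3*y3^+2 - x1*y1^+2*x2*y2^+4*x3*y3^+2 + x1*y1^+2*x2^+2*y2*x3^+2*y3 + x1*y1^+2*x2^+2*y2^+3*y3 - x1*y1^+2*x2^+2*y2^+3*y3^+3 + x1*y1^+2*x2^+2*y2^+3*x3^+2*y3^+3 - x1*y1^+2*x2^+3*y2^+2*x3 + x1*y1^+2*x2^+3*y2^+2*x3^+3 - x1*y1^+2*x2^+3*y2^+2*x3^+3*y3^+2 - x1*y1^+2*x2^+3*y2^+4*x3*y3^+2 + x1*y1^+2*x2^+4*y2*x3^+2*y3 + x1*y1^+2*x2^+4*y2^+3*x3^+2*y3 - x1*y1^+4*x2*y2^+4*x3*y3^+2 + x1*y1^+4*x2^+2*y2^+3*y3 - x1*y1^+4*x2^+2*y2^+3*y3^+3 - x1*y1^+4*x2^+3*y2^+2*x3 + x1*y1^+4*x2^+3*y2^+2*x3^+3 - x1*y1^+4*x2^+3*y2^+4*x3*y3^+2 + x1*y1^+4*x2^+4*y2*x3^+2*y3 + x1*y1^+4*x2^+4*y2^+3*x3^+2*y3)) * (((x1 ^+ 2) + (y1 ^+ 2)) - (1 - ((x1 ^+ 2) * (y1 ^+ 2))))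
  + ((1 + (y3 ^+ 2)) ^+ 2 * (y1*y2*x3 - y1*y2*x3*y3^+2 - y1*y2*x3^+3 - y1*y2*x3^+3*y3^+2 + 2*y1*y2^+3*x3 - 2*y1*y2^+3*x3*y3^+2 - 2*y1*y2^+3*x3^+3 - 2*y1*y2^+3*x3^+3*y3^+2 + y1*y2^+5*x3 - y1*y2^+5*x3*y3^+2 - y1*y2^+5*x3^+3 - y1*y2^+5*x3^+3*y3^+2 - y1*x2*y2^+2*x3^+2*y3^+3 - 3*y1*x2*y2^+4*x3^+2*y3^+3 - 3*y1*x2*y2^+6*x3^+2*y3^+3 - y1*x2*y2^+8*x3^+2*y3^+3 - y1*x2^+2*y2*x3^+3*y3^+2 - 3*y1*x2^+2*y2^+3*x3^+3*y3^+2 - 3*y1*x2^+2*y2^+5*x3^+3*y3^+2 - y1*x2^+2*y2^+7*x3^+3*y3^+2 + y1^+3*y2^+3*x3 - y1^+3*y2^+3*x3*y3^+2 - y1^+3*y2^+3*x3^+3 - y1^+3*y2^+3*x3^+3*y3^+2 + 2*y1^+3*y2^+5*x3 - 2*y1^+3*y2^+5*x3*y3^+2 - 2*y1^+3*y2^+5*x3^+3 - 2*y1^+3*y2^+5*x3^+3*y3^+2 + y1^+3*y2^+7*x3 - y1^+3*y2^+7*x3*y3^+2 - y1^+3*y2^+7*x3^+3 - y1^+3*y2^+7*x3^+3*y3^+2 + y1^+3*x2*y2^+2*y3 - y1^+3*x2*y2^+2*y3^+3 - y1^+3*x2*y2^+2*x3^+2*y3^+3 + 2*y1^+3*x2*y2^+4*y3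 - 2*y1^+3*x2*y2^+4*y3^+3 + y1^+3*x2*y2^+4*x3^+2*y3 - 2*y1^+3*x2*y2^+4*x3^+2*y3^+3 + y1^+3*x2*y2^+6*y3 - y1^+3*x2*y2^+6*y3^+3 + 2*y1^+3*x2*y2^+6*x3^+2*y3 - y1^+3*x2*y2^+6*x3^+2*y3^+3 + y1^+3*x2*y2^+8*x3^+2*y3 + y1^+3*x2^+2*y2*x3*y3^+2 + 3*y1^+3*x2^+2*y2^+3*x3*y3^+2 + 3*y1^+3*x2^+2*y2^+5*x3*y3^+2 + y1^+3*x2^+2*y2^+7*x3*y3^+2 - y1^+5*y2*x3 + y1^+5*y2*x3*y3^+2 + y1^+5*y2*x3^+3 + y1^+5*y2*x3^+3*y3^+2 - 2*y1^+5*y2^+3*x3 + 2*y1^+5*y2^+3*x3*y3^+2 + 2*y1^+5*y2^+3*x3^+3 + 2*y1^+5*y2^+3*x3^+3*y3^+2 - y1^+5*y2^+5*x3 + y1^+5*y2^+5*x3*y3^+2 + y1^+5*y2^+5*x3^+3 + y1^+5*y2^+5*x3^+3*y3^+2 + y1^+5*x2*y2^+2*x3^+2*y3^+3 + 3*y1^+5*x2*y2^+4*x3^+2*y3^+3 + 3*y1^+5*x2*y2^+6*x3^+2*y3^+3 + y1^+5*x2*y2^+8*x3^+2*y3^+3 + y1^+5*x2^+2*y2*x3^+3*y3^+2 + 3*y1^+5*x2^+2*y2^+3*x3^+3*y3^+2 + 3*y1^+5*x2^+2*y2^+5*x3^+3*y3^+2 + y1^+5*x2^+2*y2^+7*x3^+3*y3^+2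 - y1^+7*y2^+3*x3 + y1^+7*y2^+3*x3*y3^+2 + y1^+7*y2^+3*x3^+3 + y1^+7*y2^+3*x3^+3*y3^+2 - 2*y1^+7*y2^+5*x3 + 2*y1^+7*y2^+5*x3*y3^+2 + 2*y1^+7*y2^+5*x3^+3 + 2*y1^+7*y2^+5*x3^+3*y3^+2 - y1^+7*y2^+7*x3 + y1^+7*y2^+7*x3*y3^+2 + y1^+7*y2^+7*x3^+3 + y1^+7*y2^+7*x3^+3*y3^+2 - y1^+7*x2*y2^+2*y3 + y1^+7*x2*y2^+2*y3^+3 + y1^+7*x2*y2^+2*x3^+2*y3^+3 - 2*y1^+7*x2*y2^+4*y3 + 2*y1^+7*x2*y2^+4*y3^+3 - y1^+7*x2*y2^+4*x3^+2*y3 + 2*y1^+7*x2*y2^+4*x3^+2*y3^+3 - y1^+7*x2*y2^+6*y3 + y1^+7*x2*y2^+6*y3^+3 - 2*y1^+7*x2*y2^+6*x3^+2*y3 + y1^+7*x2*y2^+6*x3^+2*y3^+3 - y1^+7*x2*y2^+8*x3^+2*y3 - y1^+7*x2^+2*y2*x3*y3^+2 - 3*y1^+7*x2^+2*y2^+3*x3*y3^+2 - 3*y1^+7*x2^+2*y2^+5*x3*y3^+2 - y1^+7*x2^+2*y2^+7*x3*y3^+2 + x1*y1^+2*y2*y3 - x1*y1^+2*y2*y3^+3 - x1*y1^+2*y2*x3^+2*y3 - x1*y1^+2*y2*x3^+2*y3^+3 + 3*x1*y1^+2*y2^+3*y3 - 3*x1*y1^+2*y2^+3*y3^+3 - 3*x1*y1^+2*y2^+3*x3^+2*y3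 - 3*x1*y1^+2*y2^+3*x3^+2*y3^+3 + 3*x1*y1^+2*y2^+5*y3 - 3*x1*y1^+2*y2^+5*y3^+3 - 3*x1*y1^+2*y2^+5*x3^+2*y3 - 3*x1*y1^+2*y2^+5*x3^+2*y3^+3 + x1*y1^+2*y2^+7*y3 - x1*y1^+2*y2^+7*y3^+3 - x1*y1^+2*y2^+7*x3^+2*y3 - x1*y1^+2*y2^+7*x3^+2*y3^+3 - x1*y1^+2*x2*y2^+2*x3 + x1*y1^+2*x2*y2^+2*x3^+3 + 2*x1*y1^+2*x2*y2^+2*x3^+3*y3^+2 - 2*x1*y1^+2*x2*y2^+4*x3 - x1*y1^+2*x2*y2^+4*x3*y3^+2 + 2*x1*y1^+2*x2*y2^+4*x3^+3 + 5*x1*y1^+2*x2*y2^+4*x3^+3*y3^+2 - x1*y1^+2*x2*y2^+6*x3 - 2*x1*y1^+2*x2*y2^+6*x3*y3^+2 + x1*y1^+2*x2*y2^+6*x3^+3 + 4*x1*y1^+2*x2*y2^+6*x3^+3*y3^+2 - x1*y1^+2*x2*y2^+8*x3*y3^+2 + x1*y1^+2*x2*y2^+8*x3^+3*y3^+2 + x1*y1^+2*x2^+2*y2*x3^+2*y3 - x1*y1^+2*x2^+2*y2*x3^+2*y3^+3 + 3*x1*y1^+2*x2^+2*y2^+3*x3^+2*y3 - 3*x1*y1^+2*x2^+2*y2^+3*x3^+2*y3^+3 + 3*x1*y1^+2*x2^+2*y2^+5*x3^+2*y3 - 3*x1*y1^+2*x2^+2*y2^+5*x3^+2*y3^+3 +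 x1*y1^+2*x2^+2*y2^+7*x3^+2*y3 - x1*y1^+2*x2^+2*y2^+7*x3^+2*y3^+3 + 2*x1*y1^+4*y2*y3 - 2*x1*y1^+4*y2*y3^+3 - 2*x1*y1^+4*y2*x3^+2*y3 - 2*x1*y1^+4*y2*x3^+2*y3^+3 + 4*x1*y1^+4*y2^+3*y3 - 4*x1*y1^+4*y2^+3*y3^+3 - 4*x1*y1^+4*y2^+3*x3^+2*y3 - 4*x1*y1^+4*y2^+3*x3^+2*y3^+3 + 2*x1*y1^+4*y2^+5*y3 - 2*x1*y1^+4*y2^+5*y3^+3 - 2*x1*y1^+4*y2^+5*x3^+2*y3 - 2*x1*y1^+4*y2^+5*x3^+2*y3^+3 + 2*x1*y1^+4*x2*y2^+2*x3^+3*y3^+2 + 6*x1*y1^+4*x2*y2^+4*x3^+3*y3^+2 + 6*x1*y1^+4*x2*y2^+6*x3^+3*y3^+2 + 2*x1*y1^+4*x2*y2^+8*x3^+3*y3^+2 - 2*x1*y1^+4*x2^+2*y2*x3^+2*y3^+3 - 6*x1*y1^+4*x2^+2*y2^+3*x3^+2*y3^+3 - 6*x1*y1^+4*x2^+2*y2^+5*x3^+2*y3^+3 - 2*x1*y1^+4*x2^+2*y2^+7*x3^+2*y3^+3 + x1*y1^+6*y2*y3 - x1*y1^+6*y2*y3^+3 - x1*y1^+6*y2*x3^+2*y3 - x1*y1^+6*y2*x3^+2*y3^+3 + x1*y1^+6*y2^+3*y3 - x1*y1^+6*y2^+3*y3^+3 - x1*y1^+6*y2^+3*x3^+2*y3 -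 x1*y1^+6*y2^+3*x3^+2*y3^+3 - x1*y1^+6*y2^+5*y3 + x1*y1^+6*y2^+5*y3^+3 + x1*y1^+6*y2^+5*x3^+2*y3 + x1*y1^+6*y2^+5*x3^+2*y3^+3 - x1*y1^+6*y2^+7*y3 + x1*y1^+6*y2^+7*y3^+3 + x1*y1^+6*y2^+7*x3^+2*y3 + x1*y1^+6*y2^+7*x3^+2*y3^+3 + x1*y1^+6*x2*y2^+2*x3 - x1*y1^+6*x2*y2^+2*x3^+3 + 2*x1*y1^+6*x2*y2^+4*x3 + x1*y1^+6*x2*y2^+4*x3*y3^+2 - 2*x1*y1^+6*x2*y2^+4*x3^+3 + x1*y1^+6*x2*y2^+4*x3^+3*y3^+2 + x1*y1^+6*x2*y2^+6*x3 + 2*x1*y1^+6*x2*y2^+6*x3*y3^+2 - x1*y1^+6*x2*y2^+6*x3^+3 + 2*x1*y1^+6*x2*y2^+6*x3^+3*y3^+2 + x1*y1^+6*x2*y2^+8*x3*y3^+2 + x1*y1^+6*x2*y2^+8*x3^+3*y3^+2 - x1*y1^+6*x2^+2*y2*x3^+2*y3 - x1*y1^+6*x2^+2*y2*x3^+2*y3^+3 - 3*x1*y1^+6*x2^+2*y2^+3*x3^+2*y3 - 3*x1*y1^+6*x2^+2*y2^+3*x3^+2*y3^+3 - 3*x1*y1^+6*x2^+2*y2^+5*x3^+2*y3 - 3*x1*y1^+6*x2^+2*y2^+5*x3^+2*y3^+3 - x1*y1^+6*x2^+2*y2^+7*x3^+2*y3 - x1*y1^+6*x2^+2*y2^+7*x3^+2*y3^+3))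 * (((x2 ^+ 2) + (y2 ^+ 2)) - (1 - ((x2 ^+ 2) * (y2 ^+ 2))))
  + ((- y1*y2*x3 - 2*y1*y2*x3*y3^+2 - y1*y2*x3*y3^+4 - y1*y2^+3*x3 - 2*y1*y2^+3*x3*y3^+2 - y1*y2^+3*x3*y3^+4 + y1*y2^+5*x3 + 2*y1*y2^+5*x3*y3^+2 + y1*y2^+5*x3*y3^+4 + y1*y2^+7*x3 + 2*y1*y2^+7*x3*y3^+2 + y1*y2^+7*x3*y3^+4 - y1*x2*y2^+2*y3 - 2*y1*x2*y2^+2*y3^+3 - y1*x2*y2^+2*y3^+5 - 3*y1*x2*y2^+4*y3 - 6*y1*x2*y2^+4*y3^+3 - 3*y1*x2*y2^+4*y3^+5 - 3*y1*x2*y2^+6*y3 - 6*y1*x2*y2^+6*y3^+3 - 3*y1*x2*y2^+6*y3^+5 - y1*x2*y2^+8*y3 - 2*y1*x2*y2^+8*y3^+3 - y1*x2*y2^+8*y3^+5 - y1^+3*y2^+3*x3 - 2*y1^+3*y2^+3*x3*y3^+2 - y1^+3*y2^+3*x3*y3^+4 - y1^+3*y2^+5*x3 - 2*y1^+3*y2^+5*x3*y3^+2 - y1^+3*y2^+5*x3*y3^+4 + y1^+3*y2^+7*x3 + 2*y1^+3*y2^+7*x3*y3^+2 + y1^+3*y2^+7*x3*y3^+4 + y1^+3*y2^+9*x3 + 2*y1^+3*y2^+9*x3*y3^+2 + y1^+3*y2^+9*x3*y3^+4 - y1^+3*x2*y2^+2*y3 - 2*y1^+3*x2*y2^+2*y3^+3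 - y1^+3*x2*y2^+2*y3^+5 - y1^+3*x2*y2^+4*y3 - 2*y1^+3*x2*y2^+4*y3^+3 - y1^+3*x2*y2^+4*y3^+5 + y1^+3*x2*y2^+6*y3 + 2*y1^+3*x2*y2^+6*y3^+3 + y1^+3*x2*y2^+6*y3^+5 + y1^+3*x2*y2^+8*y3 + 2*y1^+3*x2*y2^+8*y3^+3 + y1^+3*x2*y2^+8*y3^+5 + y1^+5*y2*x3 + 2*y1^+5*y2*x3*y3^+2 + y1^+5*y2*x3*y3^+4 + y1^+5*y2^+3*x3 + 2*y1^+5*y2^+3*x3*y3^+2 + y1^+5*y2^+3*x3*y3^+4 - y1^+5*y2^+5*x3 - 2*y1^+5*y2^+5*x3*y3^+2 - y1^+5*y2^+5*x3*y3^+4 - y1^+5*y2^+7*x3 - 2*y1^+5*y2^+7*x3*y3^+2 - y1^+5*y2^+7*x3*y3^+4 + y1^+5*x2*y2^+2*y3 + 2*y1^+5*x2*y2^+2*y3^+3 + y1^+5*x2*y2^+2*y3^+5 + 3*y1^+5*x2*y2^+4*y3 + 6*y1^+5*x2*y2^+4*y3^+3 + 3*y1^+5*x2*y2^+4*y3^+5 + 3*y1^+5*x2*y2^+6*y3 + 6*y1^+5*x2*y2^+6*y3^+3 + 3*y1^+5*x2*y2^+6*y3^+5 + y1^+5*x2*y2^+8*y3 + 2*y1^+5*x2*y2^+8*y3^+3 + y1^+5*x2*y2^+8*y3^+5 + y1^+7*y2^+3*x3 + 2*y1^+7*y2^+3*x3*y3^+2 + y1^+7*y2^+3*x3*y3^+4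 + y1^+7*y2^+5*x3 + 2*y1^+7*y2^+5*x3*y3^+2 + y1^+7*y2^+5*x3*y3^+4 - y1^+7*y2^+7*x3 - 2*y1^+7*y2^+7*x3*y3^+2 - y1^+7*y2^+7*x3*y3^+4 - y1^+7*y2^+9*x3 - 2*y1^+7*y2^+9*x3*y3^+2 - y1^+7*y2^+9*x3*y3^+4 + y1^+7*x2*y2^+2*y3 + 2*y1^+7*x2*y2^+2*y3^+3 + y1^+7*x2*y2^+2*y3^+5 + y1^+7*x2*y2^+4*y3 + 2*y1^+7*x2*y2^+4*y3^+3 + y1^+7*x2*y2^+4*y3^+5 - y1^+7*x2*y2^+6*y3 - 2*y1^+7*x2*y2^+6*y3^+3 - y1^+7*x2*y2^+6*y3^+5 - y1^+7*x2*y2^+8*y3 - 2*y1^+7*x2*y2^+8*y3^+3 - y1^+7*x2*y2^+8*y3^+5 - x1*y1^+2*y2*y3 - 2*x1*y1^+2*y2*y3^+3 - x1*y1^+2*y2*y3^+5 - 2*x1*y1^+2*y2^+3*y3 - 4*x1*y1^+2*y2^+3*y3^+3 - 2*x1*y1^+2*y2^+3*y3^+5 + 2*x1*y1^+2*y2^+7*y3 + 4*x1*y1^+2*y2^+7*y3^+3 + 2*x1*y1^+2*y2^+7*y3^+5 + x1*y1^+2*y2^+9*y3 + 2*x1*y1^+2*y2^+9*y3^+3 + x1*y1^+2*y2^+9*y3^+5 + 2*x1*y1^+2*x2*y2^+2*x3 + 4*x1*y1^+2*x2*y2^+2*x3*y3^+2 + 2*x1*y1^+2*x2*y2^+2*x3*y3^+4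 + 4*x1*y1^+2*x2*y2^+4*x3 + 8*x1*y1^+2*x2*y2^+4*x3*y3^+2 + 4*x1*y1^+2*x2*y2^+4*x3*y3^+4 + 2*x1*y1^+2*x2*y2^+6*x3 + 4*x1*y1^+2*x2*y2^+6*x3*y3^+2 + 2*x1*y1^+2*x2*y2^+6*x3*y3^+4 - 2*x1*y1^+4*y2*y3 - 4*x1*y1^+4*y2*y3^+3 - 2*x1*y1^+4*y2*y3^+5 - 2*x1*y1^+4*y2^+3*y3 - 4*x1*y1^+4*y2^+3*y3^+3 - 2*x1*y1^+4*y2^+3*y3^+5 + 2*x1*y1^+4*y2^+5*y3 + 4*x1*y1^+4*y2^+5*y3^+3 + 2*x1*y1^+4*y2^+5*y3^+5 + 2*x1*y1^+4*y2^+7*y3 + 4*x1*y1^+4*y2^+7*y3^+3 + 2*x1*y1^+4*y2^+7*y3^+5 + 2*x1*y1^+4*x2*y2^+2*x3 + 4*x1*y1^+4*x2*y2^+2*x3*y3^+2 + 2*x1*y1^+4*x2*y2^+2*x3*y3^+4 + 6*x1*y1^+4*x2*y2^+4*x3 + 12*x1*y1^+4*x2*y2^+4*x3*y3^+2 + 6*x1*y1^+4*x2*y2^+4*x3*y3^+4 + 6*x1*y1^+4*x2*y2^+6*x3 + 12*x1*y1^+4*x2*y2^+6*x3*y3^+2 + 6*x1*y1^+4*x2*y2^+6*x3*y3^+4 + 2*x1*y1^+4*x2*y2^+8*x3 + 4*x1*y1^+4*x2*y2^+8*x3*y3^+2 + 2*x1*y1^+4*x2*y2^+8*x3*y3^+4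 - x1*y1^+6*y2*y3 - 2*x1*y1^+6*y2*y3^+3 - x1*y1^+6*y2*y3^+5 + 2*x1*y1^+6*y2^+5*y3 + 4*x1*y1^+6*y2^+5*y3^+3 + 2*x1*y1^+6*y2^+5*y3^+5 - x1*y1^+6*y2^+9*y3 - 2*x1*y1^+6*y2^+9*y3^+3 - x1*y1^+6*y2^+9*y3^+5 + 2*x1*y1^+6*x2*y2^+4*x3 + 4*x1*y1^+6*x2*y2^+4*x3*y3^+2 + 2*x1*y1^+6*x2*y2^+4*x3*y3^+4 + 4*x1*y1^+6*x2*y2^+6*x3 + 8*x1*y1^+6*x2*y2^+6*x3*y3^+2 + 4*x1*y1^+6*x2*y2^+6*x3*y3^+4 + 2*x1*y1^+6*x2*y2^+8*x3 + 4*x1*y1^+6*x2*y2^+8*x3*y3^+2 + 2*x1*y1^+6*x2*y2^+8*x3*y3^+4)) * (((x3 ^+ 2) + (y3 ^+ 2)) - (1 - ((x3 ^+ 2) * (y3 ^+ 2)))).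
  by ring.
rewrite g0 g1 g2 g3 g4 g5 g6 g7 g8 !mulr0 ?addr0 in E.
have nM : ((1 - (((X12 * x3) * Y12) * y3)) ^+ 1 * (1 - (((x1 * X23) * y1) * Y23)) ^+ 1 * (1 - (((x1 * x2) * y1) * y2)) ^+ 1 * (1 + (((x1 * x2) * y1) * y2)) ^+ 1 * (1 - (((x2 * x3) * y2) * y3)) ^+ 1 * (1 + (((x2 * x3) * y2) * y3)) ^+ 1 * (1 + (y1 ^+ 2)) ^+ 2 * (1 + (y2 ^+ 2)) ^+ 3 * (1 + (y3 ^+ 2)) ^+ 2) != 0.
  by repeat match goal with |- is_true ((_ ^+ _) != 0) => apply: expf_neq0; assumption | |- is_true ((_ * _) != 0) => apply: mulf_neq0 | |- is_true (1 != 0) => exact: oner_neq0 end.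
by move/eqP: E; rewrite mulf_eq0 (negbTE nM) /= => /eqP.
Qed.

Lemma ed_assoc_Y (F : fieldType) (x1 y1 x2 y2 x3 y3 X12 Y12 X23 Y23 L R : F) :
  (L * (1 + (((X12 * x3) * Y12) * y3))) = ((Y12 * y3) - (X12 * x3)) ->
  (R * (1 + (((x1 * X23) * y1) * Y23))) = ((y1 * Y23) - (x1 * X23)) ->
  (X12 * (1 - (((x1 * x2) * y1) * y2))) = ((x1 * y2) + (y1 * x2)) ->
  (Y12 * (1 + (((x1 * x2) * y1) * y2))) = ((y1 * y2) - (x1 * x2)) ->
  (X23 * (1 - (((x2 * x3) * y2) * y3))) = ((x2 * y3) + (y2 * x3)) ->
  (Y23 * (1 + (((x2 * x3) * y2) * y3))) = ((y2 * y3) - (x2 * x3)) ->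
  ((x1 ^+ 2) + (y1 ^+ 2)) = (1 - ((x1 ^+ 2) * (y1 ^+ 2))) ->
  ((x2 ^+ 2) + (y2 ^+ 2)) = (1 - ((x2 ^+ 2) * (y2 ^+ 2))) ->
  ((x3 ^+ 2) + (y3 ^+ 2)) = (1 - ((x3 ^+ 2) * (y3 ^+ 2))) ->
  (1 + (((X12 * x3) * Y12) * y3)) != 0 ->
  (1 + (((x1 * X23) * y1) * Y23)) != 0 ->
  (1 - (((x1 * x2) * y1) * y2)) != 0 ->
  (1 + (((x1 * x2) * y1) * y2)) != 0 ->
  (1 - (((x2 * x3) * y2) * y3)) != 0 ->
  (1 + (((x2 * x3) * y2) * y3)) != 0 ->
  (1 + (y1 ^+ 2)) != 0 ->
  (1 + (y2 ^+ 2)) != 0 ->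
  (1 + (y3 ^+ 2)) != 0 ->
  L = R.
Proof.
move=> h0 h1 h2 h3 h4 h5 h6 h7 h8 n0 n1 n2 n3 n4 n5 n6 n7 n8.
have g0 : (L * (1 + (((X12 * x3) * Y12) * y3))) - ((Y12 * y3) - (X12 * x3)) = 0 by rewrite h0 subrr.
have g1 : (R * (1 + (((x1 * X23) * y1) * Y23))) - ((y1 * Y23) - (x1 * X23)) = 0 by rewrite h1 subrr.
have g2 : (X12 * (1 - (((x1 * x2) * y1) * y2))) - ((x1 * y2) + (y1 * x2)) = 0 by rewrite h2 subrr.
have g3 : (Y12 * (1 + (((x1 * x2) * y1) * y2))) - ((y1 * y2) - (x1 * x2)) = 0 by rewrite h3 subrr.
have g4 : (X23 * (1 - (((x2 * x3) * y2) * y3))) - ((x2 * y3) + (y2 * x3)) = 0 by rewrite h4 subrr.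
have g5 : (Y23 * (1 + (((x2 * x3) * y2) * y3))) - ((y2 * y3) - (x2 * x3)) = 0 by rewrite h5 subrr.
have g6 : ((x1 ^+ 2) + (y1 ^+ 2)) - (1 - ((x1 ^+ 2) * (y1 ^+ 2))) = 0 by rewrite h6 subrr.
have g7 : ((x2 ^+ 2) + (y2 ^+ 2)) - (1 - ((x2 ^+ 2) * (y2 ^+ 2))) = 0 by rewrite h7 subrr.
have g8 : ((x3 ^+ 2) + (y3 ^+ 2)) - (1 - ((x3 ^+ 2) * (y3 ^+ 2))) = 0 by rewrite h8 subrr.
apply/eqP; rewrite -subr_eq0; apply/eqP.
have E : ((1 + (((X12 * x3) * Y12) * y3)) ^+ 1 * (1 + (((x1 * X23) * y1) * Y23)) ^+ 1 * (1 - (((x1 * x2) * y1) * y2)) ^+ 1 * (1 + (((x1 * x2) * y1) * y2)) ^+ 1 * (1 - (((x2 * x3) * y2) * y3)) ^+ 1 * (1 + (((x2 * x3) * y2) * y3)) ^+ 1 * (1 + (y1 ^+ 2)) ^+ 2 * (1 + (y2 ^+ 2)) ^+ 3 * (1 + (y3 ^+ 2)) ^+ 2) * (L - R) =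
  ((1 + (((x1 * X23) * y1) * Y23)) ^+ 1 * (1 - (((x1 * x2) * y1) * y2)) ^+ 1 * (1 + (((x1 * x2) * y1) * y2)) ^+ 1 * (1 - (((x2 * x3) * y2) * y3)) ^+ 1 * (1 + (((x2 * x3) * y2) * y3)) ^+ 1 * (1 + (y1 ^+ 2)) ^+ 2 * (1 + (y2 ^+ 2)) ^+ 3 * (1 + (y3 ^+ 2)) ^+ 2 * (1)) * ((L * (1 + (((X12 * x3) * Y12) * y3))) - ((Y12 * y3) - (X12 * x3)))
  + ((1 - (((x1 * x2) * y1) * y2)) ^+ 1 * (1 + (((x1 * x2) * y1) * y2)) ^+ 1 * (1 - (((x2 * x3) * y2) * y3)) ^+ 1 * (1 + (((x2 * x3) * y2) * y3)) ^+ 1 * (1 + (y1 ^+ 2)) ^+ 2 * (1 + (y2 ^+ 2)) ^+ 3 * (1 + (y3 ^+ 2)) ^+ 2 * (- 1 - x3*y3*X12*Y12)) * ((R * (1 + (((x1 * X23) * y1) * Y23))) - ((y1 * Y23) - (x1 * X23)))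
  + ((1 + (((x1 * x2) * y1) * y2)) ^+ 1 * (1 - (((x2 * x3) * y2) * y3)) ^+ 1 * (1 + (((x2 * x3) * y2) * y3)) ^+ 1 * (1 + (y1 ^+ 2)) ^+ 2 * (1 + (y2 ^+ 2)) ^+ 3 * (1 + (y3 ^+ 2)) ^+ 2 * (- x3 - y1*x3*y3*Y12*Y23 + x1*x3*y3*Y12*X23 - x1*y1*x3*X23*Y23)) * ((X12 * (1 - (((x1 * x2) * y1) * y2))) - ((x1 * y2) + (y1 * x2)))
  + ((1 - (((x2 * x3) * y2) * y3)) ^+ 1 * (1 + (((x2 * x3) * y2) * y3)) ^+ 1 * (1 + (y1 ^+ 2)) ^+ 2 * (1 + (y2 ^+ 2)) ^+ 3 * (1 + (y3 ^+ 2)) ^+ 2 * (y3 - y1^+2*x2*x3*y3*Y23 + x1*y1*y3*X23*Y23 - x1*y1*y2*x3*y3*Y23 + x1*y1*x2*x3*y3*X23 - x1*y1*x2*y2*y3 + x1^+2*y2*x3*y3*X23 - x1^+2*y1^+2*x2*y2*y3*X23*Y23)) * ((Y12 * (1 + (((x1 * x2) * y1) * y2))) - ((y1 * y2) - (x1 * x2)))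
  + ((1 + (((x2 * x3) * y2) * y3)) ^+ 1 * (1 + (y1 ^+ 2)) ^+ 2 * (1 + (y2 ^+ 2)) ^+ 3 * (1 + (y3 ^+ 2)) ^+ 2 * (x1 + x1*y1^+2*y2*y3*Y23 - x1*y1^+2*x2*x3*Y23 + x1*y1^+2*x2*y2*x3*y3 - x1^+2*y1*y2*x3*Y23 + x1^+2*y1*y2^+2*x3*y3 - x1^+2*y1*x2*y3*Y23 - x1^+2*y1*x2^+2*x3*y3 - x1^+2*y1^+3*x2*y2^+2*y3*Y23 - x1^+2*y1^+3*x2^+2*y2*x3*Y23 - x1^+3*x2*y2*x3*y3 - x1^+3*y1^+2*x2*y2^+2*x3*Y23 + x1^+3*y1^+2*x2^+2*y2*y3*Y23 - x1^+3*y1^+2*x2^+2*y2^+2)) * ((X23 * (1 - (((x2 * x3) * y2) * y3))) - ((x2 * y3) + (y2 * x3)))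
  + ((1 + (y1 ^+ 2)) ^+ 2 * (1 + (y2 ^+ 2)) ^+ 3 * (1 + (y3 ^+ 2)) ^+ 2 * (- y1 + y1*x2*y2*x3*y3 - y1^+3*x2*y2*x3*y3 + y1^+3*x2^+2*y2^+2*x3^+2*y3^+2 + x1*y1^+2*x2*y2*y3^+2 - x1*y1^+2*x2*y2*x3^+2 + x1*y1^+2*x2*y2^+3*x3^+2*y3^+2 - x1*y1^+2*x2^+3*y2*x3^+2*y3^+2 - x1^+2*y1*y2^+2*x3^+2 - x1^+2*y1*x2*y2*x3*y3 - x1^+2*y1*x2^+2*y3^+2 - x1^+2*y1*x2^+2*y2^+2*x3^+2*y3^+2 - x1^+2*y1^+3*x2*y2^+3*x3*y3 + x1^+2*y1^+3*x2^+2*y2^+2 - x1^+2*y1^+3*x2^+2*y2^+2*y3^+2 - x1^+2*y1^+3*x2^+2*y2^+2*x3^+2 - x1^+2*y1^+3*x2^+3*y2*x3*y3 - x1^+2*y1^+3*x2^+3*y2^+3*x3*y3 - x1^+3*y1^+2*x2*y2^+3*x3^+2 + x1^+3*y1^+2*x2^+3*y2*y3^+2)) * ((Y23 * (1 + (((x2 * x3) * y2) * y3))) - ((y2 * y3) - (x2 * x3)))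
  + ((1 + (y2 ^+ 2)) ^+ 3 * (1 + (y3 ^+ 2)) ^+ 2 * (- y1*x2*y2^+2*x3 + y1*x2*y2^+2*x3^+3 + y1*x2*y2^+4*x3^+3*y3^+2 + y1*x2^+2*y2*y3 - y1*x2^+2*y2*y3^+3 + y1*x2^+3*y2^+4*x3^+3*y3^+2 - y1*x2^+4*y2*x3^+2*y3^+3 - y1*x2^+4*y2^+3*x3^+2*y3^+3 - y1^+3*x2*y2^+2*x3 + y1^+3*x2*y2^+2*x3^+3 - y1^+3*x2*y2^+4*x3*y3^+2 + y1^+3*x2*y2^+4*x3^+3*y3^+2 + y1^+3*x2^+2*y2*y3 - y1^+3*x2^+2*y2*y3^+3 + y1^+3*x2^+2*y2^+3*y3 - y1^+3*x2^+2*y2^+3*y3^+3 - y1^+3*x2^+3*y2^+2*x3 + y1^+3*x2^+3*y2^+2*x3^+3 - y1^+3*x2^+3*y2^+4*x3*y3^+2 + y1^+3*x2^+3*y2^+4*x3^+3*y3^+2 + y1^+3*x2^+4*y2*x3^+2*y3 - y1^+3*x2^+4*y2*x3^+2*y3^+3 + y1^+3*x2^+4*y2^+3*x3^+2*y3 - y1^+3*x2^+4*y2^+3*x3^+2*y3^+3 - y1^+5*x2*y2^+4*x3*y3^+2 + y1^+5*x2^+2*y2^+3*y3 - y1^+5*x2^+2*y2^+3*y3^+3 - y1^+5*x2^+3*y2^+2*x3 + y1^+5*x2^+3*y2^+2*x3^+3 - y1^+5*x2^+3*y2^+4*x3*y3^+2 + y1^+5*x2^+4*y2*x3^+2*y3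 + y1^+5*x2^+4*y2^+3*x3^+2*y3 - x1*x2*y2^+2*x3^+2*y3 - x1*x2^+2*y2*x3*y3^+2 - x1*x2^+2*y2^+3*x3^+3*y3^+2 - x1*x2^+3*y2^+2*x3^+2*y3^+3 - x1*y1^+2*x2*y2^+2*x3^+2*y3 - x1*y1^+2*x2*y2^+4*x3^+2*y3 - x1*y1^+2*x2^+2*y2*x3*y3^+2 - x1*y1^+2*x2^+2*y2^+3*x3 + x1*y1^+2*x2^+2*y2^+3*x3^+3 - x1*y1^+2*x2^+2*y2^+3*x3^+3*y3^+2 - x1*y1^+2*x2^+3*y2^+2*y3 + x1*y1^+2*x2^+3*y2^+2*y3^+3 - x1*y1^+2*x2^+3*y2^+2*x3^+2*y3^+3 - x1*y1^+2*x2^+3*y2^+4*x3^+2*y3 - x1*y1^+2*x2^+4*y2*x3*y3^+2 - x1*y1^+2*x2^+4*y2^+3*x3*y3^+2 - x1*y1^+4*x2*y2^+4*x3^+2*y3 - x1*y1^+4*x2^+2*y2^+3*x3 + x1*y1^+4*x2^+2*y2^+3*x3^+3 - x1*y1^+4*x2^+3*y2^+2*y3 + x1*y1^+4*x2^+3*y2^+2*y3^+3 - x1*y1^+4*x2^+3*y2^+4*x3^+2*y3 - x1*y1^+4*x2^+4*y2*x3*y3^+2 - x1*y1^+4*x2^+4*y2^+3*x3*y3^+2)) * (((x1 ^+ 2) + (y1 ^+ 2)) - (1 - ((x1 ^+ 2) * (y1 ^+ 2))))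
  + ((1 + (y3 ^+ 2)) ^+ 2 * (y1*y2*y3 - y1*y2*y3^+3 - y1*y2*x3^+2*y3 - y1*y2*x3^+2*y3^+3 + 2*y1*y2^+3*y3 - 2*y1*y2^+3*y3^+3 - 2*y1*y2^+3*x3^+2*y3 - 2*y1*y2^+3*x3^+2*y3^+3 + y1*y2^+5*y3 - y1*y2^+5*y3^+3 - y1*y2^+5*x3^+2*y3 - y1*y2^+5*x3^+2*y3^+3 + y1*x2*y2^+2*x3^+3*y3^+2 + 3*y1*x2*y2^+4*x3^+3*y3^+2 + 3*y1*x2*y2^+6*x3^+3*y3^+2 + y1*x2*y2^+8*x3^+3*y3^+2 - y1*x2^+2*y2*x3^+2*y3^+3 - 3*y1*x2^+2*y2^+3*x3^+2*y3^+3 - 3*y1*x2^+2*y2^+5*x3^+2*y3^+3 - y1*x2^+2*y2^+7*x3^+2*y3^+3 + y1^+3*y2^+3*y3 - y1^+3*y2^+3*y3^+3 - y1^+3*y2^+3*x3^+2*y3 - y1^+3*y2^+3*x3^+2*y3^+3 + 2*y1^+3*y2^+5*y3 - 2*y1^+3*y2^+5*y3^+3 - 2*y1^+3*y2^+5*x3^+2*y3 - 2*y1^+3*y2^+5*x3^+2*y3^+3 + y1^+3*y2^+7*y3 - y1^+3*y2^+7*y3^+3 - y1^+3*y2^+7*x3^+2*y3 - y1^+3*y2^+7*x3^+2*y3^+3 - y1^+3*x2*y2^+2*x3 + y1^+3*x2*y2^+2*x3^+3 + y1^+3*x2*y2^+2*x3^+3*y3^+2 - 2*y1^+3*x2*y2^+4*x3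 - y1^+3*x2*y2^+4*x3*y3^+2 + 2*y1^+3*x2*y2^+4*x3^+3 + 2*y1^+3*x2*y2^+4*x3^+3*y3^+2 - y1^+3*x2*y2^+6*x3 - 2*y1^+3*x2*y2^+6*x3*y3^+2 + y1^+3*x2*y2^+6*x3^+3 + y1^+3*x2*y2^+6*x3^+3*y3^+2 - y1^+3*x2*y2^+8*x3*y3^+2 + y1^+3*x2^+2*y2*x3^+2*y3 + 3*y1^+3*x2^+2*y2^+3*x3^+2*y3 + 3*y1^+3*x2^+2*y2^+5*x3^+2*y3 + y1^+3*x2^+2*y2^+7*x3^+2*y3 - y1^+5*y2*y3 + y1^+5*y2*y3^+3 + y1^+5*y2*x3^+2*y3 + y1^+5*y2*x3^+2*y3^+3 - 2*y1^+5*y2^+3*y3 + 2*y1^+5*y2^+3*y3^+3 + 2*y1^+5*y2^+3*x3^+2*y3 + 2*y1^+5*y2^+3*x3^+2*y3^+3 - y1^+5*y2^+5*y3 + y1^+5*y2^+5*y3^+3 + y1^+5*y2^+5*x3^+2*y3 + y1^+5*y2^+5*x3^+2*y3^+3 - y1^+5*x2*y2^+2*x3^+3*y3^+2 - 3*y1^+5*x2*y2^+4*x3^+3*y3^+2 - 3*y1^+5*x2*y2^+6*x3^+3*y3^+2 - y1^+5*x2*y2^+8*x3^+3*y3^+2 + y1^+5*x2^+2*y2*x3^+2*y3^+3 + 3*y1^+5*x2^+2*y2^+3*x3^+2*y3^+3 + 3*y1^+5*x2^+2*y2^+5*x3^+2*y3^+3 + y1^+5*x2^+2*y2^+7*x3^+2*y3^+3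 - y1^+7*y2^+3*y3 + y1^+7*y2^+3*y3^+3 + y1^+7*y2^+3*x3^+2*y3 + y1^+7*y2^+3*x3^+2*y3^+3 - 2*y1^+7*y2^+5*y3 + 2*y1^+7*y2^+5*y3^+3 + 2*y1^+7*y2^+5*x3^+2*y3 + 2*y1^+7*y2^+5*x3^+2*y3^+3 - y1^+7*y2^+7*y3 + y1^+7*y2^+7*y3^+3 + y1^+7*y2^+7*x3^+2*y3 + y1^+7*y2^+7*x3^+2*y3^+3 + y1^+7*x2*y2^+2*x3 - y1^+7*x2*y2^+2*x3^+3 - y1^+7*x2*y2^+2*x3^+3*y3^+2 + 2*y1^+7*x2*y2^+4*x3 + y1^+7*x2*y2^+4*x3*y3^+2 - 2*y1^+7*x2*y2^+4*x3^+3 - 2*y1^+7*x2*y2^+4*x3^+3*y3^+2 + y1^+7*x2*y2^+6*x3 + 2*y1^+7*x2*y2^+6*x3*y3^+2 - y1^+7*x2*y2^+6*x3^+3 - y1^+7*x2*y2^+6*x3^+3*y3^+2 + y1^+7*x2*y2^+8*x3*y3^+2 - y1^+7*x2^+2*y2*x3^+2*y3 - 3*y1^+7*x2^+2*y2^+3*x3^+2*y3 - 3*y1^+7*x2^+2*y2^+5*x3^+2*y3 - y1^+7*x2^+2*y2^+7*x3^+2*y3 - x1*y1^+2*y2*x3 + x1*y1^+2*y2*x3*y3^+2 + x1*y1^+2*y2*x3^+3 + x1*y1^+2*y2*x3^+3*y3^+2 - 3*x1*y1^+2*y2^+3*x3 + 3*x1*y1^+2*y2^+3*x3*y3^+2 +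 3*x1*y1^+2*y2^+3*x3^+3 + 3*x1*y1^+2*y2^+3*x3^+3*y3^+2 - 3*x1*y1^+2*y2^+5*x3 + 3*x1*y1^+2*y2^+5*x3*y3^+2 + 3*x1*y1^+2*y2^+5*x3^+3 + 3*x1*y1^+2*y2^+5*x3^+3*y3^+2 - x1*y1^+2*y2^+7*x3 + x1*y1^+2*y2^+7*x3*y3^+2 + x1*y1^+2*y2^+7*x3^+3 + x1*y1^+2*y2^+7*x3^+3*y3^+2 - x1*y1^+2*x2*y2^+2*y3 + x1*y1^+2*x2*y2^+2*y3^+3 + 2*x1*y1^+2*x2*y2^+2*x3^+2*y3^+3 - 2*x1*y1^+2*x2*y2^+4*y3 + 2*x1*y1^+2*x2*y2^+4*y3^+3 - x1*y1^+2*x2*y2^+4*x3^+2*y3 + 5*x1*y1^+2*x2*y2^+4*x3^+2*y3^+3 - x1*y1^+2*x2*y2^+6*y3 + x1*y1^+2*x2*y2^+6*y3^+3 - 2*x1*y1^+2*x2*y2^+6*x3^+2*y3 + 4*x1*y1^+2*x2*y2^+6*x3^+2*y3^+3 - x1*y1^+2*x2*y2^+8*x3^+2*y3 + x1*y1^+2*x2*y2^+8*x3^+2*y3^+3 - x1*y1^+2*x2^+2*y2*x3*y3^+2 + x1*y1^+2*x2^+2*y2*x3^+3*y3^+2 - 3*x1*y1^+2*x2^+2*y2^+3*x3*y3^+2 + 3*x1*y1^+2*x2^+2*y2^+3*x3^+3*y3^+2 - 3*x1*y1^+2*x2^+2*y2^+5*x3*y3^+2 + 3*x1*y1^+2*x2^+2*y2^+5*x3^+3*y3^+2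 - x1*y1^+2*x2^+2*y2^+7*x3*y3^+2 + x1*y1^+2*x2^+2*y2^+7*x3^+3*y3^+2 - 2*x1*y1^+4*y2*x3 + 2*x1*y1^+4*y2*x3*y3^+2 + 2*x1*y1^+4*y2*x3^+3 + 2*x1*y1^+4*y2*x3^+3*y3^+2 - 4*x1*y1^+4*y2^+3*x3 + 4*x1*y1^+4*y2^+3*x3*y3^+2 + 4*x1*y1^+4*y2^+3*x3^+3 + 4*x1*y1^+4*y2^+3*x3^+3*y3^+2 - 2*x1*y1^+4*y2^+5*x3 + 2*x1*y1^+4*y2^+5*x3*y3^+2 + 2*x1*y1^+4*y2^+5*x3^+3 + 2*x1*y1^+4*y2^+5*x3^+3*y3^+2 + 2*x1*y1^+4*x2*y2^+2*x3^+2*y3^+3 + 6*x1*y1^+4*x2*y2^+4*x3^+2*y3^+3 + 6*x1*y1^+4*x2*y2^+6*x3^+2*y3^+3 + 2*x1*y1^+4*x2*y2^+8*x3^+2*y3^+3 + 2*x1*y1^+4*x2^+2*y2*x3^+3*y3^+2 + 6*x1*y1^+4*x2^+2*y2^+3*x3^+3*y3^+2 + 6*x1*y1^+4*x2^+2*y2^+5*x3^+3*y3^+2 + 2*x1*y1^+4*x2^+2*y2^+7*x3^+3*y3^+2 - x1*y1^+6*y2*x3 + x1*y1^+6*y2*x3*y3^+2 + x1*y1^+6*y2*x3^+3 + x1*y1^+6*y2*x3^+3*y3^+2 - x1*y1^+6*y2^+3*x3 + x1*y1^+6*y2^+3*x3*y3^+2 + x1*y1^+6*y2^+3*x3^+3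 + x1*y1^+6*y2^+3*x3^+3*y3^+2 + x1*y1^+6*y2^+5*x3 - x1*y1^+6*y2^+5*x3*y3^+2 - x1*y1^+6*y2^+5*x3^+3 - x1*y1^+6*y2^+5*x3^+3*y3^+2 + x1*y1^+6*y2^+7*x3 - x1*y1^+6*y2^+7*x3*y3^+2 - x1*y1^+6*y2^+7*x3^+3 - x1*y1^+6*y2^+7*x3^+3*y3^+2 + x1*y1^+6*x2*y2^+2*y3 - x1*y1^+6*x2*y2^+2*y3^+3 + 2*x1*y1^+6*x2*y2^+4*y3 - 2*x1*y1^+6*x2*y2^+4*y3^+3 + x1*y1^+6*x2*y2^+4*x3^+2*y3 + x1*y1^+6*x2*y2^+4*x3^+2*y3^+3 + x1*y1^+6*x2*y2^+6*y3 - x1*y1^+6*x2*y2^+6*y3^+3 + 2*x1*y1^+6*x2*y2^+6*x3^+2*y3 + 2*x1*y1^+6*x2*y2^+6*x3^+2*y3^+3 + x1*y1^+6*x2*y2^+8*x3^+2*y3 + x1*y1^+6*x2*y2^+8*x3^+2*y3^+3 + x1*y1^+6*x2^+2*y2*x3*y3^+2 + x1*y1^+6*x2^+2*y2*x3^+3*y3^+2 + 3*x1*y1^+6*x2^+2*y2^+3*x3*y3^+2 + 3*x1*y1^+6*x2^+2*y2^+3*x3^+3*y3^+2 + 3*x1*y1^+6*x2^+2*y2^+5*x3*y3^+2 + 3*x1*y1^+6*x2^+2*y2^+5*x3^+3*y3^+2 + x1*y1^+6*x2^+2*y2^+7*x3*y3^+2 + x1*y1^+6*x2^+2*y2^+7*x3^+3*y3^+2))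 * (((x2 ^+ 2) + (y2 ^+ 2)) - (1 - ((x2 ^+ 2) * (y2 ^+ 2))))
  + ((- y1*y2*y3 - 2*y1*y2*y3^+3 - y1*y2*y3^+5 - y1*y2^+3*y3 - 2*y1*y2^+3*y3^+3 - y1*y2^+3*y3^+5 + y1*y2^+5*y3 + 2*y1*y2^+5*y3^+3 + y1*y2^+5*y3^+5 + y1*y2^+7*y3 + 2*y1*y2^+7*y3^+3 + y1*y2^+7*y3^+5 + y1*x2*y2^+2*x3 + 2*y1*x2*y2^+2*x3*y3^+2 + y1*x2*y2^+2*x3*y3^+4 + 3*y1*x2*y2^+4*x3 + 6*y1*x2*y2^+4*x3*y3^+2 + 3*y1*x2*y2^+4*x3*y3^+4 + 3*y1*x2*y2^+6*x3 + 6*y1*x2*y2^+6*x3*y3^+2 + 3*y1*x2*y2^+6*x3*y3^+4 + y1*x2*y2^+8*x3 + 2*y1*x2*y2^+8*x3*y3^+2 + y1*x2*y2^+8*x3*y3^+4 - y1^+3*y2^+3*y3 - 2*y1^+3*y2^+3*y3^+3 - y1^+3*y2^+3*y3^+5 - y1^+3*y2^+5*y3 - 2*y1^+3*y2^+5*y3^+3 - y1^+3*y2^+5*y3^+5 + y1^+3*y2^+7*y3 + 2*y1^+3*y2^+7*y3^+3 + y1^+3*y2^+7*y3^+5 + y1^+3*y2^+9*y3 + 2*y1^+3*y2^+9*y3^+3 + y1^+3*y2^+9*y3^+5 + y1^+3*x2*y2^+2*x3 + 2*y1^+3*x2*y2^+2*x3*y3^+2 + y1^+3*x2*y2^+2*x3*y3^+4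 + y1^+3*x2*y2^+4*x3 + 2*y1^+3*x2*y2^+4*x3*y3^+2 + y1^+3*x2*y2^+4*x3*y3^+4 - y1^+3*x2*y2^+6*x3 - 2*y1^+3*x2*y2^+6*x3*y3^+2 - y1^+3*x2*y2^+6*x3*y3^+4 - y1^+3*x2*y2^+8*x3 - 2*y1^+3*x2*y2^+8*x3*y3^+2 - y1^+3*x2*y2^+8*x3*y3^+4 + y1^+5*y2*y3 + 2*y1^+5*y2*y3^+3 + y1^+5*y2*y3^+5 + y1^+5*y2^+3*y3 + 2*y1^+5*y2^+3*y3^+3 + y1^+5*y2^+3*y3^+5 - y1^+5*y2^+5*y3 - 2*y1^+5*y2^+5*y3^+3 - y1^+5*y2^+5*y3^+5 - y1^+5*y2^+7*y3 - 2*y1^+5*y2^+7*y3^+3 - y1^+5*y2^+7*y3^+5 - y1^+5*x2*y2^+2*x3 - 2*y1^+5*x2*y2^+2*x3*y3^+2 - y1^+5*x2*y2^+2*x3*y3^+4 - 3*y1^+5*x2*y2^+4*x3 - 6*y1^+5*x2*y2^+4*x3*y3^+2 - 3*y1^+5*x2*y2^+4*x3*y3^+4 - 3*y1^+5*x2*y2^+6*x3 - 6*y1^+5*x2*y2^+6*x3*y3^+2 - 3*y1^+5*x2*y2^+6*x3*y3^+4 - y1^+5*x2*y2^+8*x3 - 2*y1^+5*x2*y2^+8*x3*y3^+2 - y1^+5*x2*y2^+8*x3*y3^+4 + y1^+7*y2^+3*y3 + 2*y1^+7*y2^+3*y3^+3 + y1^+7*y2^+3*y3^+5 + y1^+7*y2^+5*y3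 + 2*y1^+7*y2^+5*y3^+3 + y1^+7*y2^+5*y3^+5 - y1^+7*y2^+7*y3 - 2*y1^+7*y2^+7*y3^+3 - y1^+7*y2^+7*y3^+5 - y1^+7*y2^+9*y3 - 2*y1^+7*y2^+9*y3^+3 - y1^+7*y2^+9*y3^+5 - y1^+7*x2*y2^+2*x3 - 2*y1^+7*x2*y2^+2*x3*y3^+2 - y1^+7*x2*y2^+2*x3*y3^+4 - y1^+7*x2*y2^+4*x3 - 2*y1^+7*x2*y2^+4*x3*y3^+2 - y1^+7*x2*y2^+4*x3*y3^+4 + y1^+7*x2*y2^+6*x3 + 2*y1^+7*x2*y2^+6*x3*y3^+2 + y1^+7*x2*y2^+6*x3*y3^+4 + y1^+7*x2*y2^+8*x3 + 2*y1^+7*x2*y2^+8*x3*y3^+2 + y1^+7*x2*y2^+8*x3*y3^+4 + x1*y1^+2*y2*x3 + 2*x1*y1^+2*y2*x3*y3^+2 + x1*y1^+2*y2*x3*y3^+4 + 2*x1*y1^+2*y2^+3*x3 + 4*x1*y1^+2*y2^+3*x3*y3^+2 + 2*x1*y1^+2*y2^+3*x3*y3^+4 - 2*x1*y1^+2*y2^+7*x3 - 4*x1*y1^+2*y2^+7*x3*y3^+2 - 2*x1*y1^+2*y2^+7*x3*y3^+4 - x1*y1^+2*y2^+9*x3 - 2*x1*y1^+2*y2^+9*x3*y3^+2 - x1*y1^+2*y2^+9*x3*y3^+4 + 2*x1*y1^+2*x2*y2^+2*y3 + 4*x1*y1^+2*x2*y2^+2*y3^+3 + 2*x1*y1^+2*x2*y2^+2*y3^+5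 + 4*x1*y1^+2*x2*y2^+4*y3 + 8*x1*y1^+2*x2*y2^+4*y3^+3 + 4*x1*y1^+2*x2*y2^+4*y3^+5 + 2*x1*y1^+2*x2*y2^+6*y3 + 4*x1*y1^+2*x2*y2^+6*y3^+3 + 2*x1*y1^+2*x2*y2^+6*y3^+5 + 2*x1*y1^+4*y2*x3 + 4*x1*y1^+4*y2*x3*y3^+2 + 2*x1*y1^+4*y2*x3*y3^+4 + 2*x1*y1^+4*y2^+3*x3 + 4*x1*y1^+4*y2^+3*x3*y3^+2 + 2*x1*y1^+4*y2^+3*x3*y3^+4 - 2*x1*y1^+4*y2^+5*x3 - 4*x1*y1^+4*y2^+5*x3*y3^+2 - 2*x1*y1^+4*y2^+5*x3*y3^+4 - 2*x1*y1^+4*y2^+7*x3 - 4*x1*y1^+4*y2^+7*x3*y3^+2 - 2*x1*y1^+4*y2^+7*x3*y3^+4 + 2*x1*y1^+4*x2*y2^+2*y3 + 4*x1*y1^+4*x2*y2^+2*y3^+3 + 2*x1*y1^+4*x2*y2^+2*y3^+5 + 6*x1*y1^+4*x2*y2^+4*y3 + 12*x1*y1^+4*x2*y2^+4*y3^+3 + 6*x1*y1^+4*x2*y2^+4*y3^+5 + 6*x1*y1^+4*x2*y2^+6*y3 + 12*x1*y1^+4*x2*y2^+6*y3^+3 + 6*x1*y1^+4*x2*y2^+6*y3^+5 + 2*x1*y1^+4*x2*y2^+8*y3 + 4*x1*y1^+4*x2*y2^+8*y3^+3 + 2*x1*y1^+4*x2*y2^+8*y3^+5 + x1*y1^+6*y2*x3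 + 2*x1*y1^+6*y2*x3*y3^+2 + x1*y1^+6*y2*x3*y3^+4 - 2*x1*y1^+6*y2^+5*x3 - 4*x1*y1^+6*y2^+5*x3*y3^+2 - 2*x1*y1^+6*y2^+5*x3*y3^+4 + x1*y1^+6*y2^+9*x3 + 2*x1*y1^+6*y2^+9*x3*y3^+2 + x1*y1^+6*y2^+9*x3*y3^+4 + 2*x1*y1^+6*x2*y2^+4*y3 + 4*x1*y1^+6*x2*y2^+4*y3^+3 + 2*x1*y1^+6*x2*y2^+4*y3^+5 + 4*x1*y1^+6*x2*y2^+6*y3 + 8*x1*y1^+6*x2*y2^+6*y3^+3 + 4*x1*y1^+6*x2*y2^+6*y3^+5 + 2*x1*y1^+6*x2*y2^+8*y3 + 4*x1*y1^+6*x2*y2^+8*y3^+3 + 2*x1*y1^+6*x2*y2^+8*y3^+5)) * (((x3 ^+ 2) + (y3 ^+ 2)) - (1 - ((x3 ^+ 2) * (y3 ^+ 2)))).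
  by ring.
rewrite g0 g1 g2 g3 g4 g5 g6 g7 g8 !mulr0 ?addr0 in E.
have nM : ((1 + (((X12 * x3) * Y12) * y3)) ^+ 1 * (1 + (((x1 * X23) * y1) * Y23)) ^+ 1 * (1 - (((x1 * x2) * y1) * y2)) ^+ 1 * (1 + (((x1 * x2) * y1) * y2)) ^+ 1 * (1 - (((x2 * x3) * y2) * y3)) ^+ 1 * (1 + (((x2 * x3) * y2) * y3)) ^+ 1 * (1 + (y1 ^+ 2)) ^+ 2 * (1 + (y2 ^+ 2)) ^+ 3 * (1 + (y3 ^+ 2)) ^+ 2) != 0.
  by repeat match goal with |- is_true ((_ ^+ _) != 0) => apply: expf_neq0; assumption | |- is_true ((_ * _) != 0) => apply: mulf_neq0 | |- is_true (1 != 0) => exact: oner_neq0 end.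
by move/eqP: E; rewrite mulf_eq0 (negbTE nM) /= => /eqP.
Qed.


Lemma wclos_gen (F : fieldType) (x1 y1 x2 y2 a l x3 y3 : F) :
  y3 = ((l * (x1 - x3)) - y1) ->
  x3 = (((l ^+ 2) - x1) - x2) ->
  (l * (x2 - x1)) = (y2 - y1) ->
  (y1 ^+ 2) = ((x1 ^+ 3) + (a * x1)) ->
  (y2 ^+ 2) = ((x2 ^+ 3) + (a * x2)) ->
  (x2 - x1) != 0 ->
  (y3 ^+ 2) = ((x3 ^+ 3) + (a * x3)).
Proof.
move=> h0 h1 h2 h3 h4 n0.
have g0 : y3 - ((l * (x1 - x3)) - y1) = 0 by rewrite h0 subrr.
have g1 : x3 - (((l ^+ 2) - x1) - x2) = 0 by rewrite h1 subrr.
have g2 : (l * (x2 - x1)) - (y2 - y1) = 0 by rewrite h2 subrr.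
have g3 : (y1 ^+ 2) - ((x1 ^+ 3) + (a * x1)) = 0 by rewrite h3 subrr.
have g4 : (y2 ^+ 2) - ((x2 ^+ 3) + (a * x2)) = 0 by rewrite h4 subrr.
apply/eqP; rewrite -subr_eq0; apply/eqP.
have E : ((x2 - x1) ^+ 4) * ((y3 ^+ 2) - ((x3 ^+ 3) + (a * x3))) =
  ((x2 - x1) ^+ 4 * (y3 - l*x3 - y1 + x1*l)) * (y3 - ((l * (x1 - x3)) - y1))
  + ((x2 - x1) ^+ 4 * (- x3^+2 - a + x2*x3 + x2*l^+2 - x2^+2 + 2*y1*l + x1*x3 - x1*l^+2 - 2*x1*x2 - x1^+2)) * (x3 - (((l ^+ 2) - x1) - x2))
  + ((x2*y2^+3 - x2^+2*y2*a + x2^+2*y2^+2*l - x2^+3*a*l + x2^+3*y2*l^+2 + x2^+4*l^+3 - 2*x2^+4*y2 - 2*x2^+5*l - y1*x2*y2^+2 + y1*x2^+2*a + y1*x2^+3*l^+2 - y1^+2*x2*y2 - y1^+2*x2^+2*l + y1^+3*x2 - x1*y2^+3 + 2*x1*x2*y2*a - 2*x1*x2*y2^+2*l + 3*x1*x2^+2*a*l - 3*x1*x2^+2*y2*l^+2 - 4*x1*x2^+3*l^+3 + 2*x1*x2^+3*y2 + 4*x1*x2^+4*l + x1*y1*y2^+2 - 2*x1*y1*x2*a - 3*x1*y1*x2^+2*l^+2 + x1*y1^+2*y2 + 2*x1*y1^+2*x2*l - x1*y1^+3 - x1^+2*y2*a + x1^+2*y2^+2*l - 3*x1^+2*x2*a*l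 + 3*x1^+2*x2*y2*l^+2 + 6*x1^+2*x2^+2*l^+3 + 3*x1^+2*x2^+2*y2 + x1^+2*x2^+3*l + x1^+2*y1*a + 3*x1^+2*y1*x2*l^+2 + 3*x1^+2*y1*x2^+2 - x1^+2*y1^+2*l + x1^+3*a*l - x1^+3*y2*l^+2 - 4*x1^+3*x2*l^+3 - 4*x1^+3*x2*y2 - 7*x1^+3*x2^+2*l - x1^+3*y1*l^+2 - 6*x1^+3*y1*x2 + x1^+4*l^+3 + x1^+4*y2 + 5*x1^+4*x2*l + 3*x1^+4*y1 - x1^+5*l)) * ((l * (x2 - x1)) - (y2 - y1))
  + ((- x2^+2*a + x2^+4 + 2*y1*x2*y2 - y1^+2*x2 + x1*x2*a - 4*x1*x2^+3 - 2*x1*y1*y2 + x1*y1^+2 + 3*x1^+2*x2^+2 + x1^+3*x2 - x1^+4)) * ((y1 ^+ 2) - ((x1 ^+ 3) + (a * x1)))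
  + ((x2*y2^+2 - x2^+4 - 2*y1*x2*y2 - x1*y2^+2 + x1*x2*a + x1*x2^+3 + 2*x1*y1*y2 - x1^+2*a + 3*x1^+2*x2^+2 - 4*x1^+3*x2 + x1^+4)) * ((y2 ^+ 2) - ((x2 ^+ 3) + (a * x2))).
  by ring.
rewrite g0 g1 g2 g3 g4 !mulr0 ?addr0 in E.
have nM : ((x2 - x1) ^+ 4) != 0.
  by repeat match goal with |- is_true ((_ ^+ _) != 0) => apply: expf_neq0; assumption | |- is_true ((_ * _) != 0) => apply: mulf_neq0 | |- is_true (1 != 0) => exact: oner_neq0 end.
by move/eqP: E; rewrite mulf_eq0 (negbTE nM) /= => /eqP.
Qed.

Lemma wclos_dbl (F : fieldType) (x1 y1 a l x3 y3 : F) :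
  y3 = ((l * (x1 - x3)) - y1) ->
  x3 = (((l ^+ 2) - x1) - x1) ->
  (l * (2 * y1)) = ((3 * (x1 ^+ 2)) + a) ->
  (y1 ^+ 2) = ((x1 ^+ 3) + (a * x1)) ->
  (2 * y1) != 0 ->
  (y3 ^+ 2) = ((x3 ^+ 3) + (a * x3)).
Proof.
move=> h0 h1 h2 h3 n0.
have g0 : y3 - ((l * (x1 - x3)) - y1) = 0 by rewrite h0 subrr.
have g1 : x3 - (((l ^+ 2) - x1) - x1) = 0 by rewrite h1 subrr.
have g2 : (l * (2 * y1)) - ((3 * (x1 ^+ 2)) + a) = 0 by rewrite h2 subrr.
have g3 : (y1 ^+ 2) - ((x1 ^+ 3) + (a * x1)) = 0 by rewrite h3 subrr.
apply/eqP; rewrite -subr_eq0; apply/eqP.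
have E : ((2 * y1) ^+ 2) * ((y3 ^+ 2) - ((x3 ^+ 3) + (a * x3))) =
  ((2 * y1) ^+ 2 * (y3 - l*x3 - y1 + x1*l)) * (y3 - ((l * (x1 - x3)) - y1))
  + ((2 * y1) ^+ 2 * (- x3^+2 - a + 2*y1*l + 2*x1*x3 - 4*x1^+2)) * (x3 - (((l ^+ 2) - x1) - x1))
  + ((4*y1^+2*l^+2 - 12*x1*y1^+2)) * ((l * (2 * y1)) - ((3 * (x1 ^+ 2)) + a))
  + ((4*y1^+2)) * ((y1 ^+ 2) - ((x1 ^+ 3) + (a * x1))).
  by ring.
rewrite g0 g1 g2 g3 !mulr0 ?addr0 in E.
have nM : ((2 * y1) ^+ 2) != 0.
  by repeat match goal with |- is_true ((_ ^+ _) != 0) => apply: expf_neq0; assumption | |- is_true ((_ * _) != 0) => apply: mulf_neq0 | |- is_true (1 != 0) => exact: oner_neq0 end.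
by move/eqP: E; rewrite mulf_eq0 (negbTE nM) /= => /eqP.
Qed.

Lemma wdbl_sq (F : fieldType) (x1 y1 a l x3 y3 : F) :
  x3 = (((l ^+ 2) - x1) - x1) ->
  (l * (2 * y1)) = ((3 * (x1 ^+ 2)) + a) ->
  (y1 ^+ 2) = ((x1 ^+ 3) + (a * x1)) ->
  (2 * y1) != 0 ->
  (x3 * ((2 * y1) ^+ 2)) = (((x1 ^+ 2) - a) ^+ 2).
Proof.
move=> h0 h1 h2 n0.
have g0 : x3 - (((l ^+ 2) - x1) - x1) = 0 by rewrite h0 subrr.
have g1 : (l * (2 * y1)) - ((3 * (x1 ^+ 2)) + a) = 0 by rewrite h1 subrr.
have g2 : (y1 ^+ 2) - ((x1 ^+ 3) + (a * x1)) = 0 by rewrite h2 subrr.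
apply/eqP; rewrite -subr_eq0; apply/eqP.
have E : ((2 * y1) ^+ 2) * ((x3 * ((2 * y1) ^+ 2)) - (((x1 ^+ 2) - a) ^+ 2)) =
  ((2 * y1) ^+ 2 * (4*y1^+2)) * (x3 - (((l ^+ 2) - x1) - x1))
  + ((4*y1^+2*a + 8*y1^+3*l + 12*x1^+2*y1^+2)) * ((l * (2 * y1)) - ((3 * (x1 ^+ 2)) + a))
  + ((- 32*x1*y1^+2)) * ((y1 ^+ 2) - ((x1 ^+ 3) + (a * x1))).
  by ring.
rewrite g0 g1 g2 !mulr0 ?addr0 in E.
have nM : ((2 * y1) ^+ 2) != 0.
  by repeat match goal with |- is_true ((_ ^+ _) != 0) => apply: expf_neq0; assumption | |- is_true ((_ * _) != 0) => apply: mulf_neq0 | |- is_true (1 != 0) => exact: oner_neq0 end.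
by move/eqP: E; rewrite mulf_eq0 (negbTE nM) /= => /eqP.
Qed.

Lemma phi_on_cert (F : fieldType) (x y r w X Y : F) :
  (X * ((x ^+ 2) + (r ^+ 2))) = (w * y) ->
  (Y * (x + r)) = (x - r) ->
  (y ^+ 2) = ((x ^+ 3) + ((r ^+ 2) * x)) ->
  (w ^+ 2) = (2 * r) ->
  ((x ^+ 2) + (r ^+ 2)) != 0 ->
  (x + r) != 0 ->
  ((X ^+ 2) + (Y ^+ 2)) = (1 - ((X ^+ 2) * (Y ^+ 2))).
Proof.
move=> h0 h1 h2 h3 n0 n1.
have g0 : (X * ((x ^+ 2) + (r ^+ 2))) - (w * y) = 0 by rewrite h0 subrr.
have g1 : (Y * (x + r)) - (x - r) = 0 by rewrite h1 subrr.
have g2 : (y ^+ 2) - ((x ^+ 3) + ((r ^+ 2) * x)) = 0 by rewrite h2 subrr.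
have g3 : (w ^+ 2) - (2 * r) = 0 by rewrite h3 subrr.
apply/eqP; rewrite -subr_eq0; apply/eqP.
have E : (((x ^+ 2) + (r ^+ 2)) ^+ 2 * (x + r) ^+ 2) * (((X ^+ 2) + (Y ^+ 2)) - (1 - ((X ^+ 2) * (Y ^+ 2)))) =
  ((x + r) ^+ 2 * (r^+2*X + r^+2*X*Y^+2 + y*w + y*w*Y^+2 + x^+2*X + x^+2*X*Y^+2)) * ((X * ((x ^+ 2) + (r ^+ 2))) - (w * y))
  + ((- r^+5 + r^+5*Y - y^+2*r*w^+2 + y^+2*r*w^+2*Y + x*r^+4 + x*r^+4*Y + x*y^+2*w^+2 + x*y^+2*w^+2*Y - 2*x^+2*r^+3 + 2*x^+2*r^+3*Y + 2*x^+3*r^+2 + 2*x^+3*r^+2*Y - x^+4*r + x^+4*r*Y + x^+5 + x^+5*Y)) * ((Y * (x + r)) - (x - r))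
  + ((2*r^+2*w^+2 + 2*x^+2*w^+2)) * ((y ^+ 2) - ((x ^+ 3) + ((r ^+ 2) * x)))
  + ((2*x*r^+4 + 4*x^+3*r^+2 + 2*x^+5)) * ((w ^+ 2) - (2 * r)).
  by ring.
rewrite g0 g1 g2 g3 !mulr0 ?addr0 in E.
have nM : (((x ^+ 2) + (r ^+ 2)) ^+ 2 * (x + r) ^+ 2) != 0.
  by repeat match goal with |- is_true ((_ ^+ _) != 0) => apply: expf_neq0; assumption | |- is_true ((_ * _) != 0) => apply: mulf_neq0 | |- is_true (1 != 0) => exact: oner_neq0 end.
by move/eqP: E; rewrite mulf_eq0 (negbTE nM) /= => /eqP.
Qed.

Lemma phi_gen_X (F : fieldType) (x1 y1 x2 y2 r w l x3 y3 X1 Y1 X2 Y2 X3 Y3 EE : F) :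
  (EE * (1 - (((X1 * X2) * Y1) * Y2))) = ((X1 * Y2) + (Y1 * X2)) ->
  (X3 * ((x3 ^+ 2) + (r ^+ 2))) = (w * y3) ->
  y3 = ((l * (x1 - x3)) - y1) ->
  x3 = (((l ^+ 2) - x1) - x2) ->
  (X1 * ((x1 ^+ 2) + (r ^+ 2))) = (w * y1) ->
  (Y1 * (x1 + r)) = (x1 - r) ->
  (X2 * ((x2 ^+ 2) + (r ^+ 2))) = (w * y2) ->
  (Y2 * (x2 + r)) = (x2 - r) ->
  (l * (x2 - x1)) = (y2 - y1) ->
  (y1 ^+ 2) = ((x1 ^+ 3) + ((r ^+ 2) * x1)) ->
  (y2 ^+ 2) = ((x2 ^+ 3) + ((r ^+ 2) * x2)) ->
  (w ^+ 2) = (2 * r) ->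
  (1 - (((X1 * X2) * Y1) * Y2)) != 0 ->
  ((x3 ^+ 2) + (r ^+ 2)) != 0 ->
  ((x1 ^+ 2) + (r ^+ 2)) != 0 ->
  (x1 + r) != 0 ->
  ((x2 ^+ 2) + (r ^+ 2)) != 0 ->
  (x2 + r) != 0 ->
  (x2 - x1) != 0 ->
  EE = X3.
Proof.
move=> h0 h1 h2 h3 h4 h5 h6 h7 h8 h9 h10 h11 n0 n1 n2 n3 n4 n5 n6.
have g0 : (EE * (1 - (((X1 * X2) * Y1) * Y2))) - ((X1 * Y2) + (Y1 * X2)) = 0 by rewrite h0 subrr.
have g1 : (X3 * ((x3 ^+ 2) + (r ^+ 2))) - (w * y3) = 0 by rewrite h1 subrr.
have g2 : y3 - ((l * (x1 - x3)) - y1) = 0 by rewrite h2 subrr.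
have g3 : x3 - (((l ^+ 2) - x1) - x2) = 0 by rewrite h3 subrr.
have g4 : (X1 * ((x1 ^+ 2) + (r ^+ 2))) - (w * y1) = 0 by rewrite h4 subrr.
have g5 : (Y1 * (x1 + r)) - (x1 - r) = 0 by rewrite h5 subrr.
have g6 : (X2 * ((x2 ^+ 2) + (r ^+ 2))) - (w * y2) = 0 by rewrite h6 subrr.
have g7 : (Y2 * (x2 + r)) - (x2 - r) = 0 by rewrite h7 subrr.
have g8 : (l * (x2 - x1)) - (y2 - y1) = 0 by rewrite h8 subrr.
have g9 : (y1 ^+ 2) - ((x1 ^+ 3) + ((r ^+ 2) * x1)) = 0 by rewrite h9 subrr.
have g10 : (y2 ^+ 2) - ((x2 ^+ 3) + ((r ^+ 2) * x2)) = 0 by rewrite h10 subrr.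
have g11 : (w ^+ 2) - (2 * r) = 0 by rewrite h11 subrr.
apply/eqP; rewrite -subr_eq0; apply/eqP.
have E : ((1 - (((X1 * X2) * Y1) * Y2)) ^+ 1 * ((x3 ^+ 2) + (r ^+ 2)) ^+ 1 * ((x1 ^+ 2) + (r ^+ 2)) ^+ 1 * (x1 + r) ^+ 1 * ((x2 ^+ 2) + (r ^+ 2)) ^+ 1 * (x2 + r) ^+ 1 * (x2 - x1) ^+ 4) * (EE - X3) =
  (((x3 ^+ 2) + (r ^+ 2)) ^+ 1 * ((x1 ^+ 2) + (r ^+ 2)) ^+ 1 * (x1 + r) ^+ 1 * ((x2 ^+ 2) + (r ^+ 2)) ^+ 1 * (x2 + r) ^+ 1 * (x2 - x1) ^+ 4 * (1)) * ((EE * (1 - (((X1 * X2) * Y1) * Y2))) - ((X1 * Y2) + (Y1 * X2)))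
  + (((x1 ^+ 2) + (r ^+ 2)) ^+ 1 * (x1 + r) ^+ 1 * ((x2 ^+ 2) + (r ^+ 2)) ^+ 1 * (x2 + r) ^+ 1 * (x2 - x1) ^+ 4 * (- 1 + X1*Y1*X2*Y2)) * ((X3 * ((x3 ^+ 2) + (r ^+ 2))) - (w * y3))
  + (((x1 ^+ 2) + (r ^+ 2)) ^+ 1 * (x1 + r) ^+ 1 * ((x2 ^+ 2) + (r ^+ 2)) ^+ 1 * (x2 + r) ^+ 1 * (x2 - x1) ^+ 4 * (- w + w*X1*Y1*X2*Y2)) * (y3 - ((l * (x1 - x3)) - y1))
  + (((x1 ^+ 2) + (r ^+ 2)) ^+ 1 * (x1 + r) ^+ 1 * ((x2 ^+ 2) + (r ^+ 2)) ^+ 1 * (x2 + r) ^+ 1 * (x2 - x1) ^+ 4 * (x3*Y1*X2 + x3*X1*Y2 + l^+2*Y1*X2 + l^+2*X1*Y2 + w*l - w*l*X1*Y1*X2*Y2 - x2*Y1*X2 - x2*X1*Y2 - x1*Y1*X2 - x1*X1*Y2)) * (x3 - (((l ^+ 2) - x1) - x2))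
  + ((x1 + r) ^+ 1 * ((x2 ^+ 2) + (r ^+ 2)) ^+ 1 * (x2 + r) ^+ 1 * (x2 - x1) ^+ 4 * (l^+4*Y2 - w*l^+3*Y1*X2*Y2 + r^+2*Y2 - 2*x2*l^+2*Y2 + x2*w*l*Y1*X2*Y2 + x2^+2*Y2 - y1*w*Y1*X2*Y2 - 2*x1*l^+2*Y2 + 2*x1*w*l*Y1*X2*Y2 + 2*x1*x2*Y2 + x1^+2*Y2)) * ((X1 * ((x1 ^+ 2) + (r ^+ 2))) - (w * y1))
  + (((x2 ^+ 2) + (r ^+ 2)) ^+ 1 * (x2 + r) ^+ 1 * (x2 - x1) ^+ 4 * (r^+2*l^+4*X2 + r^+4*X2 - 2*x2*r^+2*l^+2*X2 + x2^+2*r^+2*X2 - y1*w^+2*l^+3*X2*Y2 + y1*x2*w^+2*l*X2*Y2 - y1^+2*w^+2*X2*Y2 - 2*x1*r^+2*l^+2*X2 + 2*x1*x2*r^+2*X2 + 2*x1*y1*w^+2*l*X2*Y2 + x1^+2*l^+4*X2 + 2*x1^+2*r^+2*X2 - 2*x1^+2*x2*l^+2*X2 + x1^+2*x2^+2*X2 - 2*x1^+3*l^+2*X2 + 2*x1^+3*x2*X2 + x1^+4*X2)) * ((Y1 * (x1 + r)) - (x1 - r))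
  + ((x2 + r) ^+ 1 * (x2 - x1) ^+ 4 * (- r^+3*l^+4 - r^+5 + 2*x2*r^+3*l^+2 - x2^+2*r^+3 + y1*r*w^+2*l^+3*Y2 - y1*x2*r*w^+2*l*Y2 + y1^+2*r*w^+2*Y2 + x1*r^+2*l^+4 + 2*x1*r^+3*l^+2 + x1*r^+4 - 2*x1*x2*r^+2*l^+2 - 2*x1*x2*r^+3 + x1*x2^+2*r^+2 - x1*y1*w^+2*l^+3*Y2 - 2*x1*y1*r*w^+2*l*Y2 + x1*y1*x2*w^+2*l*Y2 - x1*y1^+2*w^+2*Y2 - x1^+2*r*l^+4 - 2*x1^+2*r^+2*l^+2 - 2*x1^+2*r^+3 + 2*x1^+2*x2*r*l^+2 + 2*x1^+2*x2*r^+2 - x1^+2*x2^+2*r + 2*x1^+2*y1*w^+2*l*Y2 + x1^+3*l^+4 + 2*x1^+3*r*l^+2 + 2*x1^+3*r^+2 - 2*x1^+3*x2*l^+2 - 2*x1^+3*x2*r + x1^+3*x2^+2 - 2*x1^+4*l^+2 - x1^+4*r + 2*x1^+4*x2 + x1^+5)) * ((X2 * ((x2 ^+ 2) + (r ^+ 2))) - (w * y2))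
  + ((x2 - x1) ^+ 4 * (y1*r^+3*w*l^+4 + y1*r^+5*w + y1*y2*r*w^+3*l^+3 - 2*y1*x2*r^+3*w*l^+2 - y1*x2*y2*r*w^+3*l + y1*x2^+2*r*w*l^+4 + 2*y1*x2^+2*r^+3*w - 2*y1*x2^+3*r*w*l^+2 + y1*x2^+4*r*w + y1^+2*y2*r*w^+3 + x1*y1*r^+2*w*l^+4 - 2*x1*y1*r^+3*w*l^+2 + x1*y1*r^+4*w - x1*y1*y2*w^+3*l^+3 - 2*x1*y1*y2*r*w^+3*l - 2*x1*y1*x2*r^+2*w*l^+2 + 2*x1*y1*x2*r^+3*w + x1*y1*x2*y2*w^+3*l + x1*y1*x2^+2*w*l^+4 - 2*x1*y1*x2^+2*r*w*l^+2 + 2*x1*y1*x2^+2*r^+2*w - 2*x1*y1*x2^+3*w*l^+2 + 2*x1*y1*x2^+3*r*w + x1*y1*x2^+4*w - x1*y1^+2*y2*w^+3 - 2*x1^+2*y1*r^+2*w*l^+2 + x1^+2*y1*r^+3*w + 2*x1^+2*y1*y2*w^+3*l + 2*x1^+2*y1*x2*r^+2*w - 2*x1^+2*y1*x2^+2*w*l^+2 + x1^+2*y1*x2^+2*r*w + 2*x1^+2*y1*x2^+3*w + x1^+3*y1*r^+2*w + x1^+3*y1*x2^+2*w)) * ((Y2 * (x2 + r)) - (x2 - r))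
  + ((- y2^+4*r^+4*w + x2*y2^+2*r^+6*w - x2*y2^+3*r^+4*w*l - x2*y2^+4*r^+3*w + x2^+2*y2*r^+6*w*l - x2^+2*y2^+2*r^+4*w*l^+2 + x2^+2*y2^+2*r^+5*w - x2^+2*y2^+3*r^+3*w*l + x2^+3*r^+6*w*l^+2 - x2^+3*y2*r^+4*w*l^+3 + x2^+3*y2*r^+5*w*l - x2^+3*y2^+2*r^+3*w*l^+2 + 3*x2^+3*y2^+2*r^+4*w + x2^+4*r^+5*w*l^+2 - x2^+4*r^+6*w - x2^+4*y2*r^+3*w*l^+3 + 3*x2^+4*y2*r^+4*w*l + 3*x2^+4*y2^+2*r^+3*w + x2^+5*r^+4*w*l^+2 - x2^+5*r^+5*w + 3*x2^+5*y2*r^+3*w*l + x2^+6*r^+3*w*l^+2 - x2^+6*r^+4*w - x2^+7*r^+3*w + 2*y1*y2^+3*r^+4*w - 2*y1*x2*y2*r^+6*w + y1*x2*y2^+2*r^+4*w*l - y1*x2*y2^+3*r^+2*w^+3 + 4*y1*x2*y2^+3*r^+3*w - y1*x2^+2*r^+6*w*l - 2*y1*x2^+2*y2*r^+5*w - y1*x2^+2*y2^+2*r^+2*w^+3*l + 3*y1*x2^+2*y2^+2*r^+3*w*l + y1*x2^+2*y2^+3*r*w^+3 - y1*x2^+2*y2^+3*r^+2*w - y1*x2^+3*r^+4*w*l^+3 - y1*x2^+3*r^+5*w*l - y1*x2^+3*y2*r^+2*w^+3*l^+2 + 2*y1*x2^+3*y2*r^+3*w*l^+2 - 2*y1*x2^+3*y2*r^+4*w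 + y1*x2^+3*y2^+2*r*w^+3*l - y1*x2^+3*y2^+2*r^+2*w*l + y1*x2^+3*y2^+3*r*w + y1*x2^+4*r^+3*w*l^+3 + y1*x2^+4*r^+4*w*l + y1*x2^+4*y2*r*w^+3*l^+2 - y1*x2^+4*y2*r^+2*w*l^+2 + y1*x2^+4*y2*r^+2*w^+3 - 6*y1*x2^+4*y2*r^+3*w + y1*x2^+4*y2^+2*r*w*l - y1*x2^+5*r^+2*w*l^+3 - 3*y1*x2^+5*r^+3*w*l + y1*x2^+5*y2*r*w*l^+2 - y1*x2^+5*y2*r*w^+3 + 2*y1*x2^+5*y2*r^+2*w + y1*x2^+6*r*w*l^+3 + 2*y1*x2^+6*r^+2*w*l - 2*y1*x2^+6*y2*r*w - 2*y1*x2^+7*r*w*l + y1^+2*x2*r^+6*w + y1^+2*x2*y2*r^+4*w*l + 2*y1^+2*x2*y2^+2*r^+2*w^+3 - 6*y1^+2*x2*y2^+2*r^+3*w + y1^+2*x2^+2*r^+4*w*l^+2 + y1^+2*x2^+2*r^+5*w + y1^+2*x2^+2*y2*r^+2*w^+3*l - 3*y1^+2*x2^+2*y2*r^+3*w*l - 2*y1^+2*x2^+2*y2^+2*r*w^+3 + 3*y1^+2*x2^+2*y2^+2*r^+2*w - y1^+2*x2^+3*r^+3*w*l^+2 - y1^+2*x2^+3*r^+4*w - y1^+2*x2^+3*y2*r*w^+3*l + 2*y1^+2*x2^+3*y2*r^+2*w*l - 3*y1^+2*x2^+3*y2^+2*r*w + y1^+2*x2^+4*r^+2*w*l^+2 +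 3*y1^+2*x2^+4*r^+3*w - 2*y1^+2*x2^+4*y2*r*w*l - y1^+2*x2^+5*r*w*l^+2 - 2*y1^+2*x2^+5*r^+2*w + 2*y1^+2*x2^+6*r*w - 2*y1^+3*y2*r^+4*w - y1^+3*x2*r^+4*w*l - y1^+3*x2*y2*r^+2*w^+3 + 4*y1^+3*x2*y2*r^+3*w + y1^+3*x2^+2*r^+3*w*l + y1^+3*x2^+2*y2*r*w^+3 - 3*y1^+3*x2^+2*y2*r^+2*w - y1^+3*x2^+3*r^+2*w*l + 3*y1^+3*x2^+3*y2*r*w + y1^+3*x2^+4*r*w*l + y1^+4*r^+4*w - y1^+4*x2*r^+3*w + y1^+4*x2^+2*r^+2*w - y1^+4*x2^+3*r*w - x1*y2^+2*r^+6*w + x1*y2^+3*r^+4*w*l + x1*y2^+4*r^+3*w - 2*x1*x2*y2*r^+6*w*l + 2*x1*x2*y2^+2*r^+4*w*l^+2 + 2*x1*x2*y2^+3*r^+3*w*l + x1*x2*y2^+4*r^+2*w - 3*x1*x2^+2*r^+6*w*l^+2 + 3*x1*x2^+2*y2*r^+4*w*l^+3 - x1*x2^+2*y2*r^+5*w*l + 3*x1*x2^+2*y2^+2*r^+3*w*l^+2 - 2*x1*x2^+2*y2^+2*r^+4*w + x1*x2^+2*y2^+3*r^+2*w*l - 2*x1*x2^+3*r^+5*w*l^+2 + x1*x2^+3*r^+6*w + 4*x1*x2^+3*y2*r^+3*w*l^+3 - 5*x1*x2^+3*y2*r^+4*w*l + x1*x2^+3*y2^+2*r^+2*w*l^+2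 - 4*x1*x2^+3*y2^+2*r^+3*w - 2*x1*x2^+4*r^+4*w*l^+2 + x1*x2^+4*y2*r^+2*w*l^+3 - 7*x1*x2^+4*y2*r^+3*w*l - x1*x2^+4*y2^+2*r^+2*w - 2*x1*x2^+5*r^+3*w*l^+2 - x1*x2^+5*y2*r^+2*w*l + x1*x2^+6*r^+2*w*l^+2 - x1*x2^+7*r^+2*w + 2*x1*y1*y2*r^+6*w - x1*y1*y2^+2*r^+4*w*l + x1*y1*y2^+3*r^+2*w^+3 - 4*x1*y1*y2^+3*r^+3*w + 2*x1*y1*x2*r^+6*w*l + 2*x1*y1*x2*y2^+2*r^+2*w^+3*l - 6*x1*y1*x2*y2^+2*r^+3*w*l - 2*x1*y1*x2*y2^+3*r^+2*w + 3*x1*y1*x2^+2*r^+4*w*l^+3 + x1*y1*x2^+2*r^+5*w*l + 3*x1*y1*x2^+2*y2*r^+2*w^+3*l^+2 - 6*x1*y1*x2^+2*y2*r^+3*w*l^+2 - x1*y1*x2^+2*y2^+2*r*w^+3*l - x1*y1*x2^+2*y2^+3*w^+3 - x1*y1*x2^+2*y2^+3*r*w - 4*x1*y1*x2^+3*r^+3*w*l^+3 - 3*x1*y1*x2^+3*r^+4*w*l - 2*x1*y1*x2^+3*y2*r*w^+3*l^+2 + 2*x1*y1*x2^+3*y2*r^+2*w*l^+2 - x1*y1*x2^+3*y2*r^+2*w^+3 + 8*x1*y1*x2^+3*y2*r^+3*w - x1*y1*x2^+3*y2^+2*w^+3*l - 2*x1*y1*x2^+3*y2^+2*r*w*l + x1*y1*x2^+3*y2^+3*w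 + 4*x1*y1*x2^+4*r^+2*w*l^+3 + 7*x1*y1*x2^+4*r^+3*w*l - x1*y1*x2^+4*y2*w^+3*l^+2 - 3*x1*y1*x2^+4*y2*r*w*l^+2 - 4*x1*y1*x2^+4*y2*r^+2*w + x1*y1*x2^+4*y2^+2*w*l - 4*x1*y1*x2^+5*r*w*l^+3 - 7*x1*y1*x2^+5*r^+2*w*l + x1*y1*x2^+5*y2*w*l^+2 + x1*y1*x2^+5*y2*w^+3 + 4*x1*y1*x2^+5*y2*r*w + x1*y1*x2^+6*w*l^+3 + 6*x1*y1*x2^+6*r*w*l - 2*x1*y1*x2^+6*y2*w - 2*x1*y1*x2^+7*w*l - x1*y1^+2*r^+6*w - x1*y1^+2*y2*r^+4*w*l - 2*x1*y1^+2*y2^+2*r^+2*w^+3 + 6*x1*y1^+2*y2^+2*r^+3*w - 2*x1*y1^+2*x2*r^+4*w*l^+2 - 2*x1*y1^+2*x2*y2*r^+2*w^+3*l + 6*x1*y1^+2*x2*y2*r^+3*w*l + 3*x1*y1^+2*x2^+2*r^+3*w*l^+2 + 2*x1*y1^+2*x2^+2*r^+4*w + x1*y1^+2*x2^+2*y2*r*w^+3*l - 3*x1*y1^+2*x2^+2*y2*r^+2*w*l + 2*x1*y1^+2*x2^+2*y2^+2*w^+3 + 3*x1*y1^+2*x2^+2*y2^+2*r*w - 3*x1*y1^+2*x2^+3*r^+2*w*l^+2 - 4*x1*y1^+2*x2^+3*r^+3*w + x1*y1^+2*x2^+3*y2*w^+3*l + 4*x1*y1^+2*x2^+3*y2*r*w*l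 - 3*x1*y1^+2*x2^+3*y2^+2*w + 3*x1*y1^+2*x2^+4*r*w*l^+2 + 5*x1*y1^+2*x2^+4*r^+2*w - 2*x1*y1^+2*x2^+4*y2*w*l - x1*y1^+2*x2^+5*w*l^+2 - 4*x1*y1^+2*x2^+5*r*w + 2*x1*y1^+2*x2^+6*w + x1*y1^+3*r^+4*w*l + x1*y1^+3*y2*r^+2*w^+3 - 4*x1*y1^+3*y2*r^+3*w - 2*x1*y1^+3*x2*r^+3*w*l + 2*x1*y1^+3*x2*y2*r^+2*w + 2*x1*y1^+3*x2^+2*r^+2*w*l - x1*y1^+3*x2^+2*y2*w^+3 - 3*x1*y1^+3*x2^+2*y2*r*w - 2*x1*y1^+3*x2^+3*r*w*l + 3*x1*y1^+3*x2^+3*y2*w + x1*y1^+3*x2^+4*w*l + x1*y1^+4*r^+3*w - x1*y1^+4*x2*r^+2*w + x1*y1^+4*x2^+2*r*w - x1*y1^+4*x2^+3*w + x1^+2*y2*r^+6*w*l - x1^+2*y2^+2*r^+4*w*l^+2 - x1^+2*y2^+2*r^+5*w - x1^+2*y2^+3*r^+3*w*l - x1^+2*y2^+4*r^+2*w + 3*x1^+2*x2*r^+6*w*l^+2 - 3*x1^+2*x2*y2*r^+4*w*l^+3 - x1^+2*x2*y2*r^+5*w*l - 3*x1^+2*x2*y2^+2*r^+3*w*l^+2 - 2*x1^+2*x2*y2^+2*r^+4*w - 2*x1^+2*x2*y2^+3*r^+2*w*l - x1^+2*x2*y2^+4*r*w + 3*x1^+2*x2^+2*r^+6*w - 6*x1^+2*x2^+2*y2*r^+3*w*l^+3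 - 3*x1^+2*x2^+2*y2^+2*r^+2*w*l^+2 - x1^+2*x2^+2*y2^+3*r*w*l + x1^+2*x2^+3*r^+4*w*l^+2 + 4*x1^+2*x2^+3*r^+5*w - 4*x1^+2*x2^+3*y2*r^+2*w*l^+3 + 4*x1^+2*x2^+3*y2*r^+3*w*l - x1^+2*x2^+3*y2^+2*r*w*l^+2 + 4*x1^+2*x2^+3*y2^+2*r^+2*w + x1^+2*x2^+4*r^+3*w*l^+2 + 3*x1^+2*x2^+4*r^+4*w - x1^+2*x2^+4*y2*r*w*l^+3 + 5*x1^+2*x2^+4*y2*r^+2*w*l + 3*x1^+2*x2^+4*y2^+2*r*w - 2*x1^+2*x2^+5*r^+2*w*l^+2 + 3*x1^+2*x2^+5*r^+3*w + 3*x1^+2*x2^+5*y2*r*w*l + x1^+2*x2^+6*r*w*l^+2 - x1^+2*x2^+7*r*w - x1^+2*y1*r^+6*w*l + 2*x1^+2*y1*y2*r^+5*w - x1^+2*y1*y2^+2*r^+2*w^+3*l + 3*x1^+2*y1*y2^+2*r^+3*w*l - x1^+2*y1*y2^+3*r*w^+3 + 3*x1^+2*y1*y2^+3*r^+2*w - 3*x1^+2*y1*x2*r^+4*w*l^+3 + x1^+2*y1*x2*r^+5*w*l - 3*x1^+2*y1*x2*y2*r^+2*w^+3*l^+2 + 6*x1^+2*y1*x2*y2*r^+3*w*l^+2 - x1^+2*y1*x2*y2^+2*r*w^+3*l + 3*x1^+2*y1*x2*y2^+2*r^+2*w*l + x1^+2*y1*x2*y2^+3*w^+3 + 3*x1^+2*y1*x2*y2^+3*r*w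 + 6*x1^+2*y1*x2^+2*r^+3*w*l^+3 - 3*x1^+2*y1*x2^+2*y2*r^+2*w^+3 + 2*x1^+2*y1*x2^+2*y2^+2*w^+3*l + 3*x1^+2*y1*x2^+2*y2^+2*r*w*l - 6*x1^+2*y1*x2^+3*r^+2*w*l^+3 - 4*x1^+2*y1*x2^+3*r^+3*w*l + 3*x1^+2*y1*x2^+3*y2*w^+3*l^+2 + 4*x1^+2*y1*x2^+3*y2*r*w*l^+2 + 4*x1^+2*y1*x2^+3*y2*r*w^+3 - 4*x1^+2*y1*x2^+3*y2*r^+2*w - x1^+2*y1*x2^+3*y2^+2*w*l + 6*x1^+2*y1*x2^+4*r*w*l^+3 + 5*x1^+2*y1*x2^+4*r^+2*w*l - 2*x1^+2*y1*x2^+4*y2*w*l^+2 - x1^+2*y1*x2^+4*y2*w^+3 - 4*x1^+2*y1*x2^+4*y2*r*w - 3*x1^+2*y1*x2^+5*w*l^+3 - 5*x1^+2*y1*x2^+5*r*w*l + 2*x1^+2*y1*x2^+5*y2*w + 4*x1^+2*y1*x2^+6*w*l + x1^+2*y1^+2*r^+4*w*l^+2 - x1^+2*y1^+2*r^+5*w + x1^+2*y1^+2*y2*r^+2*w^+3*l - 3*x1^+2*y1^+2*y2*r^+3*w*l + 2*x1^+2*y1^+2*y2^+2*r*w^+3 - 3*x1^+2*y1^+2*y2^+2*r^+2*w - 3*x1^+2*y1^+2*x2*r^+3*w*l^+2 + 2*x1^+2*y1^+2*x2*r^+4*w + x1^+2*y1^+2*x2*y2*r*w^+3*l - 2*x1^+2*y1^+2*x2*y2^+2*w^+3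 - 3*x1^+2*y1^+2*x2*y2^+2*r*w + 3*x1^+2*y1^+2*x2^+2*r^+2*w*l^+2 - 2*x1^+2*y1^+2*x2^+2*y2*w^+3*l - 3*x1^+2*y1^+2*x2^+2*y2*r*w*l - 3*x1^+2*y1^+2*x2^+3*r*w*l^+2 + 2*x1^+2*y1^+2*x2^+3*y2*w*l + 2*x1^+2*y1^+2*x2^+4*w*l^+2 + x1^+2*y1^+2*x2^+4*r*w - 2*x1^+2*y1^+2*x2^+5*w + x1^+2*y1^+3*r^+3*w*l - x1^+2*y1^+3*y2*r*w^+3 + x1^+2*y1^+3*y2*r^+2*w - x1^+2*y1^+3*x2*r^+2*w*l + x1^+2*y1^+3*x2*y2*w^+3 + x1^+2*y1^+3*x2*y2*r*w + x1^+2*y1^+3*x2^+2*r*w*l - x1^+2*y1^+3*x2^+3*w*l - x1^+3*r^+6*w*l^+2 + x1^+3*y2*r^+4*w*l^+3 + x1^+3*y2*r^+5*w*l + x1^+3*y2^+2*r^+3*w*l^+2 + x1^+3*y2^+2*r^+4*w + x1^+3*y2^+3*r^+2*w*l + x1^+3*y2^+4*r*w + 2*x1^+3*x2*r^+5*w*l^+2 - 5*x1^+3*x2*r^+6*w + 4*x1^+3*x2*y2*r^+3*w*l^+3 + 3*x1^+3*x2*y2*r^+4*w*l + 3*x1^+3*x2*y2^+2*r^+2*w*l^+2 + 4*x1^+3*x2*y2^+2*r^+3*w + 2*x1^+3*x2*y2^+3*r*w*l + x1^+3*x2*y2^+4*w - x1^+3*x2^+2*r^+4*w*l^+2 - 2*x1^+3*x2^+2*r^+5*w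 + 6*x1^+3*x2^+2*y2*r^+2*w*l^+3 + 4*x1^+3*x2^+2*y2*r^+3*w*l + 3*x1^+3*x2^+2*y2^+2*r*w*l^+2 + x1^+3*x2^+2*y2^+3*w*l - x1^+3*x2^+3*r^+4*w + 4*x1^+3*x2^+3*y2*r*w*l^+3 - 4*x1^+3*x2^+3*y2*r^+2*w*l + x1^+3*x2^+3*y2^+2*w*l^+2 - 4*x1^+3*x2^+3*y2^+2*r*w + x1^+3*x2^+4*r^+2*w*l^+2 - 2*x1^+3*x2^+4*r^+3*w + x1^+3*x2^+4*y2*w*l^+3 - 7*x1^+3*x2^+4*y2*r*w*l - x1^+3*x2^+4*y2^+2*w - 2*x1^+3*x2^+5*r*w*l^+2 + 3*x1^+3*x2^+5*r^+2*w - x1^+3*x2^+5*y2*w*l + x1^+3*x2^+6*w*l^+2 - x1^+3*x2^+7*w + x1^+3*y1*r^+4*w*l^+3 - x1^+3*y1*r^+5*w*l + x1^+3*y1*y2*r^+2*w^+3*l^+2 - 2*x1^+3*y1*y2*r^+3*w*l^+2 + 2*x1^+3*y1*y2*r^+4*w + x1^+3*y1*y2^+2*r*w^+3*l - 2*x1^+3*y1*y2^+2*r^+2*w*l - 3*x1^+3*y1*y2^+3*r*w - 4*x1^+3*y1*x2*r^+3*w*l^+3 + 5*x1^+3*y1*x2*r^+4*w*l + 2*x1^+3*y1*x2*y2*r*w^+3*l^+2 - 2*x1^+3*y1*x2*y2*r^+2*w*l^+2 + 5*x1^+3*y1*x2*y2*r^+2*w^+3 - 8*x1^+3*y1*x2*y2*r^+3*w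 - x1^+3*y1*x2*y2^+2*w^+3*l - 4*x1^+3*y1*x2*y2^+2*r*w*l - 3*x1^+3*y1*x2*y2^+3*w + 4*x1^+3*y1*x2^+2*r^+2*w*l^+3 - 4*x1^+3*y1*x2^+2*r^+3*w*l - 3*x1^+3*y1*x2^+2*y2*w^+3*l^+2 - 4*x1^+3*y1*x2^+2*y2*r*w*l^+2 - 2*x1^+3*y1*x2^+2*y2*r*w^+3 + 4*x1^+3*y1*x2^+2*y2*r^+2*w - 2*x1^+3*y1*x2^+2*y2^+2*w*l - 4*x1^+3*y1*x2^+3*r*w*l^+3 + 4*x1^+3*y1*x2^+3*r^+2*w*l - 3*x1^+3*y1*x2^+3*y2*w^+3 + 3*x1^+3*y1*x2^+4*w*l^+3 - 3*x1^+3*y1*x2^+4*r*w*l + 2*x1^+3*y1*x2^+4*y2*w - x1^+3*y1*x2^+5*w*l + x1^+3*y1^+2*r^+3*w*l^+2 - 3*x1^+3*y1^+2*r^+4*w - x1^+3*y1^+2*y2*r*w^+3*l + x1^+3*y1^+2*y2*r^+2*w*l + 3*x1^+3*y1^+2*y2^+2*r*w - x1^+3*y1^+2*x2*r^+2*w*l^+2 + 4*x1^+3*y1^+2*x2*r^+3*w + x1^+3*y1^+2*x2*y2*w^+3*l + 2*x1^+3*y1^+2*x2*y2*r*w*l + 3*x1^+3*y1^+2*x2*y2^+2*w + x1^+3*y1^+2*x2^+2*r*w*l^+2 - 4*x1^+3*y1^+2*x2^+2*r^+2*w + x1^+3*y1^+2*x2^+2*y2*w*l - x1^+3*y1^+2*x2^+3*w*l^+2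 + 4*x1^+3*y1^+2*x2^+3*r*w - x1^+3*y1^+2*x2^+4*w - x1^+3*y1^+3*y2*r*w - x1^+3*y1^+3*x2*y2*w - x1^+4*r^+5*w*l^+2 + 2*x1^+4*r^+6*w - x1^+4*y2*r^+3*w*l^+3 - x1^+4*y2*r^+4*w*l - x1^+4*y2^+2*r^+2*w*l^+2 - 3*x1^+4*y2^+2*r^+3*w - x1^+4*y2^+3*r*w*l + 2*x1^+4*x2*r^+4*w*l^+2 - 3*x1^+4*x2*r^+5*w - 4*x1^+4*x2*y2*r^+2*w*l^+3 - 7*x1^+4*x2*y2*r^+3*w*l - 3*x1^+4*x2*y2^+2*r*w*l^+2 - 5*x1^+4*x2*y2^+2*r^+2*w - x1^+4*x2*y2^+3*w*l - x1^+4*x2^+2*r^+3*w*l^+2 - 6*x1^+4*x2^+2*y2*r*w*l^+3 - 5*x1^+4*x2^+2*y2*r^+2*w*l - 2*x1^+4*x2^+2*y2^+2*w*l^+2 - x1^+4*x2^+2*y2^+2*r*w - x1^+4*x2^+3*r^+2*w*l^+2 + x1^+4*x2^+3*r^+3*w - 3*x1^+4*x2^+3*y2*w*l^+3 + 3*x1^+4*x2^+3*y2*r*w*l + x1^+4*x2^+3*y2^+2*w - x1^+4*x2^+4*r^+2*w + 2*x1^+4*x2^+4*y2*w*l - 3*x1^+4*x2^+5*w*l^+2 + 4*x1^+4*x2^+5*r*w + x1^+4*x2^+6*w + x1^+4*y1*r^+3*w*l^+3 - 3*x1^+4*y1*r^+4*w*l - x1^+4*y1*y2*r*w^+3*l^+2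 + x1^+4*y1*y2*r^+2*w*l^+2 - 2*x1^+4*y1*y2*r^+2*w^+3 + 6*x1^+4*y1*y2*r^+3*w + 2*x1^+4*y1*y2^+2*r*w*l - x1^+4*y1*x2*r^+2*w*l^+3 + 7*x1^+4*y1*x2*r^+3*w*l + x1^+4*y1*x2*y2*w^+3*l^+2 + 3*x1^+4*y1*x2*y2*r*w*l^+2 - 3*x1^+4*y1*x2*y2*r*w^+3 + 4*x1^+4*y1*x2*y2*r^+2*w + 2*x1^+4*y1*x2*y2^+2*w*l + x1^+4*y1*x2^+2*r*w*l^+3 - 5*x1^+4*y1*x2^+2*r^+2*w*l + 2*x1^+4*y1*x2^+2*y2*w*l^+2 + 5*x1^+4*y1*x2^+2*y2*w^+3 + 4*x1^+4*y1*x2^+2*y2*r*w - x1^+4*y1*x2^+3*w*l^+3 + 7*x1^+4*y1*x2^+3*r*w*l - 2*x1^+4*y1*x2^+3*y2*w - 2*x1^+4*y1*x2^+4*w*l - 3*x1^+4*y1^+2*r^+3*w - x1^+4*y1^+2*y2*r*w*l + x1^+4*y1^+2*x2*r^+2*w - x1^+4*y1^+2*x2*y2*w*l - 3*x1^+4*y1^+2*x2^+2*r*w + x1^+4*y1^+2*x2^+3*w - x1^+5*r^+4*w*l^+2 + 2*x1^+5*r^+5*w + x1^+5*y2*r^+2*w*l^+3 + 3*x1^+5*y2*r^+3*w*l + x1^+5*y2^+2*r*w*l^+2 + 2*x1^+5*y2^+2*r^+2*w + 2*x1^+5*x2*r^+3*w*l^+2 - 3*x1^+5*x2*r^+4*w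 + 4*x1^+5*x2*y2*r*w*l^+3 + 7*x1^+5*x2*y2*r^+2*w*l + x1^+5*x2*y2^+2*w*l^+2 + 4*x1^+5*x2*y2^+2*r*w + 2*x1^+5*x2^+2*r^+2*w*l^+2 + 3*x1^+5*x2^+2*y2*w*l^+3 + 5*x1^+5*x2^+2*y2*r*w*l + 2*x1^+5*x2^+2*y2^+2*w + 2*x1^+5*x2^+3*r*w*l^+2 + x1^+5*x2^+3*y2*w*l + 3*x1^+5*x2^+4*w*l^+2 - 2*x1^+5*x2^+4*r*w + 3*x1^+5*x2^+5*w - 3*x1^+5*y1*r^+3*w*l - x1^+5*y1*y2*r*w*l^+2 + 2*x1^+5*y1*y2*r*w^+3 - 2*x1^+5*y1*y2*r^+2*w + x1^+5*y1*x2*r^+2*w*l - x1^+5*y1*x2*y2*w*l^+2 - 2*x1^+5*y1*x2*y2*w^+3 - 4*x1^+5*y1*x2*y2*r*w - 3*x1^+5*y1*x2^+2*r*w*l - 2*x1^+5*y1*x2^+2*y2*w + x1^+5*y1*x2^+3*w*l - x1^+6*r^+3*w*l^+2 + 2*x1^+6*r^+4*w - x1^+6*y2*r*w*l^+3 - 2*x1^+6*y2*r^+2*w*l - 2*x1^+6*y2^+2*r*w - x1^+6*x2*r^+2*w*l^+2 - 3*x1^+6*x2*r^+3*w - x1^+6*x2*y2*w*l^+3 - 6*x1^+6*x2*y2*r*w*l - 2*x1^+6*x2*y2^+2*w - x1^+6*x2^+2*r*w*l^+2 - 3*x1^+6*x2^+2*r^+2*w - 4*x1^+6*x2^+2*y2*w*l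 - x1^+6*x2^+3*w*l^+2 - 3*x1^+6*x2^+3*r*w - 5*x1^+6*x2^+4*w + 2*x1^+6*y1*y2*r*w + 2*x1^+6*y1*x2*y2*w + 2*x1^+7*r^+3*w + 2*x1^+7*y2*r*w*l + 2*x1^+7*x2*r^+2*w + 2*x1^+7*x2*y2*w*l + 2*x1^+7*x2^+2*r*w + 2*x1^+7*x2^+3*w)) * ((l * (x2 - x1)) - (y2 - y1))
  + ((- 2*y2^+3*r^+4*w + 3*x2*y2*r^+6*w + 3*x2*y2^+3*r^+2*w^+3 - 10*x2*y2^+3*r^+3*w + 3*x2^+2*y2*r^+5*w - 3*x2^+2*y2^+3*r*w^+3 + 4*x2^+2*y2^+3*r^+2*w + x2^+3*y2*r^+4*w - 4*x2^+3*y2^+3*r*w - 2*x2^+4*y2*r^+2*w^+3 + 9*x2^+4*y2*r^+3*w + 2*x2^+5*y2*r*w^+3 - 4*x2^+5*y2*r^+2*w + 4*x2^+6*y2*r*w - 2*y1*y2^+2*r^+4*w - y1*x2*r^+6*w - 3*y1*x2*y2^+2*r^+2*w^+3 + 10*y1*x2*y2^+2*r^+3*w - y1*x2^+2*r^+5*w + 3*y1*x2^+2*y2^+2*r*w^+3 - 6*y1*x2^+2*y2^+2*r^+2*w + y1*x2^+3*r^+4*w + 6*y1*x2^+3*y2^+2*r*w - 3*y1*x2^+4*r^+3*w + 2*y1*x2^+5*r^+2*w - 2*y1*x2^+6*r*w + 3*y1^+2*y2*r^+4*w + y1^+2*x2*y2*r^+2*w^+3 - 5*y1^+2*x2*y2*r^+3*w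 - y1^+2*x2^+2*y2*r*w^+3 + 4*y1^+2*x2^+2*y2*r^+2*w - 4*y1^+2*x2^+3*y2*r*w - y1^+3*r^+4*w + y1^+3*x2*r^+3*w - y1^+3*x2^+2*r^+2*w + y1^+3*x2^+3*r*w - 3*x1*y2^+3*r^+2*w^+3 + 10*x1*y2^+3*r^+3*w + x1*x2*y2*r^+4*w^+3 - 5*x1*x2*y2*r^+5*w + 2*x1*x2*y2^+3*r^+2*w - x1*x2^+2*y2*r^+3*w^+3 + 6*x1*x2^+2*y2*r^+4*w + 3*x1*x2^+2*y2^+3*w^+3 + 4*x1*x2^+2*y2^+3*r*w + 5*x1*x2^+3*y2*r^+2*w^+3 - 16*x1*x2^+3*y2*r^+3*w - 4*x1*x2^+3*y2^+3*w - 3*x1*x2^+4*y2*r*w^+3 + 9*x1*x2^+4*y2*r^+2*w - 2*x1*x2^+5*y2*w^+3 - 8*x1*x2^+5*y2*r*w + 4*x1*x2^+6*y2*w + 3*x1*y1*y2^+2*r^+2*w^+3 - 10*x1*y1*y2^+2*r^+3*w + x1*y1*x2*r^+5*w + 2*x1*y1*x2*y2^+2*r^+2*w - 3*x1*y1*x2^+2*r^+4*w - 3*x1*y1*x2^+2*y2^+2*w^+3 - 6*x1*y1*x2^+2*y2^+2*r*w + 5*x1*y1*x2^+3*r^+3*w + 6*x1*y1*x2^+3*y2^+2*w - 5*x1*y1*x2^+4*r^+2*w + 4*x1*y1*x2^+5*r*w - 2*x1*y1*x2^+6*w - x1*y1^+2*y2*r^+2*w^+3 + 5*x1*y1^+2*y2*r^+3*w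 - 3*x1*y1^+2*x2*y2*r^+2*w + x1*y1^+2*x2^+2*y2*w^+3 + 4*x1*y1^+2*x2^+2*y2*r*w - 4*x1*y1^+2*x2^+3*y2*w - x1*y1^+3*r^+3*w + x1*y1^+3*x2*r^+2*w - x1*y1^+3*x2^+2*r*w + x1*y1^+3*x2^+3*w - x1^+2*y2*r^+4*w^+3 + 2*x1^+2*y2*r^+5*w + 3*x1^+2*y2^+3*r*w^+3 - 6*x1^+2*y2^+3*r^+2*w - x1^+2*x2*y2*r^+4*w - 3*x1^+2*x2*y2^+3*w^+3 - 6*x1^+2*x2*y2^+3*r*w - 2*x1^+2*x2^+2*y2*r^+2*w^+3 + 4*x1^+2*x2^+2*y2*r^+3*w - 2*x1^+2*x2^+3*y2*r*w^+3 + 5*x1^+2*x2^+4*y2*w^+3 + 5*x1^+2*x2^+4*y2*r*w - 4*x1^+2*x2^+5*y2*w - 3*x1^+2*y1*y2^+2*r*w^+3 + 4*x1^+2*y1*y2^+2*r^+2*w - x1^+2*y1*x2*r^+4*w + 3*x1^+2*y1*x2*y2^+2*w^+3 + 4*x1^+2*y1*x2*y2^+2*r*w - x1^+2*y1*x2^+2*r^+3*w + x1^+2*y1*x2^+3*r^+2*w - x1^+2*y1*x2^+4*r*w + 2*x1^+2*y1*x2^+5*w + x1^+2*y1^+2*y2*r*w^+3 - x1^+2*y1^+2*y2*r^+2*w - x1^+2*y1^+2*x2*y2*w^+3 - x1^+2*y1^+2*x2*y2*r*w + x1^+3*y2*r^+3*w^+3 - 3*x1^+3*y2*r^+4*w +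 6*x1^+3*y2^+3*r*w - x1^+3*x2*y2*r^+2*w^+3 + 6*x1^+3*x2*y2*r^+3*w + 6*x1^+3*x2*y2^+3*w + 3*x1^+3*x2^+2*y2*r*w^+3 - 4*x1^+3*x2^+2*y2*r^+2*w - 3*x1^+3*x2^+3*y2*w^+3 - 3*x1^+3*x2^+4*y2*w + 2*x1^+3*y1*r^+4*w - 4*x1^+3*y1*y2^+2*r*w - 3*x1^+3*y1*x2*r^+3*w - 4*x1^+3*y1*x2*y2^+2*w + 3*x1^+3*y1*x2^+2*r^+2*w - 3*x1^+3*y1*x2^+3*r*w + x1^+3*y1*x2^+4*w + x1^+3*y1^+2*y2*r*w + x1^+3*y1^+2*x2*y2*w - 3*x1^+4*y2*r^+3*w - 5*x1^+4*x2*y2*r^+2*w - 3*x1^+4*x2^+2*y2*r*w - x1^+4*x2^+3*y2*w + 2*x1^+4*y1*r^+3*w + 2*x1^+4*y1*x2^+2*r*w + x1^+5*y2*r^+2*w + 3*x1^+5*x2*y2*r*w + 2*x1^+5*x2^+2*y2*w - x1^+6*y2*r*w - x1^+6*x2*y2*w)) * ((y1 ^+ 2) - ((x1 ^+ 3) + ((r ^+ 2) * x1)))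
  + ((- y2^+3*r^+4*w - x2*y2^+3*r^+3*w + 2*x2^+3*y2*r^+4*w + 2*x2^+4*y2*r^+3*w + 3*y1*y2^+2*r^+4*w - y1*x2*y2^+2*r^+2*w^+3 + 5*y1*x2*y2^+2*r^+3*w - y1*x2^+2*r^+4*w^+3 + 2*y1*x2^+2*r^+5*w + y1*x2^+2*y2^+2*r*w^+3 - y1*x2^+2*y2^+2*r^+2*w + y1*x2^+3*r^+3*w^+3 - 3*y1*x2^+3*r^+4*w + y1*x2^+3*y2^+2*r*w - 3*y1*x2^+4*r^+3*w + y1*x2^+5*r^+2*w - y1*x2^+6*r*w - 3*x1*y2*r^+6*w + x1*y2^+3*r^+3*w + 3*x1*x2*y2*r^+4*w^+3 - 9*x1*x2*y2*r^+5*w + x1*x2*y2^+3*r^+2*w - 3*x1*x2^+2*y2*r^+3*w^+3 + 3*x1*x2^+2*y2*r^+4*w - 7*x1*x2^+3*y2*r^+3*w + x1*y1*r^+6*w + x1*y1*y2^+2*r^+2*w^+3 - 5*x1*y1*y2^+2*r^+3*w - 2*x1*y1*x2*r^+4*w^+3 + 5*x1*y1*x2*r^+5*w - 3*x1*y1*x2*y2^+2*r^+2*w + 3*x1*y1*x2^+2*r^+3*w^+3 - 7*x1*y1*x2^+2*r^+4*w - x1*y1*x2^+2*y2^+2*w^+3 - x1*y1*x2^+2*y2^+2*r*w - x1*y1*x2^+3*r^+2*w^+3 + 12*x1*y1*x2^+3*r^+3*w + x1*y1*x2^+3*y2^+2*w - 5*x1*y1*x2^+4*r^+2*w + 3*x1*y1*x2^+5*r*w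 - x1*y1*x2^+6*w - 3*x1^+2*y2*r^+4*w^+3 + 9*x1^+2*y2*r^+5*w - x1^+2*y2^+3*r^+2*w - x1^+2*x2*y2*r^+4*w - x1^+2*x2*y2^+3*r*w + 3*x1^+2*x2^+2*y2*r^+2*w^+3 + 3*x1^+2*x2^+2*y2*r^+3*w - x1^+2*x2^+3*y2*r^+2*w + 2*x1^+2*x2^+4*y2*r*w + 3*x1^+2*y1*r^+4*w^+3 - 7*x1^+2*y1*r^+5*w - x1^+2*y1*y2^+2*r*w^+3 + 4*x1^+2*y1*y2^+2*r^+2*w - x1^+2*y1*x2*r^+3*w^+3 + 8*x1^+2*y1*x2*r^+4*w + x1^+2*y1*x2*y2^+2*w^+3 + 4*x1^+2*y1*x2*y2^+2*r*w - 5*x1^+2*y1*x2^+2*r^+2*w^+3 - 2*x1^+2*y1*x2^+2*r^+3*w + 3*x1^+2*y1*x2^+3*r*w^+3 + 2*x1^+2*y1*x2^+3*r^+2*w - 3*x1^+2*y1*x2^+4*r*w + 2*x1^+2*y1*x2^+5*w + 3*x1^+3*y2*r^+3*w^+3 - 7*x1^+3*y2*r^+4*w + x1^+3*y2^+3*r*w - 11*x1^+3*x2*y2*r^+3*w + x1^+3*x2*y2^+3*w - 3*x1^+3*x2^+2*y2*r*w^+3 + 5*x1^+3*x2^+2*y2*r^+2*w - 7*x1^+3*x2^+3*y2*r*w - 3*x1^+3*y1*r^+3*w^+3 + 3*x1^+3*y1*r^+4*w - 4*x1^+3*y1*y2^+2*r*w + 5*x1^+3*y1*x2*r^+2*w^+3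 - 2*x1^+3*y1*x2*r^+3*w - 4*x1^+3*y1*x2*y2^+2*w + x1^+3*y1*x2^+2*r*w^+3 - 6*x1^+3*y1*x2^+2*r^+2*w - 3*x1^+3*y1*x2^+3*w^+3 + 6*x1^+3*y1*x2^+3*r*w - x1^+3*y1*x2^+4*w - 3*x1^+4*y2*r^+2*w^+3 + 13*x1^+4*y2*r^+3*w + 3*x1^+4*x2*y2*r^+2*w + 3*x1^+4*x2^+2*y2*w^+3 + 3*x1^+4*x2^+2*y2*r*w - 3*x1^+4*x2^+3*y2*w + x1^+4*y1*r^+2*w^+3 - 5*x1^+4*y1*r^+3*w - 3*x1^+4*y1*x2*r*w^+3 + 7*x1^+4*y1*x2*r^+2*w + 2*x1^+4*y1*x2^+2*w^+3 - x1^+4*y1*x2^+2*r*w + 3*x1^+4*y1*x2^+3*w + 3*x1^+5*y2*r*w^+3 - 4*x1^+5*y2*r^+2*w - 3*x1^+5*x2*y2*w^+3 - 2*x1^+5*x2*y2*r*w + 2*x1^+5*x2^+2*y2*w - x1^+5*y1*r*w^+3 + x1^+5*y1*x2*w^+3 - 4*x1^+5*y1*x2*r*w - 4*x1^+5*y1*x2^+2*w + 4*x1^+6*y2*r*w + 4*x1^+6*x2*y2*w)) * ((y2 ^+ 2) - ((x2 ^+ 3) + ((r ^+ 2) * x2)))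
  + ((- y1*x2^+3*r^+6*w + y1*x2^+4*r^+5*w - y1*x2^+5*r^+4*w + y1*x2^+6*r^+3*w + 3*x1*x2^+2*y2*r^+6*w - 3*x1*x2^+3*y2*r^+5*w + x1*x2^+4*y2*r^+4*w - x1*x2^+5*y2*r^+3*w - 2*x1*y1*x2^+2*r^+6*w + 3*x1*y1*x2^+3*r^+5*w - 3*x1*y1*x2^+4*r^+4*w + 3*x1*y1*x2^+5*r^+3*w - x1*y1*x2^+6*r^+2*w - 2*x1^+2*x2*y2*r^+6*w - x1^+2*x2^+2*y2*r^+5*w + 5*x1^+2*x2^+3*y2*r^+4*w - 3*x1^+2*x2^+4*y2*r^+3*w + x1^+2*x2^+5*y2*r^+2*w + 3*x1^+2*y1*x2*r^+6*w - x1^+2*y1*x2^+2*r^+5*w - 2*x1^+2*y1*x2^+3*r^+4*w + 2*x1^+2*y1*x2^+4*r^+3*w - 5*x1^+2*y1*x2^+5*r^+2*w + 3*x1^+2*y1*x2^+6*r*w - x1^+3*y2*r^+6*w + 3*x1^+3*x2*y2*r^+5*w - 2*x1^+3*x2^+2*y2*r^+4*w - 2*x1^+3*x2^+3*y2*r^+3*w + 3*x1^+3*x2^+4*y2*r^+2*w - x1^+3*x2^+5*y2*r*w - 3*x1^+3*y1*x2*r^+5*w + 5*x1^+3*y1*x2^+2*r^+4*w - 2*x1^+3*y1*x2^+3*r^+3*w + 2*x1^+3*y1*x2^+4*r^+2*w + x1^+3*y1*x2^+5*r*w - 3*x1^+3*y1*x2^+6*w + x1^+4*y2*r^+5*w -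 3*x1^+4*x2*y2*r^+4*w + 2*x1^+4*x2^+2*y2*r^+3*w + 2*x1^+4*x2^+3*y2*r^+2*w - 3*x1^+4*x2^+4*y2*r*w + x1^+4*x2^+5*y2*w + x1^+4*y1*x2*r^+4*w - 3*x1^+4*y1*x2^+2*r^+3*w + 3*x1^+4*y1*x2^+3*r^+2*w - 3*x1^+4*y1*x2^+4*r*w + 2*x1^+4*y1*x2^+5*w - x1^+5*y2*r^+4*w + 3*x1^+5*x2*y2*r^+3*w - 5*x1^+5*x2^+2*y2*r^+2*w + x1^+5*x2^+3*y2*r*w + 2*x1^+5*x2^+4*y2*w - x1^+5*y1*x2*r^+3*w + x1^+5*y1*x2^+2*r^+2*w - x1^+5*y1*x2^+3*r*w + x1^+5*y1*x2^+4*w + x1^+6*y2*r^+3*w - x1^+6*x2*y2*r^+2*w + 3*x1^+6*x2^+2*y2*r*w - 3*x1^+6*x2^+3*y2*w)) * ((w ^+ 2) - (2 * r)).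
  by ring.
rewrite g0 g1 g2 g3 g4 g5 g6 g7 g8 g9 g10 g11 !mulr0 ?addr0 in E.
have nM : ((1 - (((X1 * X2) * Y1) * Y2)) ^+ 1 * ((x3 ^+ 2) + (r ^+ 2)) ^+ 1 * ((x1 ^+ 2) + (r ^+ 2)) ^+ 1 * (x1 + r) ^+ 1 * ((x2 ^+ 2) + (r ^+ 2)) ^+ 1 * (x2 + r) ^+ 1 * (x2 - x1) ^+ 4) != 0.
  by repeat match goal with |- is_true ((_ ^+ _) != 0) => apply: expf_neq0; assumption | |- is_true ((_ * _) != 0) => apply: mulf_neq0 | |- is_true (1 != 0) => exact: oner_neq0 end.
by move/eqP: E; rewrite mulf_eq0 (negbTE nM) /= => /eqP.
Qed.

Lemma phi_dbl_X (F : fieldType) (x1 y1 r w l x3 y3 X1 Y1 X3 Y3 EE : F) :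
  (EE * (1 - (((X1 * X1) * Y1) * Y1))) = ((X1 * Y1) + (Y1 * X1)) ->
  (X3 * ((x3 ^+ 2) + (r ^+ 2))) = (w * y3) ->
  y3 = ((l * (x1 - x3)) - y1) ->
  x3 = (((l ^+ 2) - x1) - x1) ->
  (X1 * ((x1 ^+ 2) + (r ^+ 2))) = (w * y1) ->
  (Y1 * (x1 + r)) = (x1 - r) ->
  (l * (2 * y1)) = ((3 * (x1 ^+ 2)) + (r ^+ 2)) ->
  (y1 ^+ 2) = ((x1 ^+ 3) + ((r ^+ 2) * x1)) ->
  (w ^+ 2) = (2 * r) ->
  (1 - (((X1 * X1) * Y1) * Y1)) != 0 ->
  ((x3 ^+ 2) + (r ^+ 2)) != 0 ->
  ((x1 ^+ 2) + (r ^+ 2)) != 0 ->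
  (x1 + r) != 0 ->
  (2 * y1) != 0 ->
  EE = X3.
Proof.
move=> h0 h1 h2 h3 h4 h5 h6 h7 h8 n0 n1 n2 n3 n4.
have g0 : (EE * (1 - (((X1 * X1) * Y1) * Y1))) - ((X1 * Y1) + (Y1 * X1)) = 0 by rewrite h0 subrr.
have g1 : (X3 * ((x3 ^+ 2) + (r ^+ 2))) - (w * y3) = 0 by rewrite h1 subrr.
have g2 : y3 - ((l * (x1 - x3)) - y1) = 0 by rewrite h2 subrr.
have g3 : x3 - (((l ^+ 2) - x1) - x1) = 0 by rewrite h3 subrr.
have g4 : (X1 * ((x1 ^+ 2) + (r ^+ 2))) - (w * y1) = 0 by rewrite h4 subrr.
have g5 : (Y1 * (x1 + r)) - (x1 - r) = 0 by rewrite h5 subrr.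
have g6 : (l * (2 * y1)) - ((3 * (x1 ^+ 2)) + (r ^+ 2)) = 0 by rewrite h6 subrr.
have g7 : (y1 ^+ 2) - ((x1 ^+ 3) + ((r ^+ 2) * x1)) = 0 by rewrite h7 subrr.
have g8 : (w ^+ 2) - (2 * r) = 0 by rewrite h8 subrr.
apply/eqP; rewrite -subr_eq0; apply/eqP.
have E : ((1 - (((X1 * X1) * Y1) * Y1)) ^+ 1 * ((x3 ^+ 2) + (r ^+ 2)) ^+ 1 * ((x1 ^+ 2) + (r ^+ 2)) ^+ 2 * (x1 + r) ^+ 2 * (2 * y1) ^+ 4) * (EE - X3) =
  (((x3 ^+ 2) + (r ^+ 2)) ^+ 1 * ((x1 ^+ 2) + (r ^+ 2)) ^+ 2 * (x1 + r) ^+ 2 * (2 * y1) ^+ 4 * (1)) * ((EE * (1 - (((X1 * X1) * Y1) * Y1))) - ((X1 * Y1) + (Y1 * X1)))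
  + (((x1 ^+ 2) + (r ^+ 2)) ^+ 2 * (x1 + r) ^+ 2 * (2 * y1) ^+ 4 * (- 1 + X1^+2*Y1^+2)) * ((X3 * ((x3 ^+ 2) + (r ^+ 2))) - (w * y3))
  + (((x1 ^+ 2) + (r ^+ 2)) ^+ 2 * (x1 + r) ^+ 2 * (2 * y1) ^+ 4 * (- w + w*X1^+2*Y1^+2)) * (y3 - ((l * (x1 - x3)) - y1))
  + (((x1 ^+ 2) + (r ^+ 2)) ^+ 2 * (x1 + r) ^+ 2 * (2 * y1) ^+ 4 * (2*x3*X1*Y1 + 2*l^+2*X1*Y1 + w*l - w*l*X1^+2*Y1^+2 - 4*x1*X1*Y1)) * (x3 - (((l ^+ 2) - x1) - x1))
  + ((x1 + r) ^+ 2 * (2 * y1) ^+ 4 * (2*r^+2*l^+4*Y1 - r^+2*w*l^+3*X1*Y1^+2 + 2*r^+4*Y1 - y1*w^+2*l^+3*Y1^+2 - y1*r^+2*w*X1*Y1^+2 - y1^+2*w^+2*Y1^+2 - 8*x1*r^+2*l^+2*Y1 + 3*x1*r^+2*w*l*X1*Y1^+2 + 3*x1*y1*w^+2*l*Y1^+2 + 2*x1^+2*l^+4*Y1 - x1^+2*w*l^+3*X1*Y1^+2 + 10*x1^+2*r^+2*Y1 - x1^+2*y1*w*X1*Y1^+2 - 8*x1^+3*l^+2*Y1 + 3*x1^+3*w*l*X1*Y1^+2 + 8*x1^+4*Y1)) * ((X1 * ((x1 ^+ 2) + (r ^+ 2))) - (w * y1))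
  + ((2 * y1) ^+ 4 * (2*y1*r^+3*w*l^+4 + 2*y1*r^+5*w + y1^+2*r*w^+3*l^+3 - y1^+2*r*w^+3*l^+3*Y1 + y1^+3*r*w^+3 - y1^+3*r*w^+3*Y1 + 2*x1*y1*r^+2*w*l^+4 - 8*x1*y1*r^+3*w*l^+2 + 2*x1*y1*r^+4*w - x1*y1^+2*w^+3*l^+3 - x1*y1^+2*w^+3*l^+3*Y1 - 3*x1*y1^+2*r*w^+3*l + 3*x1*y1^+2*r*w^+3*l*Y1 - x1*y1^+3*w^+3 - x1*y1^+3*w^+3*Y1 + 2*x1^+2*y1*r*w*l^+4 - 8*x1^+2*y1*r^+2*w*l^+2 + 10*x1^+2*y1*r^+3*w + 3*x1^+2*y1^+2*w^+3*l + 3*x1^+2*y1^+2*w^+3*l*Y1 + 2*x1^+3*y1*w*l^+4 - 8*x1^+3*y1*r*w*l^+2 + 10*x1^+3*y1*r^+2*w - 8*x1^+4*y1*w*l^+2 + 8*x1^+4*y1*r*w + 8*x1^+5*y1*w)) * ((Y1 * (x1 + r)) - (x1 - r))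
  + ((- 2*y1^+3*r^+6*w^+3 - 16*y1^+4*r^+4*w*l^+3 - 4*y1^+4*r^+4*w^+3*l - 8*y1^+5*r^+2*w^+3*l^+2 + 4*x1*y1*r^+9*w + 8*x1*y1^+2*r^+7*w*l + 16*x1*y1^+3*r^+5*w*l^+2 + 4*x1*y1^+3*r^+5*w^+3 + 8*x1*y1^+3*r^+6*w + 8*x1*y1^+4*r^+3*w^+3*l + 64*x1*y1^+4*r^+4*w*l + 16*x1*y1^+5*r*w^+3*l^+2 + 24*x1*y1^+5*r^+2*w^+3 - 14*x1^+2*y1^+3*r^+4*w^+3 - 48*x1^+2*y1^+3*r^+5*w - 16*x1^+2*y1^+4*r^+2*w^+3*l - 8*x1^+2*y1^+5*w^+3*l^+2 - 48*x1^+2*y1^+5*r*w^+3 + 32*x1^+3*y1*r^+7*w + 40*x1^+3*y1^+2*r^+5*w*l + 32*x1^+3*y1^+3*r^+3*w*l^+2 + 24*x1^+3*y1^+3*r^+3*w^+3 + 24*x1^+3*y1^+3*r^+4*w + 24*x1^+3*y1^+4*r*w^+3*l + 24*x1^+3*y1^+5*w^+3 + 8*x1^+4*y1*r^+6*w + 16*x1^+4*y1^+2*r^+4*w*l + 32*x1^+4*y1^+3*r^+2*w*l^+2 - 30*x1^+4*y1^+3*r^+2*w^+3 - 96*x1^+4*y1^+3*r^+3*w + 16*x1^+4*y1^+4*w*l^+3 - 12*x1^+4*y1^+4*w^+3*l + 88*x1^+5*y1*r^+5*w + 56*x1^+5*y1^+2*r^+3*w*l + 16*x1^+5*y1^+3*r*w*l^+2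 + 36*x1^+5*y1^+3*r*w^+3 - 104*x1^+5*y1^+3*r^+2*w - 64*x1^+5*y1^+4*w*l + 56*x1^+6*y1*r^+4*w + 64*x1^+6*y1^+2*r^+2*w*l + 32*x1^+6*y1^+3*w*l^+2 - 18*x1^+6*y1^+3*w^+3 - 48*x1^+6*y1^+3*r*w + 96*x1^+7*y1*r^+3*w + 24*x1^+7*y1^+2*r*w*l - 120*x1^+7*y1^+3*w + 120*x1^+8*y1*r^+2*w + 48*x1^+8*y1^+2*w*l + 36*x1^+9*y1*r*w + 72*x1^+10*y1*w)) * ((l * (2 * y1)) - ((3 * (x1 ^+ 2)) + (r ^+ 2)))
  + ((- 2*y1*r^+8*w^+3 - 16*y1^+3*r^+6*w - 16*y1^+5*r^+2*w^+3 + 4*x1*y1*r^+7*w^+3 - 8*x1*y1*r^+8*w + 8*x1*y1^+3*r^+4*w^+3 + 32*x1*y1^+3*r^+5*w + 32*x1*y1^+5*r*w^+3 - 12*x1^+2*y1*r^+6*w^+3 - 16*x1^+2*y1*r^+7*w - 16*x1^+2*y1^+3*r^+3*w^+3 - 80*x1^+2*y1^+3*r^+4*w - 16*x1^+2*y1^+5*w^+3 + 20*x1^+3*y1*r^+5*w^+3 - 48*x1^+3*y1*r^+6*w + 64*x1^+3*y1^+3*r^+2*w^+3 + 64*x1^+3*y1^+3*r^+3*w - 144*x1^+4*y1*r^+5*w - 112*x1^+4*y1^+3*r*w^+3 + 80*x1^+4*y1^+3*r^+2*w - 20*x1^+5*y1*r^+3*w^+3 - 32*x1^+5*y1*r^+4*w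 + 56*x1^+5*y1^+3*w^+3 + 32*x1^+5*y1^+3*r*w + 12*x1^+6*y1*r^+2*w^+3 - 240*x1^+6*y1*r^+3*w + 144*x1^+6*y1^+3*w - 4*x1^+7*y1*r*w^+3 - 208*x1^+7*y1*r^+2*w + 2*x1^+8*y1*w^+3 - 112*x1^+8*y1*r*w - 216*x1^+9*y1*w)) * ((y1 ^+ 2) - ((x1 ^+ 3) + ((r ^+ 2) * x1)))
  + ((- 2*x1*y1*r^+10*w + 4*x1^+2*y1*r^+9*w - 14*x1^+3*y1*r^+8*w + 24*x1^+4*y1*r^+7*w - 12*x1^+5*y1*r^+6*w + 12*x1^+7*y1*r^+4*w - 24*x1^+8*y1*r^+3*w + 14*x1^+9*y1*r^+2*w - 4*x1^+10*y1*r*w + 2*x1^+11*y1*w)) * ((w ^+ 2) - (2 * r)).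
  by ring.
rewrite g0 g1 g2 g3 g4 g5 g6 g7 g8 !mulr0 ?addr0 in E.
have nM : ((1 - (((X1 * X1) * Y1) * Y1)) ^+ 1 * ((x3 ^+ 2) + (r ^+ 2)) ^+ 1 * ((x1 ^+ 2) + (r ^+ 2)) ^+ 2 * (x1 + r) ^+ 2 * (2 * y1) ^+ 4) != 0.
  by repeat match goal with |- is_true ((_ ^+ _) != 0) => apply: expf_neq0; assumption | |- is_true ((_ * _) != 0) => apply: mulf_neq0 | |- is_true (1 != 0) => exact: oner_neq0 end.
by move/eqP: E; rewrite mulf_eq0 (negbTE nM) /= => /eqP.
Qed.

Lemma phi_gen_Y (F : fieldType) (x1 y1 x2 y2 r w l x3 y3 X1 Y1 X2 Y2 X3 Y3 EE : F) :
  (EE * (1 + (((X1 * X2) * Y1) * Y2))) = ((Y1 * Y2) - (X1 * X2)) ->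
  (Y3 * (x3 + r)) = (x3 - r) ->
  y3 = ((l * (x1 - x3)) - y1) ->
  x3 = (((l ^+ 2) - x1) - x2) ->
  (X1 * ((x1 ^+ 2) + (r ^+ 2))) = (w * y1) ->
  (Y1 * (x1 + r)) = (x1 - r) ->
  (X2 * ((x2 ^+ 2) + (r ^+ 2))) = (w * y2) ->
  (Y2 * (x2 + r)) = (x2 - r) ->
  (l * (x2 - x1)) = (y2 - y1) ->
  (y1 ^+ 2) = ((x1 ^+ 3) + ((r ^+ 2) * x1)) ->
  (y2 ^+ 2) = ((x2 ^+ 3) + ((r ^+ 2) * x2)) ->
  (w ^+ 2) = (2 * r) ->
  (1 + (((X1 * X2) * Y1) * Y2)) != 0 ->
  (x3 + r) != 0 ->
  ((x1 ^+ 2) + (r ^+ 2)) != 0 ->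
  (x1 + r) != 0 ->
  ((x2 ^+ 2) + (r ^+ 2)) != 0 ->
  (x2 + r) != 0 ->
  (x2 - x1) != 0 ->
  EE = Y3.
Proof.
move=> h0 h1 h2 h3 h4 h5 h6 h7 h8 h9 h10 h11 n0 n1 n2 n3 n4 n5 n6.
have g0 : (EE * (1 + (((X1 * X2) * Y1) * Y2))) - ((Y1 * Y2) - (X1 * X2)) = 0 by rewrite h0 subrr.
have g1 : (Y3 * (x3 + r)) - (x3 - r) = 0 by rewrite h1 subrr.
have g2 : y3 - ((l * (x1 - x3)) - y1) = 0 by rewrite h2 subrr.
have g3 : x3 - (((l ^+ 2) - x1) - x2) = 0 by rewrite h3 subrr.
have g4 : (X1 * ((x1 ^+ 2) + (r ^+ 2))) - (w * y1) = 0 by rewrite h4 subrr.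
have g5 : (Y1 * (x1 + r)) - (x1 - r) = 0 by rewrite h5 subrr.
have g6 : (X2 * ((x2 ^+ 2) + (r ^+ 2))) - (w * y2) = 0 by rewrite h6 subrr.
have g7 : (Y2 * (x2 + r)) - (x2 - r) = 0 by rewrite h7 subrr.
have g8 : (l * (x2 - x1)) - (y2 - y1) = 0 by rewrite h8 subrr.
have g9 : (y1 ^+ 2) - ((x1 ^+ 3) + ((r ^+ 2) * x1)) = 0 by rewrite h9 subrr.
have g10 : (y2 ^+ 2) - ((x2 ^+ 3) + ((r ^+ 2) * x2)) = 0 by rewrite h10 subrr.
have g11 : (w ^+ 2) - (2 * r) = 0 by rewrite h11 subrr.
apply/eqP; rewrite -subr_eq0; apply/eqP.
have E : ((1 + (((X1 * X2) * Y1) * Y2)) ^+ 1 * (x3 + r) ^+ 1 * ((x1 ^+ 2) + (r ^+ 2)) ^+ 1 * (x1 + r) ^+ 1 * ((x2 ^+ 2) + (r ^+ 2)) ^+ 1 * (x2 + r) ^+ 1 * (x2 - x1) ^+ 2) * (EE - Y3) =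
  ((x3 + r) ^+ 1 * ((x1 ^+ 2) + (r ^+ 2)) ^+ 1 * (x1 + r) ^+ 1 * ((x2 ^+ 2) + (r ^+ 2)) ^+ 1 * (x2 + r) ^+ 1 * (x2 - x1) ^+ 2 * (1)) * ((EE * (1 + (((X1 * X2) * Y1) * Y2))) - ((Y1 * Y2) - (X1 * X2)))
  + (((x1 ^+ 2) + (r ^+ 2)) ^+ 1 * (x1 + r) ^+ 1 * ((x2 ^+ 2) + (r ^+ 2)) ^+ 1 * (x2 + r) ^+ 1 * (x2 - x1) ^+ 2 * (- 1 - X1*Y1*X2*Y2)) * ((Y3 * (x3 + r)) - (x3 - r))
  + (((x1 ^+ 2) + (r ^+ 2)) ^+ 1 * (x1 + r) ^+ 1 * ((x2 ^+ 2) + (r ^+ 2)) ^+ 1 * (x2 + r) ^+ 1 * (x2 - x1) ^+ 2 * 0) * (y3 - ((l * (x1 - x3)) - y1))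
  + (((x1 ^+ 2) + (r ^+ 2)) ^+ 1 * (x1 + r) ^+ 1 * ((x2 ^+ 2) + (r ^+ 2)) ^+ 1 * (x2 + r) ^+ 1 * (x2 - x1) ^+ 2 * (- 1 + Y1*Y2 - X1*X2 - X1*Y1*X2*Y2)) * (x3 - (((l ^+ 2) - x1) - x2))
  + ((x1 + r) ^+ 1 * ((x2 ^+ 2) + (r ^+ 2)) ^+ 1 * (x2 + r) ^+ 1 * (x2 - x1) ^+ 2 * (- l^+2*X2 - l^+2*Y1*X2*Y2 - r*X2 + r*Y1*X2*Y2 + x2*X2 + x2*Y1*X2*Y2 + x1*X2 + x1*Y1*X2*Y2)) * ((X1 * ((x1 ^+ 2) + (r ^+ 2))) - (w * y1))
  + (((x2 ^+ 2) + (r ^+ 2)) ^+ 1 * (x2 + r) ^+ 1 * (x2 - x1) ^+ 2 * (r^+2*l^+2*Y2 + r^+3*Y2 - x2*r^+2*Y2 - y1*w*l^+2*X2*Y2 + y1*r*w*X2*Y2 + y1*x2*w*X2*Y2 - x1*r^+2*Y2 + x1*y1*w*X2*Y2 + x1^+2*l^+2*Y2 + x1^+2*r*Y2 - x1^+2*x2*Y2 - x1^+3*Y2)) * ((Y1 * (x1 + r)) - (x1 - r))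
  + ((x2 + r) ^+ 1 * (x2 - x1) ^+ 2 * (- y1*r*w*l^+2 + y1*r*w*l^+2*Y2 - y1*r^+2*w - y1*r^+2*w*Y2 + y1*x2*r*w - y1*x2*r*w*Y2 - x1*y1*w*l^+2 - x1*y1*w*l^+2*Y2 + x1*y1*x2*w + x1*y1*x2*w*Y2 + x1^+2*y1*w + x1^+2*y1*w*Y2)) * ((X2 * ((x2 ^+ 2) + (r ^+ 2))) - (w * y2))
  + ((x2 - x1) ^+ 2 * (- r^+5*l^+2 - r^+6 + x2*r^+5 - x2^+2*r^+3*l^+2 - x2^+2*r^+4 + x2^+3*r^+3 + y1*y2*r*w^+2*l^+2 - y1*y2*r^+2*w^+2 - y1*x2*y2*r*w^+2 + x1*r^+4*l^+2 + 2*x1*r^+5 - x1*x2*r^+4 + x1*x2^+2*r^+2*l^+2 + 2*x1*x2^+2*r^+3 - x1*x2^+3*r^+2 - x1*y1*y2*w^+2*l^+2 + x1*y1*x2*y2*w^+2 - x1^+2*r^+3*l^+2 - 2*x1^+2*r^+4 + x1^+2*x2*r^+3 - x1^+2*x2^+2*r*l^+2 - 2*x1^+2*x2^+2*r^+2 + x1^+2*x2^+3*r + x1^+2*y1*y2*w^+2 + x1^+3*r^+2*l^+2 + 2*x1^+3*r^+3 - x1^+3*x2*r^+2 + x1^+3*x2^+2*l^+2 + 2*x1^+3*x2^+2*r - x1^+3*x2^+3 - x1^+4*r^+2 - x1^+4*x2^+2)) * ((Y2 * (x2 + r)) - (x2 - r))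
  + ((- 2*x2*y2*r^+5 - 2*x2^+2*r^+5*l - 2*x2^+3*y2*r^+3 - 2*x2^+4*r^+3*l - 2*y1*y2^+2*r^+2*w^+2 + 2*y1*x2*r^+5 - 2*y1*x2*y2*r^+2*w^+2*l + 2*y1*x2^+3*r^+3 + 2*y1^+2*y2*r^+2*w^+2 - 2*x1*y2*r^+5 - 2*x1*x2^+2*y2*r^+3 + 2*x1*y1*r^+5 + 2*x1*y1*y2*r^+2*w^+2*l - 2*x1*y1*x2*y2^+2*w^+2 + 2*x1*y1*x2^+2*r^+3 - 2*x1*y1*x2^+2*y2*w^+2*l + 2*x1*y1^+2*x2*y2*w^+2 + 2*x1^+2*r^+5*l - 2*x1^+2*x2*y2*r^+3 - 2*x1^+2*x2^+3*y2*r - 2*x1^+2*x2^+4*r*l + 2*x1^+2*y1*x2*r^+3 + 2*x1^+2*y1*x2*y2*w^+2*l + 2*x1^+2*y1*x2^+3*r - 2*x1^+3*y2*r^+3 - 2*x1^+3*x2^+2*y2*r + 2*x1^+3*y1*r^+3 + 2*x1^+3*y1*x2^+2*r + 2*x1^+4*r^+3*l + 2*x1^+4*x2^+2*r*l)) * ((l * (x2 - x1)) - (y2 - y1))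
  + ((4*y2^+2*r^+2*w^+2 - 2*x2*r^+5 - 2*x2^+3*r^+3 - 2*y1*y2*r^+2*w^+2 - 2*x1*r^+5 + 4*x1*x2*y2^+2*w^+2 - 2*x1*x2^+2*r^+3 - 2*x1*y1*x2*y2*w^+2 - 2*x1^+2*x2*r^+3 - 2*x1^+2*x2^+3*r - 2*x1^+3*r^+3 - 2*x1^+3*x2^+2*r)) * ((y1 ^+ 2) - ((x1 ^+ 3) + ((r ^+ 2) * x1)))
  + ((- 2*x2*r^+5 - 2*x2^+3*r^+3 - 2*y1*y2*r^+2*w^+2 + 4*x1*r^+4*w^+2 - 2*x1*r^+5 - 2*x1*x2^+2*r^+3 - 2*x1*y1*x2*y2*w^+2 + 4*x1^+2*x2*r^+2*w^+2 - 2*x1^+2*x2*r^+3 - 2*x1^+2*x2^+3*r + 4*x1^+3*r^+2*w^+2 - 2*x1^+3*r^+3 - 2*x1^+3*x2^+2*r + 4*x1^+4*x2*w^+2)) * ((y2 ^+ 2) - ((x2 ^+ 3) + ((r ^+ 2) * x2)))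
  + ((- 2*y1*x2*y2*r^+4 - 2*y1*x2^+3*y2*r^+2 + 4*x1*x2*r^+6 + 4*x1*x2^+3*r^+4 - 2*x1*y1*y2*r^+4 - 2*x1*y1*x2^+2*y2*r^+2 + 4*x1^+2*x2^+2*r^+4 + 4*x1^+2*x2^+4*r^+2 - 2*x1^+2*y1*x2*y2*r^+2 - 2*x1^+2*y1*x2^+3*y2 + 4*x1^+3*x2*r^+4 + 4*x1^+3*x2^+3*r^+2 - 2*x1^+3*y1*y2*r^+2 - 2*x1^+3*y1*x2^+2*y2 + 4*x1^+4*x2^+2*r^+2 + 4*x1^+4*x2^+4)) * ((w ^+ 2) - (2 * r)).
  by ring.
rewrite g0 g1 g2 g3 g4 g5 g6 g7 g8 g9 g10 g11 !mulr0 ?addr0 in E.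
have nM : ((1 + (((X1 * X2) * Y1) * Y2)) ^+ 1 * (x3 + r) ^+ 1 * ((x1 ^+ 2) + (r ^+ 2)) ^+ 1 * (x1 + r) ^+ 1 * ((x2 ^+ 2) + (r ^+ 2)) ^+ 1 * (x2 + r) ^+ 1 * (x2 - x1) ^+ 2) != 0.
  by repeat match goal with |- is_true ((_ ^+ _) != 0) => apply: expf_neq0; assumption | |- is_true ((_ * _) != 0) => apply: mulf_neq0 | |- is_true (1 != 0) => exact: oner_neq0 end.
by move/eqP: E; rewrite mulf_eq0 (negbTE nM) /= => /eqP.
Qed.

Lemma phi_dbl_Y (F : fieldType) (x1 y1 r w l x3 y3 X1 Y1 X3 Y3 EE : F) :
  (EE * (1 + (((X1 * X1) * Y1) * Y1))) = ((Y1 * Y1) - (X1 * X1)) ->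
  (Y3 * (x3 + r)) = (x3 - r) ->
  y3 = ((l * (x1 - x3)) - y1) ->
  x3 = (((l ^+ 2) - x1) - x1) ->
  (X1 * ((x1 ^+ 2) + (r ^+ 2))) = (w * y1) ->
  (Y1 * (x1 + r)) = (x1 - r) ->
  (l * (2 * y1)) = ((3 * (x1 ^+ 2)) + (r ^+ 2)) ->
  (y1 ^+ 2) = ((x1 ^+ 3) + ((r ^+ 2) * x1)) ->
  (w ^+ 2) = (2 * r) ->
  (1 + (((X1 * X1) * Y1) * Y1)) != 0 ->
  (x3 + r) != 0 ->
  ((x1 ^+ 2) + (r ^+ 2)) != 0 ->
  (x1 + r) != 0 ->
  (2 * y1) != 0 ->
  EE = Y3.
Proof.
move=> h0 h1 h2 h3 h4 h5 h6 h7 h8 n0 n1 n2 n3 n4.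
have g0 : (EE * (1 + (((X1 * X1) * Y1) * Y1))) - ((Y1 * Y1) - (X1 * X1)) = 0 by rewrite h0 subrr.
have g1 : (Y3 * (x3 + r)) - (x3 - r) = 0 by rewrite h1 subrr.
have g2 : y3 - ((l * (x1 - x3)) - y1) = 0 by rewrite h2 subrr.
have g3 : x3 - (((l ^+ 2) - x1) - x1) = 0 by rewrite h3 subrr.
have g4 : (X1 * ((x1 ^+ 2) + (r ^+ 2))) - (w * y1) = 0 by rewrite h4 subrr.
have g5 : (Y1 * (x1 + r)) - (x1 - r) = 0 by rewrite h5 subrr.
have g6 : (l * (2 * y1)) - ((3 * (x1 ^+ 2)) + (r ^+ 2)) = 0 by rewrite h6 subrr.
have g7 : (y1 ^+ 2) - ((x1 ^+ 3) + ((r ^+ 2) * x1)) = 0 by rewrite h7 subrr.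
have g8 : (w ^+ 2) - (2 * r) = 0 by rewrite h8 subrr.
apply/eqP; rewrite -subr_eq0; apply/eqP.
have E : ((1 + (((X1 * X1) * Y1) * Y1)) ^+ 1 * (x3 + r) ^+ 1 * ((x1 ^+ 2) + (r ^+ 2)) ^+ 2 * (x1 + r) ^+ 2 * (2 * y1) ^+ 2) * (EE - Y3) =
  ((x3 + r) ^+ 1 * ((x1 ^+ 2) + (r ^+ 2)) ^+ 2 * (x1 + r) ^+ 2 * (2 * y1) ^+ 2 * (1)) * ((EE * (1 + (((X1 * X1) * Y1) * Y1))) - ((Y1 * Y1) - (X1 * X1)))
  + (((x1 ^+ 2) + (r ^+ 2)) ^+ 2 * (x1 + r) ^+ 2 * (2 * y1) ^+ 2 * (- 1 - X1^+2*Y1^+2)) * ((Y3 * (x3 + r)) - (x3 - r))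
  + (((x1 ^+ 2) + (r ^+ 2)) ^+ 2 * (x1 + r) ^+ 2 * (2 * y1) ^+ 2 * 0) * (y3 - ((l * (x1 - x3)) - y1))
  + (((x1 ^+ 2) + (r ^+ 2)) ^+ 2 * (x1 + r) ^+ 2 * (2 * y1) ^+ 2 * (- 1 + Y1^+2 - X1^+2 - X1^+2*Y1^+2)) * (x3 - (((l ^+ 2) - x1) - x1))
  + ((x1 + r) ^+ 2 * (2 * y1) ^+ 2 * (- r^+2*l^+2*X1 - r^+2*l^+2*X1*Y1^+2 - r^+3*X1 + r^+3*X1*Y1^+2 - y1*w*l^+2 - y1*w*l^+2*Y1^+2 - y1*r*w + y1*r*w*Y1^+2 + 2*x1*r^+2*X1 + 2*x1*r^+2*X1*Y1^+2 + 2*x1*y1*w + 2*x1*y1*w*Y1^+2 - x1^+2*l^+2*X1 - x1^+2*l^+2*X1*Y1^+2 - x1^+2*r*X1 + x1^+2*r*X1*Y1^+2 + 2*x1^+3*X1 + 2*x1^+3*X1*Y1^+2)) * ((X1 * ((x1 ^+ 2) + (r ^+ 2))) - (w * y1))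
  + ((2 * y1) ^+ 2 * (- r^+5*l^+2 + r^+5*l^+2*Y1 - r^+6 + r^+6*Y1 + y1^+2*r*w^+2*l^+2 - y1^+2*r*w^+2*l^+2*Y1 - y1^+2*r^+2*w^+2 + y1^+2*r^+2*w^+2*Y1 + x1*r^+4*l^+2 + x1*r^+4*l^+2*Y1 + 3*x1*r^+5 - x1*r^+5*Y1 - x1*y1^+2*w^+2*l^+2 - x1*y1^+2*w^+2*l^+2*Y1 - x1*y1^+2*r*w^+2 + 3*x1*y1^+2*r*w^+2*Y1 - 2*x1^+2*r^+3*l^+2 + 2*x1^+2*r^+3*l^+2*Y1 - 4*x1^+2*r^+4 + 2*x1^+2*y1^+2*w^+2 + 2*x1^+2*y1^+2*w^+2*Y1 + 2*x1^+3*r^+2*l^+2 + 2*x1^+3*r^+2*l^+2*Y1 + 6*x1^+3*r^+3 - 2*x1^+3*r^+3*Y1 - x1^+4*r*l^+2 + x1^+4*r*l^+2*Y1 - 5*x1^+4*r^+2 - 3*x1^+4*r^+2*Y1 + x1^+5*l^+2 + x1^+5*l^+2*Y1 + 3*x1^+5*r - x1^+5*r*Y1 - 2*x1^+6 - 2*x1^+6*Y1)) * ((Y1 * (x1 + r)) - (x1 - r))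
  + ((- 2*y1^+2*r^+4*w^+2 - 4*y1^+3*r^+2*w^+2*l - 4*x1*r^+7 - 8*x1*y1*r^+5*l - 8*x1^+2*y1^+2*r^+2*w^+2 - 4*x1^+2*y1^+3*w^+2*l - 20*x1^+3*r^+5 - 16*x1^+3*y1*r^+3*l - 6*x1^+4*y1^+2*w^+2 - 28*x1^+5*r^+3 - 8*x1^+5*y1*r*l - 12*x1^+7*r)) * ((l * (2 * y1)) - ((3 * (x1 ^+ 2)) + (r ^+ 2)))
  + ((- 2*r^+6*w^+2 + 8*r^+7 - 14*x1^+2*r^+4*w^+2 + 56*x1^+2*r^+5 + 16*x1^+3*y1^+2*w^+2 - 14*x1^+4*r^+2*w^+2 + 88*x1^+4*r^+3 - 2*x1^+6*w^+2 + 40*x1^+6*r)) * ((y1 ^+ 2) - ((x1 ^+ 3) + ((r ^+ 2) * x1)))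
  + ((- 2*x1*r^+8 - 16*x1^+3*r^+6 - 28*x1^+5*r^+4 - 16*x1^+7*r^+2 - 2*x1^+9)) * ((w ^+ 2) - (2 * r)).
  by ring.
rewrite g0 g1 g2 g3 g4 g5 g6 g7 g8 !mulr0 ?addr0 in E.
have nM : ((1 + (((X1 * X1) * Y1) * Y1)) ^+ 1 * (x3 + r) ^+ 1 * ((x1 ^+ 2) + (r ^+ 2)) ^+ 2 * (x1 + r) ^+ 2 * (2 * y1) ^+ 2) != 0.
  by repeat match goal with |- is_true ((_ ^+ _) != 0) => apply: expf_neq0; assumption | |- is_true ((_ * _) != 0) => apply: mulf_neq0 | |- is_true (1 != 0) => exact: oner_neq0 end.
by move/eqP: E; rewrite mulf_eq0 (negbTE nM) /= => /eqP.
Qed.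


Definition nosqrt_m1 (F : fieldType) := forall i : F, i ^+ 2 != - 1.

Lemma sq_sum0 (F : fieldType) (hneg : nosqrt_m1 F) (a b : F) :
  a ^+ 2 + b ^+ 2 = 0 -> a = 0 /\ b = 0.
Proof.
move=> h.
have hb : b = 0.
  apply/eqP; apply: contraT => nb; have := hneg (a / b).
  rewrite expr_div_n.
  have -> : a ^+ 2 = - b ^+ 2.
    by transitivity ((a ^+ 2 + b ^+ 2) - b ^+ 2); [ring | rewrite h sub0r].
  by rewrite mulNr divff ?expf_neq0 ?eqxx.
split=> //; move: h; rewrite hb (expr2 0) mulr0 addr0 => /eqP.
by rewrite expf_eq0 => /andP[_ /eqP].
Qed.

Lemma one_sq_nz (F : fieldType) (hneg : nosqrt_m1 F) (y : F) : 1 + y ^+ 2 != 0.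
Proof. by apply: contra (hneg y); rewrite addrC addr_eq0. Qed.

Definition ed_on (F : fieldType) (P : F * F) : bool :=
  P.1 ^+ 2 + P.2 ^+ 2 == 1 - P.1 ^+ 2 * P.2 ^+ 2.

Definition eadd (F : fieldType) (P Q : F * F) : F * F :=
  ((P.1 * Q.2 + P.2 * Q.1) / (1 - P.1 * Q.1 * P.2 * Q.2),
   (P.2 * Q.2 - P.1 * Q.1) / (1 + P.1 * Q.1 * P.2 * Q.2)).

Lemma ed_complete (F : fieldType) (hneg : nosqrt_m1 F) (h2 : 2 != 0 :> F)
  (x1 y1 x2 y2 : F) : ed_on (x1, y1) -> ed_on (x2, y2) ->
  (1 - x1 * x2 * y1 * y2 != 0) /\ (1 + x1 * x2 * y1 * y2 != 0).
Proof.
rewrite /ed_on /= => /eqP c1 /eqP c2.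
set e := x1 * x2 * y1 * y2.
suff ne : e ^+ 2 != 1.
  have : (1 - e) * (1 + e) != 0.
    have -> : (1 - e) * (1 + e) = 1 - e ^+ 2 by ring.
    by rewrite subr_eq0 eq_sym.
  by rewrite mulf_eq0 negb_or => /andP[].
apply/negP => /eqP he.
have E1 : (x1 - e * y1) ^+ 2 + (x1 * y1 * (x2 + y2)) ^+ 2 = 0.
  transitivity ((x1 ^+ 2 + y1 ^+ 2 - (1 - x1 ^+ 2 * y1 ^+ 2))
     + x1 ^+ 2 * y1 ^+ 2 * (x2 ^+ 2 + y2 ^+ 2 - (1 - x2 ^+ 2 * y2 ^+ 2))
     + (e ^+ 2 - 1) * (y1 ^+ 2 - 1)); first by rewrite /e; ring.
  by rewrite c1 c2 he !subrr mulr0 mul0r !addr0.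
have E2 : (x1 + e * y1) ^+ 2 + (x1 * y1 * (x2 - y2)) ^+ 2 = 0.
  transitivity ((x1 ^+ 2 + y1 ^+ 2 - (1 - x1 ^+ 2 * y1 ^+ 2))
     + x1 ^+ 2 * y1 ^+ 2 * (x2 ^+ 2 + y2 ^+ 2 - (1 - x2 ^+ 2 * y2 ^+ 2))
     + (e ^+ 2 - 1) * (y1 ^+ 2 - 1)); first by rewrite /e; ring.
  by rewrite c1 c2 he !subrr mulr0 mul0r !addr0.
have [_ /eqP] := sq_sum0 hneg E1; have [_ /eqP] := sq_sum0 hneg E2.
have ee : e = (x1 * y1) * (x2 * y2) by rewrite /e; ring.
have enz : e != 0.
  by apply/eqP => e0; move: he; rewrite e0 (expr2 0) mulr0 => /eqP; rewrite eq_sym oner_eq0.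
move: enz; rewrite ee mulf_eq0 negb_or => /andP[n1 n2].
move=> d2 d1.
have {d1}d1 : x2 + y2 = 0 by apply/eqP; move: d1; rewrite mulf_eq0 (negbTE n1).
have {d2}d2 : x2 - y2 = 0 by apply/eqP; move: d2; rewrite mulf_eq0 (negbTE n1).
have e2x : 2 * x2 = (x2 + y2) + (x2 - y2) by ring.
move: e2x; rewrite d1 d2 addr0 => /eqP; rewrite mulf_eq0 (negbTE h2) /= => /eqP x20.
by move: n2; rewrite x20 mul0r eqxx.
Qed.

Lemma eadd0 (F : fieldType) (P : F * F) : eadd (0, 1) P = P.
Proof.
case: P => x y; rewrite /eadd /=.
by rewrite !(mul0r, mul1r, add0r, subr0, addr0, divr1).
Qed.

Lemma eaddC (F : fieldType) (P Q : F * F) : eadd P Q = eadd Q P.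
Proof.
rewrite /eadd; congr pair; congr (_ / _); ring.
Qed.

Lemma eaddP0 (F : fieldType) (P : F * F) : eadd P (0, 1) = P.
Proof. by rewrite eaddC eadd0. Qed.

Lemma eadd_assoc (F : fieldType) (hneg : nosqrt_m1 F) (h2 : 2 != 0 :> F)
  (P1 P2 P3 : F * F) : ed_on P1 -> ed_on P2 -> ed_on P3 ->
  ed_on (eadd P1 P2) -> ed_on (eadd P2 P3) ->
  eadd (eadd P1 P2) P3 = eadd P1 (eadd P2 P3).
Proof.
case: P1 => x1 y1; case: P2 => x2 y2; case: P3 => x3 y3 => o1 o2 o3 o12 o23.
have [b0 e0] := ed_complete hneg h2 o1 o2.
have [b1 e1] := ed_complete hneg h2 o2 o3.
set X12 := (x1 * y2 + y1 * x2) / (1 - x1 * x2 * y1 * y2).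
set Y12 := (y1 * y2 - x1 * x2) / (1 + x1 * x2 * y1 * y2).
set X23 := (x2 * y3 + y2 * x3) / (1 - x2 * x3 * y2 * y3).
set Y23 := (y2 * y3 - x2 * x3) / (1 + x2 * x3 * y2 * y3).
have o12' : ed_on (X12, Y12) by [].
have o23' : ed_on (X23, Y23) by [].
have [bl el] := ed_complete hneg h2 o12' o3.
have [br er] := ed_complete hneg h2 o1 o23'.
have n1 := one_sq_nz hneg y1; have n2 := one_sq_nz hneg y2; have n3 := one_sq_nz hneg y3.
move: o1 o2 o3; rewrite /ed_on /= => /eqP c1 /eqP c2 /eqP c3.
rewrite /eadd /= -/X12 -/Y12 -/X23 -/Y23.
congr pair.
- apply: (@ed_assoc_X _ x1 y1 x2 y2 x3 y3 X12 Y12 X23 Y23) => //; by rewrite divfK.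
- apply: (@ed_assoc_Y _ x1 y1 x2 y2 x3 y3 X12 Y12 X23 Y23) => //; by rewrite divfK.
Qed.


Definition phi (F : fieldType) (r w : F) (P : ec_point F) : F * F :=
  if P is Some (x, y) then (w * y / (x ^+ 2 + r ^+ 2), (x - r) / (x + r)) else (0, 1).

Lemma on_curve_nz (F : fieldType) (hneg : nosqrt_m1 F) (h2 : 2 != 0 :> F) (r w : F)
  (hr : r != 0) (hw : w ^+ 2 = 2 * r) (x y : F) :
  y ^+ 2 = x ^+ 3 + r ^+ 2 * x -> (x ^+ 2 + r ^+ 2 != 0) /\ (x + r != 0).
Proof.
move=> e; split.
  by apply/eqP => h; have [_ r0] := sq_sum0 hneg h; move: hr; rewrite r0 eqxx.
apply/eqP => h.
have xr : x = - r by rewrite -(addrK r x) h sub0r.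
have : y ^+ 2 + (w * r) ^+ 2 = 0 by rewrite e xr exprMn hw; ring.
move/(sq_sum0 hneg) => [_ /eqP]; rewrite mulf_eq0 (negbTE hr) orbF => /eqP w0.
by move: hw; rewrite w0 expr2 mul0r => /esym/eqP; rewrite mulf_eq0 (negbTE h2) (negbTE hr).
Qed.

Lemma phi_on (F : fieldType) (hneg : nosqrt_m1 F) (h2 : 2 != 0 :> F) (r w : F)
  (hr : r != 0) (hw : w ^+ 2 = 2 * r) (x y : F) :
  y ^+ 2 = x ^+ 3 + r ^+ 2 * x -> ed_on (phi r w (Some (x, y))).
Proof.
move=> e; have [n1 n2] := on_curve_nz hneg h2 hr hw e.
rewrite /ed_on /=; apply/eqP; apply: (@phi_on_cert _ x y r w) => //; by rewrite divfK.
Qed.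

Lemma curve_eq (F : fieldType) (a : F) (P : ec_point F) :
  on_curve a 0 P = if P is Some (x, y) then y ^+ 2 == x ^+ 3 + a * x else true.
Proof. by case: P => [[x y]|] //=; rewrite addr0. Qed.

Lemma same_x (F : fieldType) (a x y1 y2 : F) :
  y1 ^+ 2 = x ^+ 3 + a * x -> y2 ^+ 2 = x ^+ 3 + a * x -> y1 != - y2 -> y1 = y2.
Proof.
move=> e1 e2 ny; have : y1 ^+ 2 == y2 ^+ 2 by rewrite e1 e2.
by rewrite eqf_sqr (negbTE ny) orbF => /eqP.
Qed.

Lemma ec_add_on (F : fieldType) (h2 : 2 != 0 :> F) (a : F) (P Q : ec_point F) :
  on_curve a 0 P -> on_curve a 0 Q -> on_curve a 0 (ec_add a P Q).
Proof.
case: P => [[x1 y1]|] //; case: Q => [[x2 y2]|] //.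
rewrite !curve_eq => /eqP e1 /eqP e2 /=.
case: eqP => [ex|nx].
  subst x2; case: eqP => [//|ny].
  have ey := same_x e1 e2 (introN eqP ny); subst y2.
  have ny1 : 2 * y1 != 0.
    rewrite mulf_eq0 (negbTE h2) /=; apply/eqP => y0; apply: ny; by rewrite y0 oppr0.
  rewrite ?curve_eq /= ?addr0; apply/eqP.
  apply: (@wclos_dbl _ x1 y1 a ((3%:R * x1 ^+ 2 + a) / (2%:R * y1))) => //.
  by rewrite divfK.
rewrite ?curve_eq /= ?addr0; apply/eqP.
have nx' : x2 - x1 != 0 by rewrite subr_eq0; apply/eqP => h; apply: nx.
apply: (@wclos_gen _ x1 y1 x2 y2 a ((y2 - y1) / (x2 - x1))) => //.
by rewrite divfK.
Qed.

Lemma w_nz (F : fieldType) (h2 : 2 != 0 :> F) (r w : F) (hr : r != 0)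
  (hw : w ^+ 2 = 2 * r) : w != 0.
Proof.
apply/eqP => w0; move: hw; rewrite w0 expr2 mul0r => /esym/eqP.
by rewrite mulf_eq0 (negbTE h2) (negbTE hr).
Qed.

Lemma moeb_ne1 (F : fieldType) (h2 : 2 != 0 :> F) (r x : F) (hr : r != 0) :
  x + r != 0 -> (x - r) / (x + r) != 1.
Proof.
move=> nx; apply/eqP => h.
have h' : x - r = x + r by rewrite -[RHS]mul1r -h divfK.
have : 2 * r = (x + r) - (x - r) by ring.
rewrite h' subrr => /eqP; by rewrite mulf_eq0 (negbTE h2) (negbTE hr).
Qed.

Lemma phi_inj (F : fieldType) (hneg : nosqrt_m1 F) (h2 : 2 != 0 :> F) (r w : F)
  (hr : r != 0) (hw : w ^+ 2 = 2 * r) (P Q : ec_point F) :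
  on_curve (r ^+ 2) 0 P -> on_curve (r ^+ 2) 0 Q -> phi r w P = phi r w Q -> P = Q.
Proof.
case: P => [[x1 y1]|]; case: Q => [[x2 y2]|]; rewrite ?curve_eq //.
- move=> /eqP e1 /eqP e2 [hX hY].
  have [a1 b1] := on_curve_nz hneg h2 hr hw e1.
  have [a2 b2] := on_curve_nz hneg h2 hr hw e2.
  move/eqP: hY; rewrite eqr_div // => /eqP hY.
  have : 2 * r * (x1 - x2) = 0.
    transitivity ((x1 - r) * (x2 + r) - (x2 - r) * (x1 + r)); first by ring.
    by rewrite hY subrr.
  move/eqP; rewrite !mulf_eq0 (negbTE h2) (negbTE hr) /= subr_eq0 => /eqP ex.
  subst x2; move/(divIf a1): hX => /(mulfI (w_nz h2 hr hw)) ->; by [].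
- move=> /eqP e1 _ [_ hY]; have [_ b1] := on_curve_nz hneg h2 hr hw e1.
  by move: (moeb_ne1 h2 hr b1); rewrite hY eqxx.
- move=> _ /eqP e2 [_ hY]; have [_ b2] := on_curve_nz hneg h2 hr hw e2.
  by move: (moeb_ne1 h2 hr b2); rewrite -hY eqxx.
Qed.

Lemma phi_add (F : fieldType) (hneg : nosqrt_m1 F) (h2 : 2 != 0 :> F) (r w : F)
  (hr : r != 0) (hw : w ^+ 2 = 2 * r) (P Q : ec_point F) :
  on_curve (r ^+ 2) 0 P -> on_curve (r ^+ 2) 0 Q ->
  phi r w (ec_add (r ^+ 2) P Q) = eadd (phi r w P) (phi r w Q).
Proof.
case: P => [[x1 y1]|]; last by move=> _ _; rewrite eadd0.
case: Q => [[x2 y2]|]; last by move=> _ _; rewrite eaddP0.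
rewrite !curve_eq => /eqP e1 /eqP e2.
have [a1 b1] := on_curve_nz hneg h2 hr hw e1.
have [a2 b2] := on_curve_nz hneg h2 hr hw e2.
have o1 := phi_on hneg h2 hr hw e1; have o2 := phi_on hneg h2 hr hw e2.
set X1 := w * y1 / (x1 ^+ 2 + r ^+ 2); set Y1 := (x1 - r) / (x1 + r).
set X2 := w * y2 / (x2 ^+ 2 + r ^+ 2); set Y2 := (x2 - r) / (x2 + r).
have o1' : ed_on (X1, Y1) := o1; have o2' : ed_on (X2, Y2) := o2.
have [c12 d12] := ed_complete hneg h2 o1' o2'.
have [c11 d11] := ed_complete hneg h2 o1' o1'.
rewrite (_ : phi r w (Some (x1, y1)) = (X1, Y1)) // (_ : phi r w (Some (x2, y2)) = (X2, Y2)) //.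
rewrite /ec_add; case: eqP => [ex|nx].
  subst x2; case: eqP => [ey|ny].
    have hX : X1 = - X2 by rewrite /X1 /X2 ey mulrN mulNr.
    have hY : Y1 = Y2 by [].
    rewrite hX hY in d12 *; rewrite /eadd /=; congr pair.
      by rewrite mulNr (mulrC Y2) addNr mul0r.
    have -> : Y2 * Y2 - - X2 * X2 = 1 + - X2 * X2 * Y2 * Y2.
      move/eqP: o2'; rewrite /= => c.
      transitivity (X2 ^+ 2 + Y2 ^+ 2); first by ring.
      by rewrite c; ring.
    by rewrite divff.
  have ey := same_x e1 e2 (introN eqP ny); subst y2.
  have ny1 : 2 * y1 != 0.
    rewrite mulf_eq0 (negbTE h2) /=; apply/eqP => y0; apply: ny; by rewrite y0 oppr0.
  pose l := (3%:R * x1 ^+ 2 + r ^+ 2) / (2%:R * y1).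
  pose x3 := l ^+ 2 - x1 - x1; pose y3 := l * (x1 - x3) - y1.
  have hl : l * (2 * y1) = 3 * x1 ^+ 2 + r ^+ 2 by rewrite divfK.
  have e3 : y3 ^+ 2 = x3 ^+ 3 + r ^+ 2 * x3.
    exact: (@wclos_dbl _ x1 y1 (r ^+ 2) l x3 y3).
  have [a3 b3] := on_curve_nz hneg h2 hr hw e3.
  have : phi r w (Some (x3, y3)) = eadd (X1, Y1) (X1, Y1).
    rewrite /phi /eadd /=; congr pair; symmetry.
      apply: (@phi_dbl_X _ x1 y1 r w l x3 y3 X1 Y1 (w * y3 / (x3 ^+ 2 + r ^+ 2)) 0) => //;
        by rewrite divfK.
    apply: (@phi_dbl_Y _ x1 y1 r w l x3 y3 X1 Y1 0 ((x3 - r) / (x3 + r))) => //;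
      by rewrite divfK.
  by [].
have nx' : x2 - x1 != 0 by rewrite subr_eq0; apply/eqP => h; apply: nx.
pose l := (y2 - y1) / (x2 - x1).
pose x3 := l ^+ 2 - x1 - x2; pose y3 := l * (x1 - x3) - y1.
have hl : l * (x2 - x1) = y2 - y1 by rewrite divfK.
have e3 : y3 ^+ 2 = x3 ^+ 3 + r ^+ 2 * x3.
  exact: (@wclos_gen _ x1 y1 x2 y2 (r ^+ 2) l x3 y3).
have [a3 b3] := on_curve_nz hneg h2 hr hw e3.
have : phi r w (Some (x3, y3)) = eadd (X1, Y1) (X2, Y2).
  rewrite /phi /eadd /=; congr pair; symmetry.
    apply: (@phi_gen_X _ x1 y1 x2 y2 r w l x3 y3 X1 Y1 X2 Y2 (w * y3 / (x3 ^+ 2 + r ^+ 2)) 0) => //;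
      by rewrite divfK.
  apply: (@phi_gen_Y _ x1 y1 x2 y2 r w l x3 y3 X1 Y1 X2 Y2 0 ((x3 - r) / (x3 + r))) => //;
    by rewrite divfK.
by [].
Qed.


Definition good (F : fieldType) (a r w : F) : Prop :=
  [/\ nosqrt_m1 F, 2 != 0 :> F, a = r ^+ 2, r != 0 & w ^+ 2 = 2 * r].

Lemma phi_on' (F : fieldType) (hneg : nosqrt_m1 F) (h2 : 2 != 0 :> F) (r w : F)
  (hr : r != 0) (hw : w ^+ 2 = 2 * r) (P : ec_point F) :
  on_curve (r ^+ 2) 0 P -> ed_on (phi r w P).
Proof.
case: P => [[x y]|]; rewrite curve_eq; last by move=> _; apply/eqP; rewrite /=; ring.
by move/eqP; apply: phi_on.
Qed.

Lemma ec_assoc (F : fieldType) (a r w : F) (H : good a r w) (P Q R : ec_point F) :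
  on_curve a 0 P -> on_curve a 0 Q -> on_curve a 0 R ->
  ec_add a (ec_add a P Q) R = ec_add a P (ec_add a Q R).
Proof.
case: H => hneg h2 ha hr hw; subst a => oP oQ oR.
have oPQ := ec_add_on h2 oP oQ; have oQR := ec_add_on h2 oQ oR.
apply: (phi_inj hneg h2 hr hw); try exact: ec_add_on.
rewrite !phi_add //.
have ePQ : ed_on (eadd (phi r w P) (phi r w Q)).
  by rewrite -phi_add //; apply: phi_on'.
have eQR : ed_on (eadd (phi r w Q) (phi r w R)).
  by rewrite -phi_add //; apply: phi_on'.
by apply: eadd_assoc => //; apply: phi_on'.
Qed.

Lemma ec_addC (F : fieldType) (a r w : F) (H : good a r w) (P Q : ec_point F) :
  on_curve a 0 P -> on_curve a 0 Q -> ec_add a P Q = ec_add a Q P.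
Proof.
case: H => hneg h2 ha hr hw; subst a => oP oQ.
apply: (phi_inj hneg h2 hr hw); try exact: ec_add_on.
by rewrite !phi_add // eaddC.
Qed.

Definition ec_neg (F : fieldType) (P : ec_point F) : ec_point F :=
  if P is Some (x, y) then Some (x, - y) else None.

Lemma ec_neg_on (F : fieldType) (a : F) (P : ec_point F) :
  on_curve a 0 P -> on_curve a 0 (ec_neg P).
Proof. by case: P => [[x y]|] //=; rewrite sqrrN. Qed.

Lemma ec_negK (F : fieldType) (a : F) (P : ec_point F) : ec_add a (ec_neg P) P = None.
Proof. by case: P => [[x y]|] //=; rewrite !eqxx. Qed.

Definition pts (F : finFieldType) (a r w : F) (H : good a r w) :=
  {P : ec_point F | on_curve a 0 P}.

HB.instance Definition _ (F : finFieldType) (a r w : F) (H : good a r w) :=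
  Finite.copy (pts H) {P : ec_point F | on_curve a 0 P}.

Section G.
Variables (F : finFieldType) (a r w : F) (H : good a r w).

Definition p2 : 2 != 0 :> F. Proof. by case: H. Qed.

Definition padd (P Q : pts H) : pts H :=
  exist _ (ec_add a (val P) (val Q)) (ec_add_on p2 (valP P) (valP Q)).
Definition pneg (P : pts H) : pts H := exist _ (ec_neg (val P)) (ec_neg_on (valP P)).
Definition pzero : pts H := exist _ None (erefl true).

Lemma paddA : associative padd.
Proof. move=> P Q R; apply: val_inj => /=; symmetry; apply: (ec_assoc H); exact: valP. Qed.
Lemma padd0 : left_id pzero padd.
Proof. by move=> P; apply: val_inj. Qed.
Lemma paddV : left_inverse pzero pneg padd.
Proof. by move=> P; apply: val_inj => /=; rewrite ec_negK. Qed.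
End G.

HB.instance Definition _ (F : finFieldType) (a r w : F) (H : good a r w) :=
  Finite_isGroup.Build (pts H) (@paddA F a r w H) (@padd0 F a r w H) (@paddV F a r w H).

Lemma val_expg (F : finFieldType) (a r w : F) (H : good a r w) (P : pts H) (k : nat) :
  val (P ^+ k)%g = ec_mul a k (val P).
Proof.
elim: k => [|k IH]; first by rewrite expg0.
by rewrite expgS /= IH.
Qed.

Lemma pts_abelian (F : finFieldType) (a r w : F) (H : good a r w) :
  abelian [set: pts H].
Proof.
apply/centsP => P _ Q _; apply: val_inj => /=; apply: (ec_addC H); exact: valP.
Qed.


Lemma sq_or_negsq (F : finFieldType) (hneg : nosqrt_m1 F) (c : F) :
  c != 0 -> (exists d, d ^+ 2 = c) \/ (exists d, d ^+ 2 = - c).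
Proof.
move=> nc.
set N := #|F|.-1.
have cardF : #|F| = N.+1 by rewrite /N prednK //; apply/card_gt0P; exists 0.
have unity : forall x : F, x != 0 -> x ^+ N = 1.
  move=> x nx; apply: (mulIf nx); rewrite mul1r -exprSr -cardF.
  exact: expf_card.
pose rs := enum (predC1 (0 : F)).
have srs : size rs = N by rewrite /rs -cardE cardC1.
have cin : c \in rs by rewrite mem_enum inE.
have Npos : (0 < N)%N by rewrite -srs -has_predT; apply/hasP; exists c.
have : has N.-primitive_root rs.
  apply: has_prim_root => //; last by rewrite srs.
    by apply/allP => x; rewrite mem_enum inE => nx; rewrite unity_rootE unity.
  exact: enum_uniq.
case/hasP => g _ pg.
have sqE : forall k, ~~ odd k -> (g ^+ k./2) ^+ 2 = g ^+ k.
  move=> k ok; rewrite -exprM muln2.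
  by rewrite -{2}(odd_double_half k) (negbTE ok) add0n.
have [i ci] := prim_rootP pg (unity c nc).
have nm1 : (- 1 : F) != 0 by rewrite oppr_eq0 oner_eq0.
have [j mj] := prim_rootP pg (unity _ nm1).
case: (boolP (odd i)) => oi; last by left; exists (g ^+ i./2); rewrite sqE.
case: (boolP (odd j)) => oj; last first.
  by have := hneg (g ^+ j./2); rewrite sqE // -mj eqxx.
right; exists (g ^+ (i + j)./2).
rewrite sqE; last by rewrite oddD oi oj.
by rewrite exprD -ci -mj mulrN1.
Qed.

Lemma card_sqrt (F : finFieldType) (hneg : nosqrt_m1 F) (h2 : 2 != 0 :> F) (c : F) :
  (#|[set y : F | y ^+ 2 == c]| + #|[set y : F | y ^+ 2 == - c]|)%N = 2%N.
Proof.
have two : forall d : F, d != 0 -> #|[set y : F | y ^+ 2 == d ^+ 2]| = 2%N.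
  move=> d nd; have -> : [set y : F | y ^+ 2 == d ^+ 2] = [set d; - d].
    by apply/setP => y; rewrite !inE eqf_sqr.
  rewrite cards2; suff -> : d != - d by [].
  rewrite -addr_eq0 -mulr2n -mulr_natl mulf_eq0 negb_or h2 /=; exact: nd.
have zero : forall d c : F, d != 0 -> d ^+ 2 = - c -> #|[set y : F | y ^+ 2 == c]| = 0%N.
  move=> d c' nd hd; apply/eqP; rewrite cards_eq0; apply/eqP/setP => y; rewrite !inE.
  apply/negP => /eqP hy; have := hneg (y / d).
  by rewrite expr_div_n hy -[c'](opprK) -hd mulNr divff ?expf_neq0 // eqxx.
case: (eqVneq c 0) => [->|nc].
  rewrite oppr0; have -> : [set y : F | y ^+ 2 == 0] = [set 0].
    by apply/setP => y; rewrite !inE expf_eq0.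
  by rewrite cards1.
case: (sq_or_negsq hneg nc) => [[d hd]|[d hd]].
  have nd : d != 0 by apply: contra_neq nc => d0; rewrite -hd d0 expr0n.
  rewrite -hd two // (zero d) ?addn0 //.
  by rewrite opprK.
have nd : d != 0.
  by apply: contra_neq nc => d0; apply/eqP; rewrite -oppr_eq0 -hd d0 expr0n.
by rewrite (zero d c) // -hd two.
Qed.

Lemma count_curve (F : finFieldType) (hneg : nosqrt_m1 F) (h2 : 2 != 0 :> F) (a : F) :
  #|[set P : ec_point F | on_curve a 0 P]| = #|F|.+1.
Proof.
pose f := fun x : F => x ^+ 3 + a * x.
pose B := [set xy : F * F | xy.2 ^+ 2 == f xy.1].
have -> : [set P : ec_point F | on_curve a 0 P] = None |: (Some @: B).
  apply/setP => -[xy|]; rewrite !inE //=.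
  rewrite mem_imset; last by move=> ? ? [].
  by rewrite inE; case: xy => x y /=; rewrite ?addr0.
rewrite cardsU1 card_imset; last by move=> ? ? [].
have -> : None \notin Some @: B by apply/imsetP => -[xy _].
rewrite add1n; congr S.
have -> : #|B| = (\sum_x #|[set y : F | y ^+ 2 == f x]|)%N.
  rewrite -sum1dep_card; symmetry.
  under eq_bigr => x _ do rewrite -sum1dep_card.
  by rewrite pair_big_dep /=.
set S := (\sum_x _)%N.
have SS : (S + S = #|F| * 2)%N.
  rewrite {2}/S (reindex_inj (@oppr_inj F)) /= -big_split /=.
  rewrite -sum_nat_const; apply: eq_bigr => x _.
  have -> : f (- x) = - f x by rewrite /f; ring.
  exact: card_sqrt.
lia.
Qed.


Lemma pts_comm (F : finFieldType) (a r w : F) (H : good a r w) (g h : pts H) :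
  commute g h.
Proof. apply: val_inj => /=; apply: (ec_addC H); exact: valP. Qed.

Lemma pts_invol (F : finFieldType) (a r w : F) (H : good a r w) (g : pts H) :
  (g * g = 1)%g -> g = 1%g \/ val g = Some (0, 0).
Proof.
have [hneg h2 ha hr hw] := H.
move=> E; have : ec_add a (val g) (val g) = None := congr1 val E.
case: g {E} => [[[x y]|] og] /= E; last by left; apply: val_inj.
right; move: E; rewrite eqxx; case: eqP => // ey _.
have y0 : y = 0.
  have : 2 * y = 0 by rewrite mulr_natl mulr2n {1}ey addNr.
  by move/eqP; rewrite mulf_eq0 (negbTE h2) => /eqP.
move: og; rewrite curve_eq y0 ha => /eqP e.
have [n1 _] := on_curve_nz hneg h2 hr hw e.
have : x * (x ^+ 2 + r ^+ 2) = 0 ^+ 2 by rewrite e; ring.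
rewrite (expr2 0) mulr0.
by move/eqP; rewrite mulf_eq0 (negbTE n1) orbF => /eqP ->.
Qed.

Lemma pts_not_sq (F : finFieldType) (a r w : F) (H : good a r w) (t : F)
  (ha : a = - (t ^+ 2 + 1)) (g : pts H) : val (g * g)%g <> Some (-1, t).
Proof.
have [hneg h2 _ _ _] := H.
have -> : val (g * g)%g = ec_add a (val g) (val g) by [].
case: g => [[[x y]|] og] //=; rewrite eqxx; case: eqP => // ny.
move=> [e1 _].
have ny1 : 2 * y != 0.
  rewrite mulf_eq0 (negbTE h2) /=; apply/eqP => y0; apply: ny; by rewrite y0 oppr0.
move: og; rewrite curve_eq => /eqP e.
have := (@wdbl_sq _ x y a ((3%:R * x ^+ 2 + a) / (2%:R * y)) _ 0 erefl (divfK ny1 _) e ny1).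
rewrite e1 mulN1r => E.
have : (x ^+ 2 - a) ^+ 2 + (2 * y) ^+ 2 = 0 by rewrite -E; ring.
by move/(sq_sum0 hneg) => [_ /eqP]; rewrite (negbTE ny1).
Qed.

Lemma Fp_facts (p : nat) (hp : prime p) (hp3 : (p %% 4 = 3)%N) :
  (2 != 0 :> 'F_p) /\ nosqrt_m1 'F_p.
Proof.
have h2 : (2 != 0 :> 'F_p).
  rewrite -(dvdn_pcharf (pchar_Fp hp)); apply/negP => /dvdn_leq => le2.
  have := prime_gt1 hp; lia.
split=> // i; apply/eqP => hi.
have i0 : i != 0.
  apply/eqP => i0; move: hi; rewrite i0 (expr2 0) mulr0 => /eqP.
  by rewrite eq_sym oppr_eq0 oner_eq0.
pose q := (p %/ 4)%N; pose h := (q.*2).+1.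
have hp' : p = (h.*2).+1 by rewrite /h /q; have := divn_eq p 4; lia.
have oh : odd h by rewrite /h /= odd_double.
have : i ^+ p = - i.
  have -> : i ^+ p = i ^+ (h.*2).+1 by rewrite -hp'.
  rewrite exprS -mul2n exprM hi -signr_odd oh expr1 mulrN1.
  by [].
have := expf_card i; rewrite card_Fp // => -> /eqP.
rewrite -addr_eq0 -mulr2n -mulr_natl mulf_eq0 (negbTE h2) (negbTE i0).
by [].
Qed.

Lemma find_rw (F : finFieldType) (hneg : nosqrt_m1 F) (h2 : 2 != 0 :> F) (t : F)
  (hsq : ~ exists s : F, s ^+ 2 = t ^+ 2 + 1) :
  exists r w : F, good (- (t ^+ 2 + 1)) r w.
Proof.
have s0 : t ^+ 2 + 1 != 0.
  by apply/eqP => s0; apply: hsq; exists 0; rewrite s0 (expr2 0) mulr0.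
case: (sq_or_negsq hneg s0) => [hs|[r0 hr0]]; first by exfalso; apply: hsq.
have r00 : r0 != 0.
  by apply: contra_neq s0 => r0z; apply/eqP; rewrite -oppr_eq0 -hr0 r0z (expr2 0) mulr0.
have nr : 2 * r0 != 0 by rewrite mulf_neq0.
case: (sq_or_negsq hneg nr) => [[w hw]|[w hw]].
  by exists r0, w; split.
exists (- r0), w; split => //.
- by rewrite sqrrN.
- by rewrite oppr_eq0.
- by rewrite hw mulrN.
Qed.

Local Close Scope ring_scope.

Lemma main_gen (F : finFieldType) (a r w : F) (H : good a r w) (t : F)
  (ha : a = (- (t ^+ 2 + 1))%R) (m n : nat) (hm : 0 < m) (hmodd : odd m)
  (hcard : #|F|.+1 = m * 2 ^ n) :
  generates_2sylow a 0%R (ec_mul a m (Some ((-1)%R, t))).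
Proof.
have [hneg h2 ha' hr hw] := H.
have on0 : on_curve a 0%R (Some ((-1)%R, t)) by rewrite curve_eq ha; apply/eqP; ring.
pose P0 : pts H := exist _ (Some ((-1)%R, t)) on0.
have on00 : on_curve a 0%R (Some (0%R, 0%R)) by rewrite curve_eq; apply/eqP; ring.
pose T0 : pts H := exist _ (Some (0%R, 0%R)) on00.
have cardG : #|{: pts H}| = (m * 2 ^ n)%N.
  rewrite -hcard -(count_curve hneg h2 a) cardsE.
  exact: card_sig.
have ab := pts_abelian H.
have hall := nilpotent_pcore_Hall 2 (abelian_nil ab).
have nS := pcore_normal 2 [set: pts H].
set S := 'O_2([set: pts H])%G.
have cardS : #|S| = (2 ^ n)%N.
  rewrite (card_Hall hall) cardsT cardG partnM ?expn_gt0 //.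
  rewrite part_p'nat ?mul1n; last by rewrite p'natE // dvdn2 hmodd.
  by rewrite part_pnat_id // pnatX pnat_id.
have memS : forall x : pts H, (x \in S) = (2.-elt x)%g.
  by move=> x; rewrite (mem_normal_Hall hall nS) // inE.
have pS : (2.-group S)%g := pcore_pgroup 2 _.
have abS : abelian S := abelianS (pcore_sub 2 _) ab.
have cycS : cyclic S.
  rewrite (abelian_rank1_cyclic abS) (rank_pgroup pS) (p_rank_abelian 2 abS).
  have abO : abelian 'Ohm_1(S)%g := abelianS (Ohm_sub 1 S) abS.
  rewrite (OhmEabelian pS abO).
  have : #|'Ldiv_(2 ^ 1)(S)%g| <= 2.
    apply: leq_trans (_ : #|[set 1%g; T0]| <= 2); last by rewrite cards2.
    apply: subset_leq_card; apply/subsetP => g; rewrite !inE => /andP[_ /eqP g2].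
    have [->|vg] := pts_invol (g2 : (g * g)%g = 1%g); first by rewrite eqxx.
    by rewrite (_ : g = T0) ?eqxx ?orbT //; apply: val_inj.
  have : 0 < #|'Ldiv_(2 ^ 1)(S)%g| by apply/card_gt0P; exists 1%g; rewrite !inE group1 expg1n eqxx.
  case: #|_| => [|[|[|k]]] //= _ _; by rewrite ?logn1 ?(logn_prime 2).
have [g Sg] := cyclicP cycS.
have ordg : #[g]%g = (2 ^ n)%N by rewrite orderE -Sg cardS.
pose x := (P0.`_2)%g; pose y := (P0.`_(2^'))%g.
have P0xy : P0 = (x * y)%g by rewrite consttC.
have xS : x \in S by rewrite memS; exact: p_elt_constt.
move: (xS); rewrite Sg => /cycleP [j xj].
have ey : (2^'.-elt y)%g := p_elt_constt 2^' P0.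
have oy : odd #[y]%g.
  move: ey; rewrite /p_elt p'natE // dvdn2 negbK.
  by [].
clearbody x y.
have oj : odd j.
  case: (boolP (odd j)) => // ej; exfalso; apply: (@pts_not_sq _ _ _ _ H t ha ((g ^+ j./2) * y ^+ (#[y].+1)./2)%g).
  rewrite (_ : forall z : pts H, (z * z = z ^+ 2)%g); last by move=> z; rewrite expgS expg1.
  rewrite expgMn; last exact: pts_comm.
  have ej2 : (j./2).*2 = j by rewrite -[RHS]odd_double_half (negbTE ej) add0n.
  rewrite -!expgM !muln2 ej2.
  have -> : ((#[y]%g).+1)./2.*2 = (#[y]%g).+1.
    by rewrite -[RHS]odd_double_half /= oy.
  by rewrite expgS expg_order mulg1 -xj -P0xy.
have ox : #[x]%g = (2 ^ n)%N.
  rewrite xj orderXgcd ordg.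
  have -> : gcdn (2 ^ n) j = 1%N by apply/eqP; apply: (@coprimeXl n 2 j); rewrite coprime2n.
  by rewrite divn1.
have ym : (y ^+ m = 1)%g.
  apply/eqP; rewrite -order_dvdn.
  have : #[y]%g %| m * 2 ^ n by rewrite -cardG -cardsT order_dvdG ?inE.
  rewrite mulnC Gauss_dvdr //.
  apply: (@p'nat_coprime 2); first exact: ey.
  by rewrite pnatX pnat_id.
pose Q := (P0 ^+ m)%g.
have Qx : Q = (x ^+ m)%g.
  by rewrite /Q P0xy expgMn ?ym ?mulg1 //; exact: pts_comm.
have oQ : #[Q]%g = (2 ^ n)%N.
  rewrite Qx orderXgcd ox.
  have -> : gcdn (2 ^ n) m = 1%N by apply/eqP; apply: (@coprimeXl n 2 m); rewrite coprime2n.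
  by rewrite divn1.
have QS : Q \in S by rewrite Qx groupX.
have SQ : (S :=: <[Q]>)%g.
  apply/eqP; rewrite eq_sym eqEcard cycle_subG QS /= -orderE oQ cardS leqnn.
  by [].
have vQ : ec_mul a m (Some ((-1)%R, t)) = val Q by rewrite val_expg.
rewrite vQ; split.
  split; first exact: valP.
  by exists n; rewrite -val_expg -oQ expg_order.
move=> R [oR [k hk]].
pose R' : pts H := exist _ R oR.
have : R' \in S.
  rewrite memS /p_elt; apply: (@pnat_dvd _ (2 ^ k)); last by rewrite pnatX pnat_id.
  rewrite order_dvdn; apply/eqP/val_inj; by rewrite val_expg.
rewrite SQ => /cycleP [j' hj'].
by exists j'; rewrite -val_expg -hj'.
Qed.

Local Open Scope ring_scope.
Unset Implicit Arguments.

Theorem corollary1 (m n : nat) (hm : (0 < m)%N) (hmodd : odd m) (hn : (1 < n)%N)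
  (hp : prime (m * 2 ^ n - 1)) (t : 'F_(m * 2 ^ n - 1))
  (hsq : ~ exists s : 'F_(m * 2 ^ n - 1), s ^+ 2 = t ^+ 2 + 1) :
  generates_2sylow (- (t ^+ 2 + 1)) 0 (ec_mul (- (t ^+ 2 + 1)) m (Some (-1, t))).
Proof.
have hK : (2 ^ n = 4 * 2 ^ (n - 2))%N by rewrite -{1}(subnKC hn) expnD.
have Kpos : (0 < m * 2 ^ (n - 2))%N by rewrite muln_gt0 hm expn_gt0.
have p3 : ((m * 2 ^ n - 1) %% 4 = 3)%N.
  rewrite hK mulnCA; move: Kpos; generalize (m * 2 ^ (n - 2))%N => K HK.
  have -> : (4 * K - 1 = (K - 1) * 4 + 3)%N by lia.
  by rewrite modnMDl.
have [h2 hneg] := Fp_facts hp p3.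
have [r [w H]] := find_rw hneg h2 hsq.
apply: (@main_gen _ _ r w H t erefl m n hm hmodd).
rewrite card_Fp //; move: Kpos; rewrite hK mulnCA; generalize (m * 2 ^ (n - 2))%N => K HK. lia.
Qed.
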